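(* Every element of $\widehat{\Pi}_{4/4,4}$ can be written as \[ \psi_a(z)=\frac{\left(a^4-4a^3+3a^2-\frac{2a}{3}+\frac1{24}\right)z^4+\left(-4a^3+6a^2-2a+\frac16\right)z^3+\left(6a^2-4a+\frac12\right)z^2+(1-4a)z+1}{(1-az)^4},\qquad a\in\mathbb{R}. \] Then $\widehat{R}_{4/4,4}\approx 5.167265421$, which is the third smallest real root of \[ x^9-24x^8+240x^7-1168x^6+1848x^5+7008x^4-30528x^3+7488x^2+71568x+36864=0. \] This value is attained for a unique $a=a^*\approx 0.0971331276$, namely the smallest real root of $147456a^9-546624a^8+799488a^7-601344a^6+258432a^5-66576a^4+10400a^3-960a^2+48a-1=0$.
   Context: A real rational function $\psi$ is always considered in lowest terms, as a smooth function on $\mathbb{R}$ minus its finitely many poles. It is absolutely monotonic at $x\in\mathbb{R}$ if $x$ is not a pole and $\psi^{(k)}(x)\ge 0$ for all integers $k\ge 0$. The radius of absolute monotonicity is $R(\psi)=\sup\big(\{r\in[0,\infty): \psi \text{ is absolutely monotonic at each point of } [-r,0]\}\cup\{0\}\big)\in[0,+\infty]$. $\widehat{\Pi}_{s/s,p}$ denotes the set of real rational functions $\psi(z)=P(z)/(1-az)^s$ with $P$ a real polynomial of degree at most $s$ and $a\in\mathbb{R}$, such that $\psi(z)-e^z=O(z^{p+1})$ as $z\to0$. Finally, $\widehat{R}_{s/s,p}=\sup\{R(\psi):\psi\in\widehat{\Pi}_{s/s,p}\}$. *)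

(* Defs.v *)
From Stdlib Require Import Reals Lra.
Open Scope R_scope.

Definition peval (s : nat) (c : nat -> R) (z : R) : R :=
  sum_f_R0 (fun i => c i * z ^ i) s.

(* psi(z) = P(z) / (1 - a z)^s, as a real function (meaningful where 1 - a z <> 0). *)
Definition psi (s : nat) (c : nat -> R) (a : R) (z : R) : R :=
  peval s c z / (1 - a * z) ^ s.

Definition inPi (s p : nat) (c : nat -> R) (a : R) : Prop :=
  (forall i, (s < i)%nat -> c i = 0) /\
  exists C delta, 0 < delta /\
    forall z, Rabs z < delta -> Rabs (psi s c a z - exp z) <= C * Rabs z ^ (p + 1).

(* Poles of P/(1-az)^s in lowest terms: x is a pole iff 1 - a x = 0 and
   (1 - a z)^s does not divide P (for deg P <= s, i.e. P is not k (1 - a z)^s). *)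
Definition is_pole (s : nat) (c : nat -> R) (a x : R) : Prop :=
  1 - a * x = 0 /\ ~ (exists k, forall z, peval s c z = k * (1 - a * z) ^ s).

(* Absolute monotonicity at x: x not a pole, and all derivatives of the smooth
   function (on R minus poles) are >= 0 at x.  d k is the k-th derivative. *)
Definition abs_mon_at (s : nat) (c : nat -> R) (a x : R) : Prop :=
  ~ is_pole s c a x /\
  exists d : nat -> R -> R,
    (forall y, 1 - a * y <> 0 -> d 0%nat y = psi s c a y) /\
    (forall k y, ~ is_pole s c a y -> derivable_pt_lim (d k) y (d (S k) y)) /\
    (forall k, 0 <= d k x).

(* The set whose supremum is R(psi). *)
Definition AM_set (s : nat) (c : nat -> R) (a : R) (r : R) : Prop :=
  (0 <= r /\ forall x, - r <= x <= 0 -> abs_mon_at s c a x) \/ r = 0.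

(* Union over psi in \hat\Pi_{s/s,p} of the sets above; its sup is \hat R_{s/s,p}. *)
Definition Rhat_set (s p : nat) (r : R) : Prop :=
  exists c a, inPi s p c a /\ AM_set s c a r.

Definition psi4coef (a : R) (i : nat) : R :=
  match i with
  | 0%nat => 1
  | 1%nat => 1 - 4 * a
  | 2%nat => 6 * a ^ 2 - 4 * a + 1 / 2
  | 3%nat => - 4 * a ^ 3 + 6 * a ^ 2 - 2 * a + 1 / 6
  | 4%nat => a ^ 4 - 4 * a ^ 3 + 3 * a ^ 2 - 2 * a / 3 + 1 / 24
  | _ => 0
  end.

Definition qpoly (x : R) : R :=
  x ^ 9 - 24 * x ^ 8 + 240 * x ^ 7 - 1168 * x ^ 6 + 1848 * x ^ 5 + 7008 * x ^ 4
  - 30528 * x ^ 3 + 7488 * x ^ 2 + 71568 * x + 36864.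

Definition apoly (a : R) : R :=
  147456 * a ^ 9 - 546624 * a ^ 8 + 799488 * a ^ 7 - 601344 * a ^ 6
  + 258432 * a ^ 5 - 66576 * a ^ 4 + 10400 * a ^ 3 - 960 * a ^ 2 + 48 * a - 1.

(* Main.v *)
Require Import Defs.
From Stdlib Require Import Reals Lra Psatz Lia FunctionalExtensionality.
From Coquelicot Require Import Coquelicot.
Open Scope R_scope.

Ltac fixeq := match goal with |- ?L = ?M => change (@eq R L M) end.

Lemma shift_box l h v : l <= v <= h -> exists s, v = l + s /\ 0 <= s <= h - l.
Proof. intros. exists (v - l). split; [ring|lra]. Qed.
Lemma shift_lo l v : l <= v -> exists s, v = l + s /\ 0 <= s.
Proof. intros. exists (v - l). split; [ring|lra]. Qed.
Lemma pow_box s w i : 0 <= s <= w -> 0 <= s^i <= w^i.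
Proof. intros [H1 H2]. split. apply pow_le; auto. apply pow_incr; auto. Qed.
Lemma pow_lo s i : 0 <= s -> 0 <= s^i.
Proof. intros; apply pow_le; auto. Qed.
Lemma mul_box x X y Y : 0 <= x <= X -> 0 <= y <= Y -> 0 <= x*y <= X*Y.
Proof. intros [] []. split. apply Rmult_le_pos; auto. apply Rmult_le_compat; auto. Qed.
Lemma mul_lo x y : 0 <= x -> 0 <= y -> 0 <= x*y.
Proof. intros; apply Rmult_le_pos; auto. Qed.

Lemma abs_le x b : Rabs x <= b -> -b <= x <= b.
Proof. unfold Rabs; destruct Rcase_abs; lra. Qed.
Lemma abs_lt x b : Rabs x < b -> -b < x < b.
Proof. unfold Rabs; destruct Rcase_abs; lra. Qed.
Lemma le_abs x b : -b <= x <= b -> Rabs x <= b.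
Proof. unfold Rabs; destruct Rcase_abs; lra. Qed.

Definition Bc (a : R) (j : nat) : R :=
  match j with
  | 0%nat => a^4 - 4*a^3 + 3*a^2 - 2/3*a + 1/24
  | 1%nat => 10*a^3 - 10*a^2 + 5/2*a - 1/6
  | 2%nat => -10*a^3 + 25/2*a^2 - 7/2*a + 1/4
  | 3%nat => 5*a^3 - 7*a^2 + 13/6*a - 1/6
  | _ => -a^3 + 3/2*a^2 - 1/2*a + 1/24
  end.

Fixpoint rf (j k : nat) : R :=
  match k with 0%nat => 1 | S k' => rf j k' * INR (j + k') end.

Definition Tk (k : nat) (a u : R) : R :=
  Bc a 0 * rf 0 k * u^4 + Bc a 1 * rf 1 k * u^3 + Bc a 2 * rf 2 k * u^2
  + Bc a 3 * rf 3 k * u + Bc a 4 * rf 4 k.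

Definition D (a : R) (k : nat) (y : R) : R :=
  a^k / a^4 * (Bc a 0 * rf 0 k / (1 - a*y)^k + Bc a 1 * rf 1 k / (1 - a*y)^(1+k)
   + Bc a 2 * rf 2 k / (1 - a*y)^(2+k) + Bc a 3 * rf 3 k / (1 - a*y)^(3+k)
   + Bc a 4 * rf 4 k / (1 - a*y)^(4+k)).

Lemma dinv (a y : R) (n : nat) : 1 - a*y <> 0 ->
  is_derive (fun y => / (1 - a*y)^n) y (INR n * a / (1 - a*y)^(S n)).
Proof.
intros H.
auto_derive.
- apply pow_nonzero; auto.
- destruct n.
  + simpl. field. auto.
  + simpl Init.Nat.pred. replace (1 + - (a*y)) with (1 - a*y) by ring.
    set (u := 1 - a*y) in *. simpl pow. field. split; auto. apply pow_nonzero; auto.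
Qed.

Lemma is_derive_eq (f : R -> R) x l l' : is_derive f x l -> l = l' -> is_derive f x l'.
Proof. intros H <-; exact H. Qed.

Lemma isd_plus (f g : R -> R) x l1 l2 : is_derive f x l1 -> is_derive g x l2 ->
  is_derive (fun t => f t + g t) x (l1 + l2).
Proof. intros; apply (is_derive_plus f g); auto. Qed.
Lemma isd_scal (f : R -> R) (c : R) x l : is_derive f x l ->
  is_derive (fun t => c * f t) x (c * l).
Proof. intros; apply (is_derive_scal f); auto. Qed.

Lemma D_deriv a k y : a <> 0 -> 1 - a*y <> 0 ->
  derivable_pt_lim (D a k) y (D a (S k) y).
Proof.
intros Ha Hu.
apply is_derive_Reals.
unfold D. unfold Rdiv.
eapply is_derive_eq.
{ apply isd_scal.
  apply isd_plus; [apply isd_plus; [apply isd_plus; [apply isd_plus|]|]|];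
  apply isd_scal; apply dinv; auto. }
cbn [rf].
replace (1 + S k)%nat with (S (1 + k)) by lia.
replace (2 + S k)%nat with (S (2 + k)) by lia.
replace (3 + S k)%nat with (S (3 + k)) by lia.
replace (4 + S k)%nat with (S (4 + k)) by lia.
replace (0 + k)%nat with k by lia.
change (a ^ S k) with (a * a^k).
set (u := 1 - a*y) in *.
assert (u0 : forall n, u ^ n <> 0) by (intros; apply pow_nonzero; auto).
assert (a4 : a ^ 4 <> 0) by (apply pow_nonzero; auto).
match goal with |- ?L = ?M => change (@eq R L M) end. field. repeat split; auto.
Qed.

Lemma D_T a k y : a <> 0 -> 1 - a*y <> 0 ->
  D a k y = a^k / a^4 / (1 - a*y)^(4+k) * Tk k a (1 - a*y).
Proof.
intros Ha Hu. unfold D, Tk.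
set (u := 1 - a*y) in *.
rewrite !pow_add.
field. repeat split; auto; apply pow_nonzero; auto.
Qed.

Lemma D0_psi a y : a <> 0 -> 1 - a*y <> 0 -> D a 0 y = psi 4 (psi4coef a) a y.
Proof.
intros Ha Hu. unfold D, psi, peval, psi4coef, Bc. simpl sum_f_R0. cbn [rf].
simpl INR. rewrite ?Nat.add_0_r.
match goal with |- ?L = ?M => change (@eq R L M) end.
field. split; auto.
Qed.

Lemma deriv_local_ext f g x l del : 0 < del ->
  (forall z, Rabs (z - x) < del -> f z = g z) ->
  derivable_pt_lim f x l -> derivable_pt_lim g x l.
Proof.
intros Hd Heq H eps Heps.
destruct (H eps Heps) as [d Hd'].
assert (Hm : 0 < Rmin d del) by (apply Rmin_pos; [apply (cond_pos d)|lra]).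
exists (mkposreal _ Hm). intros h Hh Hlt. simpl in Hlt.
rewrite <- (Heq (x + h)), <- (Heq x).
- apply Hd'; auto. apply Rlt_le_trans with (1 := Hlt). apply Rmin_l.
- rewrite Rminus_diag, Rabs_R0; lra.
- replace (x + h - x) with h by ring. apply Rlt_le_trans with (1 := Hlt). apply Rmin_r.
Qed.

Lemma nonpole_of c a y : 1 - a*y <> 0 -> ~ is_pole 4 c a y.
Proof. intros H [H1 _]. auto. Qed.

Lemma d_form a (Ha : a <> 0) (d : nat -> R -> R) :
  (forall y, 1 - a*y <> 0 -> d 0%nat y = psi 4 (psi4coef a) a y) ->
  (forall k y, ~ is_pole 4 (psi4coef a) a y -> derivable_pt_lim (d k) y (d (S k) y)) ->
  forall k y, 1 - a*y <> 0 -> d k y = D a k y.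
Proof.
intros H0 Hd k. induction k as [|k IH]; intros y Hy.
- rewrite H0, D0_psi; auto.
- assert (Hdel : 0 < Rabs (1 - a*y) / Rabs a).
  { apply Rdiv_lt_0_compat; apply Rabs_pos_lt; auto. }
  assert (Hloc : forall z, Rabs (z - y) < Rabs (1 - a*y) / Rabs a -> d k z = D a k z).
  { intros z Hz. apply IH.
    intro Hc.
    assert (E : 1 - a*y = a*(z - y)) by lra.
    rewrite E, Rabs_mult in Hz.
    assert (Ha' : 0 < Rabs a) by (apply Rabs_pos_lt; auto).
    unfold Rdiv in Hz. rewrite Rmult_comm, <- Rmult_assoc, Rinv_l, Rmult_1_l in Hz; lra. }
  assert (H1 := Hd k y (nonpole_of _ _ _ Hy)).
  assert (H2 : derivable_pt_lim (D a k) y (d (S k) y)).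
  { apply (deriv_local_ext (d k) _ _ _ _ Hdel Hloc H1). }
  apply (uniqueness_limite (D a k) y); auto. apply D_deriv; auto.
Qed.

Lemma not_const a : ~ (exists k, forall z, peval 4 (psi4coef a) z = k * (1 - a*z)^4).
Proof.
intros [k Hk].
assert (H0 := Hk 0). unfold peval, psi4coef in H0. simpl in H0.
assert (k = 1) by lra. subst k.
set (e2 := 6 * a ^ 2 - 4 * a + 1 / 2 - 6*a^2).
set (e3 := - 4 * a ^ 3 + 6 * a ^ 2 - 2 * a + 1 / 6 + 4*a^3).
set (e4 := a ^ 4 - 4 * a ^ 3 + 3 * a ^ 2 - 2 * a / 3 + 1 / 24 - a^4).
set (M := 1 + Rabs e2 + Rabs e3 + Rabs e4).
assert (HM : 1 <= M) by (unfold M; pose proof (Rabs_pos e2); pose proof (Rabs_pos e3); pose proof (Rabs_pos e4); lra).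
set (z := / (2 * M)).
assert (Hz : 0 < z <= 1/2).
{ unfold z. split. apply Rinv_0_lt_compat; lra.
  apply (Rmult_le_reg_l (2*M)); [lra|]. rewrite Rinv_r by lra. nra. }
assert (Hzm : z * M = 1/2) by (unfold z; field; lra).
assert (H := Hk z). unfold peval, psi4coef in H. simpl in H.
assert (E : z * (1 + e2 * z + e3 * z^2 + e4 * z^3) = 0) by (unfold e2, e3, e4; simpl; nra).
assert (B : Rabs (e2 * z + e3 * z^2 + e4 * z^3) <= 1/2).
{ assert (Hz2 : z^2 <= z) by (simpl; nra). assert (Hz3 : z^3 <= z) by (simpl; nra).
  eapply Rle_trans. apply Rabs_triang. eapply Rle_trans. apply Rplus_le_compat_r. apply Rabs_triang.
  rewrite !Rabs_mult. rewrite (Rabs_pos_eq z) by lra.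
  rewrite (Rabs_pos_eq (z^2)) by (apply pow_le; lra).
  rewrite (Rabs_pos_eq (z^3)) by (apply pow_le; lra).
  pose proof (Rabs_pos e2); pose proof (Rabs_pos e3); pose proof (Rabs_pos e4).
  assert (Rabs e3 * z^2 <= Rabs e3 * z) by (apply Rmult_le_compat_l; auto).
  assert (Rabs e4 * z^3 <= Rabs e4 * z) by (apply Rmult_le_compat_l; auto).
  unfold M in Hzm. nra. }
apply Rmult_integral in E. destruct E as [E|E]; [lra|].
apply abs_le in B. lra.
Qed.

Lemma cb (m r v : R) : m - r <= v <= m + r -> exists s, v = m + s /\ Rabs s <= r.
Proof. intros H. exists (v - m). split; [ring|]. apply le_abs. lra. Qed.
Lemma abs_pow s r i : Rabs s <= r -> Rabs (s^i) <= r^i.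
Proof. intros H. rewrite <- RPow_abs. apply pow_incr. split; auto. apply Rabs_pos. Qed.
Lemma abs_mul x X y Y : Rabs x <= X -> Rabs y <= Y -> Rabs (x*y) <= X*Y.
Proof. intros H1 H2. rewrite Rabs_mult. apply Rmult_le_compat; auto; apply Rabs_pos. Qed.
Lemma pow_even_nonneg s i : 0 <= s^(2*i).
Proof. rewrite pow_mult. apply pow_le. nra. Qed.

Lemma mvt_step (f f' : R -> R) K n : 0 <= K ->
  f 0 = 0 -> (forall c, derivable_pt_lim f c (f' c)) ->
  (forall c, Rabs c <= 1 -> Rabs (f' c) <= K * Rabs c ^ n) ->
  forall z, Rabs z <= 1 -> Rabs (f z) <= K * Rabs z ^ (S n).
Proof.
intros HK H0 Hd Hb z Hz.
assert (key : forall c, Rabs c <= Rabs z -> Rabs (f' c) * Rabs z <= K * Rabs z ^ S n).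
{ intros c Hc. assert (Hc1 : Rabs c <= 1) by lra.
  specialize (Hb c Hc1). simpl.
  assert (K * Rabs c ^ n <= K * Rabs z ^ n).
  { apply Rmult_le_compat_l; auto. apply pow_incr. split; auto. apply Rabs_pos. }
  replace (K * (Rabs z * Rabs z ^ n)) with ((K * Rabs z ^ n) * Rabs z) by ring.
  apply Rmult_le_compat_r. apply Rabs_pos. lra. }
destruct (Rtotal_order z 0) as [Hlt|[Heq|Hgt]].
- destruct (MVT_cor2 f f' z 0 Hlt (fun c _ => Hd c)) as [c [E Hc]].
  rewrite H0 in E.
  replace (f z) with (- (f' c * (0 - z))) by lra.
  rewrite Rabs_Ropp, Rabs_mult.
  replace (Rabs (0 - z)) with (Rabs z) by (rewrite Rabs_minus_sym; f_equal; ring).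
  apply key. rewrite !Rabs_left; lra.
- subst. rewrite H0, Rabs_R0. simpl. rewrite Rmult_0_l, Rmult_0_r. lra.
- destruct (MVT_cor2 f f' 0 z Hgt (fun c _ => Hd c)) as [c [E Hc]].
  rewrite H0 in E.
  replace (f z) with (f' c * (z - 0)) by lra.
  rewrite Rabs_mult. replace (z - 0) with z by ring.
  apply key. rewrite !Rabs_right; lra.
Qed.

Lemma exp_bound1 c : Rabs c <= 1 -> Rabs (exp c) <= 3 * Rabs c ^ 0.
Proof.
intros H. apply abs_le in H. rewrite Rabs_right by (left; apply exp_pos).
simpl. assert (exp c <= exp 1) by (destruct (Req_dec c 1); [subst; lra|left; apply exp_increasing; lra]).
pose proof exp_le_3. lra.
Qed.

Lemma dpl (f : R -> R) df c : is_derive f c df -> derivable_pt_lim f c df.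
Proof. intros; apply is_derive_Reals; auto. Qed.

Lemma exp_T4 z : Rabs z <= 1 ->
  Rabs (exp z - (1 + z + z^2/2 + z^3/6 + z^4/24)) <= 3 * Rabs z ^ 5.
Proof.
intros Hz.
assert (H4 : forall z, Rabs z <= 1 -> Rabs (exp z - 1) <= 3 * Rabs z ^ 1).
{ apply (mvt_step (fun z => exp z - 1) exp); try lra.
  - rewrite exp_0; ring.
  - intros c. apply dpl. auto_derive; auto. ring.
  - apply exp_bound1. }
assert (H3 : forall z, Rabs z <= 1 -> Rabs (exp z - 1 - z) <= 3 * Rabs z ^ 2).
{ apply (mvt_step (fun z => exp z - 1 - z) (fun z => exp z - 1)); try lra.
  - rewrite exp_0; ring.
  - intros c. apply dpl. auto_derive; auto. ring.
  - exact H4. }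
assert (H2 : forall z, Rabs z <= 1 -> Rabs (exp z - 1 - z - z^2/2) <= 3 * Rabs z ^ 3).
{ apply (mvt_step (fun z => exp z - 1 - z - z^2/2) (fun z => exp z - 1 - z)); try lra.
  - rewrite exp_0; field.
  - intros c. apply dpl. auto_derive; auto. field.
  - exact H3. }
assert (H1 : forall z, Rabs z <= 1 -> Rabs (exp z - 1 - z - z^2/2 - z^3/6) <= 3 * Rabs z ^ 4).
{ apply (mvt_step (fun z => exp z - 1 - z - z^2/2 - z^3/6) (fun z => exp z - 1 - z - z^2/2)); try lra.
  - rewrite exp_0; field.
  - intros c. apply dpl. auto_derive; auto. field.
  - exact H2. }
assert (H0 : forall z, Rabs z <= 1 -> Rabs (exp z - 1 - z - z^2/2 - z^3/6 - z^4/24) <= 3 * Rabs z ^ 5).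
{ apply (mvt_step (fun z => exp z - 1 - z - z^2/2 - z^3/6 - z^4/24) (fun z => exp z - 1 - z - z^2/2 - z^3/6)); try lra.
  - rewrite exp_0; field.
  - intros c. apply dpl. auto_derive; auto. field.
  - exact H1. }
replace (exp z - (1 + z + z^2/2 + z^3/6 + z^4/24)) with (exp z - 1 - z - z^2/2 - z^3/6 - z^4/24) by ring.
apply H0; auto.
Qed.

Lemma pow_le1 z n : 0 <= z <= 1 -> z^n <= 1.
Proof. intros H. induction n; simpl; [lra|]. assert (0 <= z^n) by (apply pow_le; lra). nra. Qed.

Lemma zero_small e M del : 0 < del -> (forall z, 0 < z < del -> Rabs e <= M * z) -> e = 0.
Proof.
intros Hd H.
destruct (Req_dec e 0) as [|Hne]; auto. exfalso.
assert (He : 0 < Rabs e) by (apply Rabs_pos_lt; auto).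
set (z := Rmin (del/2) (Rabs e / (2 * (Rabs M + 1)))).
assert (HM : 0 < Rabs M + 1) by (pose proof (Rabs_pos M); lra).
assert (Hz0 : 0 < z) by (apply Rmin_pos; [lra| apply Rdiv_lt_0_compat; lra]).
assert (Hz1 : z <= Rabs e / (2 * (Rabs M + 1))) by apply Rmin_r.
assert (Hz2 : z <= del/2) by apply Rmin_l.
assert (Hzd : 0 < z < del) by lra. specialize (H z Hzd).
assert (M * z <= Rabs M * z) by (apply Rmult_le_compat_r; [lra|apply RRle_abs]).
assert (Rabs M * z <= Rabs e / 2).
{ apply Rle_trans with (Rabs M * (Rabs e / (2 * (Rabs M + 1)))).
  apply Rmult_le_compat_l; [apply Rabs_pos|auto].
  apply (Rmult_le_reg_r (2 * (Rabs M + 1))); [lra|].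
  field_simplify; [|lra]. pose proof (Rabs_pos M). nra. }
lra.
Qed.

Lemma peel e (G : R -> R) K Sb n del : 0 < del <= 1 ->
  (forall z, 0 < z < del -> Rabs (G z) <= Sb) ->
  (forall z, 0 < z < del -> Rabs (e + z * G z) <= K * z^(S n)) ->
  e = 0 /\ (forall z, 0 < z < del -> Rabs (G z) <= K * z^n).
Proof.
intros Hd HG H.
assert (He : e = 0).
{ apply (zero_small e (Rabs K + Sb) del); [lra|].
  intros z Hz. specialize (H z Hz). specialize (HG z Hz).
  assert (Hzn : z^n <= 1) by (apply pow_le1; lra).
  assert (Hzn0 : 0 <= z^n) by (apply pow_le; lra).
  assert (K * z^(S n) <= Rabs K * z).
  { simpl. apply Rle_trans with (Rabs K * (z * z^n)).
    apply Rmult_le_compat_r; [nra|apply RRle_abs].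
    apply Rmult_le_compat_l; [apply Rabs_pos|nra]. }
  assert (Rabs (z * G z) <= z * Sb).
  { rewrite Rabs_mult, Rabs_right by lra. apply Rmult_le_compat_l; lra. }
  replace e with ((e + z * G z) - z * G z) by ring.
  eapply Rle_trans. apply Rabs_triang. rewrite Rabs_Ropp. lra. }
split; auto.
intros z Hz. specialize (H z Hz). rewrite He, Rplus_0_l, Rabs_mult, Rabs_right in H by lra.
simpl in H. apply (Rmult_le_reg_l z); [lra|]. lra.
Qed.

Lemma rep c a : inPi 4 4 c a -> forall i, c i = psi4coef a i.
Proof.
intros [Hc [C [del [Hdel Hb]]]].
set (e0 := c 0%nat - 1).
set (e1 := c 1%nat - (1 - 4*a)).
set (e2 := c 2%nat - (6 * a ^ 2 - 4 * a + 1 / 2)).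
set (e3 := c 3%nat - (- 4 * a ^ 3 + 6 * a ^ 2 - 2 * a + 1 / 6)).
set (e4 := c 4%nat - (a ^ 4 - 4 * a ^ 3 + 3 * a ^ 2 - 2 * a / 3 + 1 / 24)).
set (r0 := -a/6 + a^2 - 2*a^3 + a^4).
set (r1 := a^2/4 - 2/3*a^3 + a^4/2).
set (r2 := -a^3/6 + a^4/6).
set (r3 := a^4/24).
set (MR := Rabs r0 + Rabs r1 + Rabs r2 + Rabs r3).
set (K := 6 * Rabs C + 18 + MR).
set (del1 := Rmin del (/ (2 * (Rabs a + 1)))).
assert (Ha1 : 0 < Rabs a + 1) by (pose proof (Rabs_pos a); lra).
assert (Hdel1 : 0 < del1) by (apply Rmin_pos; auto; apply Rinv_0_lt_compat; lra).
assert (Hdel1b : del1 <= / (2 * (Rabs a + 1))) by apply Rmin_r.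
assert (Hdel1c : del1 <= del) by apply Rmin_l.
assert (Hinv : / (2 * (Rabs a + 1)) <= 1/2).
{ apply (Rmult_le_reg_l (2 * (Rabs a + 1))); [lra|]. rewrite Rinv_r by lra.
  pose proof (Rabs_pos a). lra. }
assert (KEY : forall z, 0 < z < del1 ->
  Rabs (e0 + z * (e1 + z * (e2 + z * (e3 + z * e4)))) <= K * z^5).
{ intros z Hz.
  assert (Hza : Rabs (a*z) <= 1/2).
  { rewrite Rabs_mult, (Rabs_right z) by lra.
    apply Rle_trans with (Rabs a * / (2 * (Rabs a + 1))).
    apply Rmult_le_compat_l; [apply Rabs_pos|lra].
    apply (Rmult_le_reg_l (2 * (Rabs a + 1))); [lra|].
    field_simplify; [|lra]. pose proof (Rabs_pos a). lra. }
  apply abs_le in Hza.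
  set (u := 1 - a*z).
  assert (Hu : 1/2 <= u <= 3/2) by (unfold u; lra).
  assert (Hu2 : 0 <= u*u <= 9/4) by (split; nra).
  assert (Hu4 : 0 <= u^4 <= 6).
  { replace (u^4) with ((u*u)*(u*u)) by ring. split; nra. }
  assert (Hz1 : Rabs z <= 1) by (rewrite Rabs_right; lra).
  assert (HB1 : Rabs (psi 4 c a z - exp z) <= C * Rabs z ^ (4 + 1)).
  { apply Hb. rewrite Rabs_right; lra. }
  rewrite (Rabs_right z) in HB1 by lra. simpl Nat.add in HB1.
  assert (HB2 := exp_T4 z Hz1). rewrite (Rabs_right z) in HB2 by lra.
  assert (HB3 : Rabs (r0 + r1 * z + r2 * z^2 + r3 * z^3) <= MR).
  { unfold MR.
    assert (z^2 <= 1) by (apply pow_le1; lra). assert (z^3 <= 1) by (apply pow_le1; lra).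
    assert (0 <= z^2) by (apply pow_le; lra). assert (0 <= z^3) by (apply pow_le; lra).
    eapply Rle_trans. apply Rabs_triang. eapply Rle_trans. apply Rplus_le_compat_r. apply Rabs_triang.
    eapply Rle_trans. apply Rplus_le_compat_r. apply Rplus_le_compat_r. apply Rabs_triang.
    rewrite !Rabs_mult, (Rabs_right z), (Rabs_right (z^2)), (Rabs_right (z^3)) by lra.
    pose proof (Rabs_pos r1); pose proof (Rabs_pos r2); pose proof (Rabs_pos r3).
    assert (Rabs r1 * z <= Rabs r1) by nra.
    assert (Rabs r2 * z^2 <= Rabs r2) by nra.
    assert (Rabs r3 * z^3 <= Rabs r3) by nra. lra. }
  assert (Hun : u <> 0) by lra.
  assert (EQ : e0 + z * (e1 + z * (e2 + z * (e3 + z * e4))) =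
     u^4 * (psi 4 c a z - exp z) + u^4 * (exp z - (1 + z + z^2/2 + z^3/6 + z^4/24))
     + z^5 * (r0 + r1 * z + r2 * z^2 + r3 * z^3)).
  { unfold psi, peval. simpl sum_f_R0. unfold u, e0, e1, e2, e3, e4, r0, r1, r2, r3.
    fixeq. field. auto. }
  rewrite EQ.
  assert (Hz5 : 0 <= z^5) by (apply pow_le; lra).
  eapply Rle_trans. apply Rabs_triang. eapply Rle_trans. apply Rplus_le_compat_r. apply Rabs_triang.
  rewrite !Rabs_mult, (Rabs_right (u^4)), (Rabs_right (z^5)) by lra.
  assert (u^4 * Rabs (psi 4 c a z - exp z) <= 6 * (Rabs C * z^5)).
  { apply Rmult_le_compat; try lra; try apply Rabs_pos.
    eapply Rle_trans. exact HB1. apply Rmult_le_compat_r; [lra|apply RRle_abs]. }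
  assert (u^4 * Rabs (exp z - (1 + z + z^2/2 + z^3/6 + z^4/24)) <= 6 * (3 * z^5)).
  { apply Rmult_le_compat; try lra; try apply Rabs_pos. }
  assert (z^5 * Rabs (r0 + r1 * z + r2 * z^2 + r3 * z^3) <= z^5 * MR).
  { apply Rmult_le_compat_l; lra. }
  unfold K. lra. }
assert (Hd1 : 0 < del1 <= 1) by lra.
assert (HS : forall p q r s, exists S, forall z, 0 < z < del1 -> Rabs (p + z * (q + z * (r + z * s))) <= S).
{ intros p q r s. exists (Rabs p + Rabs q + Rabs r + Rabs s). intros z Hz.
  assert (Hz' : Rabs z <= 1) by (rewrite Rabs_right; lra).
  pose proof (Rabs_pos p); pose proof (Rabs_pos q); pose proof (Rabs_pos r); pose proof (Rabs_pos s).
  eapply Rle_trans. apply Rabs_triang. rewrite Rabs_mult.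
  assert (Rabs (q + z * (r + z * s)) <= Rabs q + Rabs r + Rabs s).
  { eapply Rle_trans. apply Rabs_triang. rewrite Rabs_mult.
    assert (Rabs (r + z * s) <= Rabs r + Rabs s).
    { eapply Rle_trans. apply Rabs_triang. rewrite Rabs_mult. nra. }
    pose proof (Rabs_pos (r + z*s)). nra. }
  pose proof (Rabs_pos (q + z * (r + z * s))). nra. }
destruct (HS e1 e2 e3 e4) as [S1 HS1].
destruct (peel e0 _ K S1 4 del1 Hd1 HS1 KEY) as [E0 K1].
destruct (HS e2 e3 e4 0) as [S2 HS2].
assert (HS2' : forall z, 0 < z < del1 -> Rabs (e2 + z * (e3 + z * e4)) <= S2).
{ intros z Hz. specialize (HS2 z Hz). replace (e2 + z * (e3 + z * (e4 + z * 0))) with (e2 + z * (e3 + z * e4)) in HS2 by ring. auto. }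
destruct (peel e1 _ K S2 3 del1 Hd1 HS2' K1) as [E1 K2].
destruct (HS e3 e4 0 0) as [S3 HS3].
assert (HS3' : forall z, 0 < z < del1 -> Rabs (e3 + z * e4) <= S3).
{ intros z Hz. specialize (HS3 z Hz). replace (e3 + z * (e4 + z * (0 + z * 0))) with (e3 + z * e4) in HS3 by ring. auto. }
destruct (peel e2 _ K S3 2 del1 Hd1 HS3' K2) as [E2 K3].
assert (HS4 : forall z, 0 < z < del1 -> Rabs ((fun _ => e4) z) <= Rabs e4) by (intros; simpl; lra).
destruct (peel e3 (fun _ => e4) K (Rabs e4) 1 del1 Hd1 HS4 K3) as [E3 K4].
assert (E4 : e4 = 0).
{ apply (zero_small e4 K del1); auto. intros z Hz. specialize (K4 z Hz). simpl in K4. lra. }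
intros i. destruct i as [|[|[|[|[|i]]]]]; simpl; try lra.
- unfold e0 in E0; lra.
- unfold e1 in E1; lra.
- unfold e2 in E2; lra.
- unfold e3 in E3; lra.
- unfold e4 in E4; lra.
- apply Hc. lia.
Qed.

Lemma inPi_psi4 a : inPi 4 4 (psi4coef a) a.
Proof.
split.
{ intros i Hi. destruct i as [|[|[|[|[|i]]]]]; try lia; reflexivity. }
set (r0 := -a/6 + a^2 - 2*a^3 + a^4).
set (r1 := a^2/4 - 2/3*a^3 + a^4/2).
set (r2 := -a^3/6 + a^4/6).
set (r3 := a^4/24).
set (MR := Rabs r0 + Rabs r1 + Rabs r2 + Rabs r3).
exists (16 * MR + 3), (Rmin 1 (/ (2 * (Rabs a + 1)))).
assert (Ha1 : 0 < Rabs a + 1) by (pose proof (Rabs_pos a); lra).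
split. { apply Rmin_pos; [lra|apply Rinv_0_lt_compat; lra]. }
intros z Hz.
assert (Hz1 : Rabs z <= 1) by (left; eapply Rlt_le_trans; [exact Hz|apply Rmin_l]).
assert (Hz2 : Rabs z <= / (2 * (Rabs a + 1))) by (left; eapply Rlt_le_trans; [exact Hz|apply Rmin_r]).
assert (Hza : Rabs (a*z) <= 1/2).
{ rewrite Rabs_mult.
  apply Rle_trans with (Rabs a * / (2 * (Rabs a + 1))).
  apply Rmult_le_compat_l; [apply Rabs_pos|lra].
  apply (Rmult_le_reg_l (2 * (Rabs a + 1))); [lra|].
  field_simplify; [|lra]. pose proof (Rabs_pos a). lra. }
apply abs_le in Hza.
set (u := 1 - a*z).
assert (Hu : 1/2 <= u <= 3/2) by (unfold u; lra).
assert (Hun : u <> 0) by lra.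
assert (Hu4 : 1/16 <= u^4).
{ replace (u^4) with ((u*u)*(u*u)) by ring. assert (1/4 <= u*u) by nra. nra. }
assert (Hiu : 0 < / u^4 <= 16).
{ split. apply Rinv_0_lt_compat; lra.
  apply (Rmult_le_reg_l (u^4)); [lra|]. rewrite Rinv_r by lra. lra. }
assert (HB2 := exp_T4 z Hz1).
assert (HB3 : Rabs (r0 + r1 * z + r2 * z^2 + r3 * z^3) <= MR).
{ unfold MR.
  assert (H2 : Rabs (z^2) <= 1) by (rewrite <- RPow_abs; apply pow_le1; split; [apply Rabs_pos|auto]).
  assert (H3 : Rabs (z^3) <= 1) by (rewrite <- RPow_abs; apply pow_le1; split; [apply Rabs_pos|auto]).
  eapply Rle_trans. apply Rabs_triang. eapply Rle_trans. apply Rplus_le_compat_r. apply Rabs_triang.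
  eapply Rle_trans. apply Rplus_le_compat_r. apply Rplus_le_compat_r. apply Rabs_triang.
  rewrite !Rabs_mult.
  pose proof (Rabs_pos r1); pose proof (Rabs_pos r2); pose proof (Rabs_pos r3).
  pose proof (Rabs_pos z); pose proof (Rabs_pos (z^2)); pose proof (Rabs_pos (z^3)).
  assert (Rabs r1 * Rabs z <= Rabs r1) by nra.
  assert (Rabs r2 * Rabs (z^2) <= Rabs r2) by nra.
  assert (Rabs r3 * Rabs (z^3) <= Rabs r3) by nra. lra. }
assert (EQ : psi 4 (psi4coef a) a z - exp z =
   - (z^5 * (r0 + r1 * z + r2 * z^2 + r3 * z^3)) * / u^4
   - (exp z - (1 + z + z^2/2 + z^3/6 + z^4/24))).
{ unfold psi, peval, psi4coef. simpl sum_f_R0. unfold u, r0, r1, r2, r3.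
  fixeq. field. auto. }
rewrite EQ.
simpl Nat.add.
unfold Rminus at 1. eapply Rle_trans. apply Rabs_triang. rewrite Rabs_Ropp.
rewrite Rabs_mult, Rabs_Ropp, Rabs_mult, (Rabs_right (/ u^4)) by lra.
rewrite <- RPow_abs.
assert (0 <= Rabs z ^ 5) by (apply pow_le, Rabs_pos).
assert (Rabs z ^ 5 * Rabs (r0 + r1 * z + r2 * z ^ 2 + r3 * z ^ 3) * / u ^ 4 <= Rabs z ^ 5 * MR * 16).
{ apply Rmult_le_compat; try lra. apply Rmult_le_pos; auto; apply Rabs_pos.
  apply Rmult_le_compat_l; auto. }
nra.
Qed.
Definition AL : R := (971331276414471/10000000000000000).
Definition AH : R := (121416409551809/1250000000000000).
Definition XL : R := (1291816355319/250000000000).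
Definition XH : R := (5167265421279/1000000000000).

Definition Xp (a : R) : R := (24043/2) + (-466186)*a + (7243302)*a^2 + (-58314060)*a^3 + (264060900)*a^4 + (-682450128)*a^5 + (973779696)*a^6 + (-697370976)*a^7 + (193978368)*a^8.

Definition g0p (a x : R) : R :=
  (1) + (-1)*x + (1/2)*x^2 + (-1/6)*x^3 + (1/24)*x^4 + (4)*a*x + (-4)*a*x^2 + (2)*a*x^3 + (-2/3)*a*x^4 + (6)*a^2*x^2 + (-6)*a^2*x^3 + (3)*a^2*x^4 + (4)*a^3*x^3 + (-4)*a^3*x^4 + (1)*a^4*x^4.

Definition g1p (a x : R) : R :=
  (1) + (-1)*x + (1/2)*x^2 + (-1/6)*x^3 + (5)*a*x + (-5)*a*x^2 + (5/2)*a*x^3 + (10)*a^2*x^2 + (-10)*a^2*x^3 + (10)*a^3*x^3.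

Definition W0 (a : R) : R := (-334048966024975625/384) + (856916650279020039/8)*a + (-297252629244527984455/48)*a^2 + (894605370055860533335/4)*a^3 + (-90611552380345425545771/16)*a^4 + (106988744191610620244552)*a^5 + (-1566786976332473171128581)*a^6 + (18244224540334135278097866)*a^7 + (-343868685236839263577180401/2)*a^8 + (1327943643820391353029518016)*a^9 + (-8481379800213676106988191964)*a^10 + (45075192692566685227759097712)*a^11 + (-200158986708560485328947683156)*a^12 + (744355693508577963949719364608)*a^13 + (-2319871045433551355397237176448)*a^14 + (6054606809867969192514467182464)*a^15 + (-13202632166708312511781045876992)*a^16 + (23961567756285361631082238419456)*a^17 + (-35991870424098677537729841252864)*a^18 + (44397328377589353186316867786752)*a^19 + (-44506816721846218600222299540480)*a^20 + (35750955538177607103163339161600)*a^21 + (-22571370024741692123257655599104)*a^22 + (10899558566310157006171379761152)*a^23 + (-3866306905081736882427140849664)*a^24 + (944175179729187091459501719552)*a^25 + (-140890006120727798286372569088)*a^26 + (9601757999040428008953348096)*a^27.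

Definition W1 (a : R) : R := (13894969389397/48) + (-386043866594743/16)*a + (3664305109132855/4)*a^2 + (-42051965914160569/2)*a^3 + (326550366725897727)*a^4 + (-7280780465127914085/2)*a^5 + (30158846410076645340)*a^6 + (-189656352621163880244)*a^7 + (916827774425698967460)*a^8 + (-3428938027000897285248)*a^9 + (9935027763417809389296)*a^10 + (-22226530747040864997408)*a^11 + (38078480813968951694784)*a^12 + (-49250690391568717332864)*a^13 + (47022197057192857641984)*a^14 + (-31982771884470617175552)*a^15 + (14602905436141018229760)*a^16 + (-3998666714894720040960)*a^17 + (494991173399315742720)*a^18.

Definition W2 (a : R) : R := (-2679357893651153398199173781851448258843/512) + (201683058004233497914271078807335758552969/128)*a + (-29589336471535144789488228172277646160601019/128)*a^2 + (1409649449509072877068935912181183787946432183/64)*a^3 + (-98093562309902958789730168658983614004961881347/64)*a^4 + (1328891301175411010012518963936539287507658527463/16)*a^5 + (-58388910512848423421056439257772573178451332037721/16)*a^6 + (1069368597562604374725230191006712271489570232822677/8)*a^7 + (-33320461389353344552527830387257046316894692560959879/8)*a^8 + (224203134258393627237146692332703613632874745014831433/2)*a^9 + (-5275223869201470276443760004362276266767701419044607835/2)*a^10 + (54775317829542625373924991601549441699408571038325898615)*a^11 + (-1011891476485773359954564004111747482543033544768834821175)*a^12 + (16736894421201701638420666096551523007531832320769141387708)*a^13 + (-249212322060926550756824670312338073045659467579445548189956)*a^14 + (3355963254511254275696340876232036745230758819434776282132776)*a^15 + (-41032068489659843168105526427810955533385229703186093771059720)*a^16 + (457037177058366827989633822857022864030220774930782672113122400)*a^17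 + (-4651174087925228832542299061108474623973005645263065341039585824)*a^18 + (43355713638716810268417780106619754069997273623811342634932097856)*a^19 + (-370975871194630815762536958568921486815375237736899027183785701440)*a^20 + (2919282921375697098968589327892459421825354114754416755207084682496)*a^21 + (-21161282147737772434007613287177147850997243165256979183291720776448)*a^22 + (141497351403381264851125189712947905356856387030439952802993820687872)*a^23 + (-873800025032412903451258884047015974726514764881934480265923926710784)*a^24 + (4988502020285150310236540789758625115085304997850071944851166507882496)*a^25 + (-26350361098091019402558823677502882628675747354512321635999464136345600)*a^26 + (128871809969012345532379541454189682487497980763420991714175148994285568)*a^27 + (-583872553793768926688235434319028477209573112542400718584770262644609024)*a^28 + (2451555068534892735773050617973746159868278141206246733818666920664580096)*a^29 + (-9542167850792086995294119505165676522781859012063922703845073404389015552)*a^30 + (34434862504493790246250279333096584970485301429058834295986107509295251456)*a^31 + (-115214416435506540483779372593149287416173100515647101017541759522460663808)*a^32 + (357381192133071121610709111171416824083771015317911123954554811806400905216)*a^33 + (-1027496445421126629061672441020563855397038799415384550523312102387257180160)*a^34 + (2737208042933199608146622447275976399464825018786201958499182428172813598720)*a^35 + (-6753297106615184313683251122247828092750900542997841943339507723658212671488)*a^36 + (15422369924115912564332290650263860890713697284232885520032492976244237795328)*a^37 + (-32576369049269384320059247211443640343839749243536556542870295260962752561152)*a^38 + (63591459895463135914134156341899626491772376697610278106427181109870172569600)*a^39 + (-114604765310647210259359617498629082422086768096049845635494207744892764946432)*a^40 + (190461478520240538276036251694349974716339121674046316505952145637097766649856)*a^41 + (-291492958168273804309502065819479539597664830518996433310567957382230894968832)*a^42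 + (410200420322655307740687921895384993226267342127387331240230192182801027039232)*a^43 + (-529842330519650427562858780324219570598514641162038979188141936760548642258944)*a^44 + (626913116107888706200316706714202446636636687951980777432468091927639713906688)*a^45 + (-677926462828296676697461307835974063192264598913765045268913908981208629379072)*a^46 + (668242551133649063313315876058600465841060740989309719809205867226359440343040)*a^47 + (-598627763271908019235703949087915620607513845658792548131551254045996598951936)*a^48 + (485677386198537916066326707666585102789729338332901020684622324150271515557888)*a^49 + (-355440478514909085590082983988154834638630865888431486402918898793907153272832)*a^50 + (233552435065534874996385751468207118705189160826436477815850889895834149715968)*a^51 + (-137029254547318519377717982244579129803149323223691797039981295008635261288448)*a^52 + (71320782234397402300724295865856175667246673319839352375548018095672604491776)*a^53 + (-32672072271320558919381674790915058205104212021613433780692543197197453230080)*a^54 + (13047205768421210561917072975373287782268693704567053501592492785400790646784)*a^55 + (-4487766969541063500458630979803527330475145907181604258899003022205991780352)*a^56 + (1309368699255310333636622906663640720584525777140261178608081590546182701056)*a^57 + (-317573062172604957009367606302460768326531721481951824385658450095030403072)*a^58 + (62276854029423128553782276820301648846242663571619257403976433522308022272)*a^59 + (-9483477449589034932879858789598553786935075405506277740570766124922175488)*a^60 + (1051774914980970295900855808847819620911116148287854004162262095347318784)*a^61 + (-75548227405376507815208026098900914927186351937388834144246057352036352)*a^62 + (2637043304553708658728033975628830407569838570811330136932816443670528)*a^63.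

Lemma g0_id a : g0p a (Xp a) = apoly a * W0 a.
Proof. unfold g0p, apoly, Xp, W0. fixeq. field. Qed.

Lemma g1_id a : g1p a (Xp a) = apoly a * W1 a.
Proof. unfold g1p, apoly, Xp, W1. fixeq. field. Qed.

Lemma q_id a : qpoly (Xp a) = apoly a * W2 a.
Proof. unfold qpoly, apoly, Xp, W2. fixeq. field. Qed.

Lemma XpL (a : R) : (971331276414471/10000000000000000) <= a <= (121416409551809/1250000000000000) -> 0 < (Xp a - (1291816355319/250000000000)).
Proof.
intros Ha.
assert (Ca : (1942662552828943/20000000000000000) - (1/20000000000000000) <= a <= (1942662552828943/20000000000000000) + (1/20000000000000000)) by lra.
destruct (cb _ _ _ Ca) as [s_a [Ea Ba]].
assert (EQ : Xp a - (1291816355319/250000000000) = (4609806166278097986380053822360329902522515733549495895054509452667425818040109186421982143089831943951203155367679/3125000000000000000000000000000000000000000000000000000000000000000000000000000000000000000000000000000000000000000000000000000) + (22845383646775370853738451751118840226434617489352389208975448542832494873552575700359680891729861050290433695953/19531250000000000000000000000000000000000000000000000000000000000000000000000000000000000000000000000000000000)*s_a + (239871052793863269992998246748630372537983213801430419729925348761875369122559621504799533530809497/1953125000000000000000000000000000000000000000000000000000000000000000000000000000000000000000)*s_a^2 + (-211746739216898249701923212188099562733361489471563808318579318962889391976592338921/48828125000000000000000000000000000000000000000000000000000000000000000000000)*s_a^3 + (96231592097353596719588246435322429811307993215013835561983107869753/1953125000000000000000000000000000000000000000000000000000000)*s_a^4 + (-29681249240268483192629725365367767155031580089256329/122070312500000000000000000000000000000000000)*s_a^5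 + (6724356548101072056759143738824513497/12207031250000000000000000000)*s_a^6 + (-166820425833438458703/305175781250)*s_a^7 + (193978368)*s_a^8) by (subst a; unfold Xp; fixeq; field).
rewrite EQ.
pose proof (abs_le _ _ (abs_pow _ _ 1 Ba)) as M1.
pose proof (abs_le _ _ (abs_pow _ _ 2 Ba)) as M2.
pose proof (abs_le _ _ (abs_pow _ _ 3 Ba)) as M3.
pose proof (abs_le _ _ (abs_pow _ _ 4 Ba)) as M4.
pose proof (abs_le _ _ (abs_pow _ _ 5 Ba)) as M5.
pose proof (abs_le _ _ (abs_pow _ _ 6 Ba)) as M6.
pose proof (abs_le _ _ (abs_pow _ _ 7 Ba)) as M7.
pose proof (abs_le _ _ (abs_pow _ _ 8 Ba)) as M8.
lra.
Qed.

Lemma XpH (a : R) : (971331276414471/10000000000000000) <= a <= (121416409551809/1250000000000000) -> 0 < ((5167265421279/1000000000000) - Xp a).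
Proof.
intros Ha.
assert (Ca : (1942662552828943/20000000000000000) - (1/20000000000000000) <= a <= (1942662552828943/20000000000000000) + (1/20000000000000000)) by lra.
destruct (cb _ _ _ Ca) as [s_a [Ea Ba]].
assert (EQ : (5167265421279/1000000000000) - Xp a = (4765193833721902013619946177639670097477484266450504104945490547332574181959890813578017856910168056048796844632321/3125000000000000000000000000000000000000000000000000000000000000000000000000000000000000000000000000000000000000000000000000000) + (-22845383646775370853738451751118840226434617489352389208975448542832494873552575700359680891729861050290433695953/19531250000000000000000000000000000000000000000000000000000000000000000000000000000000000000000000000000000000)*s_a + (-239871052793863269992998246748630372537983213801430419729925348761875369122559621504799533530809497/1953125000000000000000000000000000000000000000000000000000000000000000000000000000000000000000)*s_a^2 + (211746739216898249701923212188099562733361489471563808318579318962889391976592338921/48828125000000000000000000000000000000000000000000000000000000000000000000000)*s_a^3 + (-96231592097353596719588246435322429811307993215013835561983107869753/1953125000000000000000000000000000000000000000000000000000000)*s_a^4 + (29681249240268483192629725365367767155031580089256329/122070312500000000000000000000000000000000000)*s_a^5 + (-6724356548101072056759143738824513497/12207031250000000000000000000)*s_a^6 + (166820425833438458703/305175781250)*s_a^7 + (-193978368)*s_a^8) by (subst a; unfold Xp; fixeq; field).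
rewrite EQ.
pose proof (abs_le _ _ (abs_pow _ _ 1 Ba)) as M1.
pose proof (abs_le _ _ (abs_pow _ _ 2 Ba)) as M2.
pose proof (abs_le _ _ (abs_pow _ _ 3 Ba)) as M3.
pose proof (abs_le _ _ (abs_pow _ _ 4 Ba)) as M4.
pose proof (abs_le _ _ (abs_pow _ _ 5 Ba)) as M5.
pose proof (abs_le _ _ (abs_pow _ _ 6 Ba)) as M6.
pose proof (abs_le _ _ (abs_pow _ _ 7 Ba)) as M7.
pose proof (abs_le _ _ (abs_pow _ _ 8 Ba)) as M8.
lra.
Qed.

Lemma apoly_AL :  apoly (971331276414471/10000000000000000) < 0.
Proof. assert (E : apoly (971331276414471/10000000000000000) = (-231648351204893861154589357585763860738734655537523830654413746159923582850553939486932225426966982466082844727227688321/61035156250000000000000000000000000000000000000000000000000000000000000000000000000000000000000000000000000000000000000000000000000000000000)) by (unfold apoly; fixeq; field). rewrite E. lra. Qed.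

Lemma apoly_AH : 0 < apoly (121416409551809/1250000000000000) .
Proof. assert (E : apoly (121416409551809/1250000000000000) = (59730600952101008724392208174501814848576535070158885260217737100604986438811602929251002897160157751667455196201/454747350886464118957519531250000000000000000000000000000000000000000000000000000000000000000000000000000000000000000000000000000000)) by (unfold apoly; fixeq; field). rewrite E. lra. Qed.

Lemma apoly_left (t : R) : (0) <= t -> 0 < - (apoly ((971/10000) - t)).
Proof.
intros Ht.
destruct (shift_lo _ _ Ht) as [s_t [Et Bt]].
assert (EQ : apoly ((971/10000) - t) = (-43814766039535872696507261/976562500000000000000000000000000) + (-16569754261571194924166307/12207031250000000000000000000)*s_t + (-235157578805586095976339/2441406250000000000000000)*s_t^2 + (-15983872176053343672727/122070312500000000000)*s_t^3 + (-184401842673319568103/48828125000000000)*s_t^4 + (-48843068587069683/1220703125000)*s_t^5 + (-46606110242211/244140625)*s_t^6 + (-165984530976/390625)*s_t^7 + (-261101376/625)*s_t^8 + (-147456)*s_t^9) by (subst t; unfold apoly; fixeq; field).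
rewrite EQ.
pose proof (pow_lo _ 1 Bt) as M1.
pose proof (pow_lo _ 2 Bt) as M2.
pose proof (pow_lo _ 3 Bt) as M3.
pose proof (pow_lo _ 4 Bt) as M4.
pose proof (pow_lo _ 5 Bt) as M5.
pose proof (pow_lo _ 6 Bt) as M6.
pose proof (pow_lo _ 7 Bt) as M7.
pose proof (pow_lo _ 8 Bt) as M8.
pose proof (pow_lo _ 9 Bt) as M9.
lra.
Qed.

Definition dap (r : R) : R :=
  (48) + (-1920)*r + (31200)*r^2 + (-266304)*r^3 + (1292160)*r^4 + (-3608064)*r^5 + (5596416)*r^6 + (-4372992)*r^7 + (1327104)*r^8.

Definition dqp (r : R) : R :=
  (71568) + (14976)*r + (-91584)*r^2 + (28032)*r^3 + (9240)*r^4 + (-7008)*r^5 + (1680)*r^6 + (-192)*r^7 + (9)*r^8.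

Lemma dap_d r : derivable_pt_lim apoly r (dap r).
Proof. apply dpl. unfold apoly, dap. auto_derive; auto. fixeq; ring. Qed.

Lemma dqp_d r : derivable_pt_lim qpoly r (dqp r).
Proof. apply dpl. unfold qpoly, dqp. auto_derive; auto. fixeq; ring. Qed.

Lemma dap_pos (r : R) : (971/10000) <= r <= (243/2500) -> 0 < (dap r).
Proof.
intros Hr.
assert (Cr : (1943/20000) - (1/20000) <= r <= (1943/20000) + (1/20000)) by lra.
destruct (cb _ _ _ Cr) as [s_r [Er Br]].
assert (EQ : dap r = (1053704981845068665402163603/781250000000000000000000000000) + (-11990025062108544499137939/78125000000000000000000000)*s_r + (1525612157197618508784357/3906250000000000000000)*s_r^2 + (-2942620183080189144927/195312500000000000)*s_r^3 + (390185493199791009/1953125000000)*s_r^4 + (-558837699182073/488281250)*s_r^5 + (1161434825712/390625)*s_r^6 + (-2088479232/625)*s_r^7 + (1327104)*s_r^8) by (subst r; unfold dap; fixeq; field).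
rewrite EQ.
pose proof (abs_le _ _ (abs_pow _ _ 1 Br)) as M1.
pose proof (abs_le _ _ (abs_pow _ _ 2 Br)) as M2.
pose proof (abs_le _ _ (abs_pow _ _ 3 Br)) as M3.
pose proof (abs_le _ _ (abs_pow _ _ 4 Br)) as M4.
pose proof (abs_le _ _ (abs_pow _ _ 5 Br)) as M5.
pose proof (abs_le _ _ (abs_pow _ _ 6 Br)) as M6.
pose proof (abs_le _ _ (abs_pow _ _ 7 Br)) as M7.
pose proof (abs_le _ _ (abs_pow _ _ 8 Br)) as M8.
lra.
Qed.

Definition R1L : R := (-2504789749249/1000000000000).
Definition R1H : R := (-2504789749247/1000000000000).
Definition R2L : R := (4740907716121/1000000000000).
Definition R2H : R := (4740907716123/1000000000000).

Lemma q_R1L :  qpoly (-2504789749249/1000000000000) < 0.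
Proof. assert (E : qpoly (-2504789749249/1000000000000) = (-242710741748098945907120875850843219124388513762640131927074737966889454865665674968300085958837493249/1000000000000000000000000000000000000000000000000000000000000000000000000000000000000000000000000000000000000)) by (unfold qpoly; fixeq; field). rewrite E. lra. Qed.

Lemma q_R1H : 0 < qpoly (-2504789749247/1000000000000) .
Proof. assert (E : qpoly (-2504789749247/1000000000000) = (999715295272361091021144327160231035208813684424643685989487759113062011847632171702102250707508306433/1000000000000000000000000000000000000000000000000000000000000000000000000000000000000000000000000000000000000)) by (unfold qpoly; fixeq; field). rewrite E. lra. Qed.

Lemma q_R2L : 0 < qpoly (4740907716121/1000000000000) .
Proof. assert (E : qpoly (4740907716121/1000000000000) = (9632932100336506102791515694489124688827740305056436871953378094563608946728111153706755482196715481/1000000000000000000000000000000000000000000000000000000000000000000000000000000000000000000000000000000000000)) by (unfold qpoly; fixeq; field). rewrite E. lra. Qed.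

Lemma q_R2H :  qpoly (4740907716123/1000000000000) < 0.
Proof. assert (E : qpoly (4740907716123/1000000000000) = (-6941727071209949280497609114801501335333714307060373256965405076283573903827204740442380420563501637/1000000000000000000000000000000000000000000000000000000000000000000000000000000000000000000000000000000000000)) by (unfold qpoly; fixeq; field). rewrite E. lra. Qed.

Lemma q_left (t : R) : (0) <= t -> 0 < - (qpoly ((-2504789749249/1000000000000) - t)).
Proof.
intros Ht.
destruct (shift_lo _ _ Ht) as [s_t [Et Bt]].
assert (EQ : qpoly ((-2504789749249/1000000000000) - t) = (-242710741748098945907120875850843219124388513762640131927074737966889454865665674968300085958837493249/1000000000000000000000000000000000000000000000000000000000000000000000000000000000000000000000000000000000000) + (-621213018512559018742907913540784364628205824876907045138706603918339617833370106447443986615842304009/1000000000000000000000000000000000000000000000000000000000000000000000000000000000000000000000000)*s_t + (-291125034847347107577447225820859040695541922545372022406002912975882549434799465226015241/250000000000000000000000000000000000000000000000000000000000000000000000000000000000)*s_t^2 + (-216551585771439867362470753757635500491025965999708422403592581524928700032021/250000000000000000000000000000000000000000000000000000000000000000000000)*s_t^3 + (-168307228311937160705268791369599853386752813859415542224354138687/500000000000000000000000000000000000000000000000000000000000)*s_t^4 + (-38551509882211734058626778715926426905876607352064063/500000000000000000000000000000000000000000000000)*s_t^5 + (-2728053517650774463213407768127359390229/250000000000000000000000000000000000)*s_t^6 + (-236695653155437814664576009/250000000000000000000000)*s_t^7 + (-46543107743241/1000000000000)*s_t^8 + (-1)*s_t^9) by (subst t; unfold qpoly; fixeq; field).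
rewrite EQ.
pose proof (pow_lo _ 1 Bt) as M1.
pose proof (pow_lo _ 2 Bt) as M2.
pose proof (pow_lo _ 3 Bt) as M3.
pose proof (pow_lo _ 4 Bt) as M4.
pose proof (pow_lo _ 5 Bt) as M5.
pose proof (pow_lo _ 6 Bt) as M6.
pose proof (pow_lo _ 7 Bt) as M7.
pose proof (pow_lo _ 8 Bt) as M8.
pose proof (pow_lo _ 9 Bt) as M9.
lra.
Qed.

Lemma q_mid_l_l_l_l (r : R) : (-249/100) <= r <= (-1631/800) -> 0 < (qpoly r).
Proof.
intros Hr.
assert (Cr : (-3623/1600) - (361/1600) <= r <= (-3623/1600) + (361/1600)) by lra.
destruct (cb _ _ _ Cr) as [s_r [Er Br]].
assert (EQ : qpoly r = (6391837410347549149352140898083737/68719476736000000000000000000) + (8332740119059567087033318288329/42949672960000000000000000)*s_r + (-4337294264660108321814177423/6710886400000000000000)*s_r^2 + (2450056293459120155135269/4194304000000000000)*s_r^3 + (-1326144661134928287609/5242880000000000)*s_r^4 + (204720272538450783/3276800000000)*s_r^5 + (-9618460347907/1024000000)*s_r^6 + (549981561/640000)*s_r^7 + (-71007/1600)*s_r^8 + (1)*s_r^9) by (subst r; unfold qpoly; fixeq; field).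
rewrite EQ.
pose proof (abs_le _ _ (abs_pow _ _ 1 Br)) as M1.
pose proof (abs_le _ _ (abs_pow _ _ 2 Br)) as M2.
pose proof (abs_le _ _ (abs_pow _ _ 3 Br)) as M3.
pose proof (abs_le _ _ (abs_pow _ _ 4 Br)) as M4.
pose proof (abs_le _ _ (abs_pow _ _ 5 Br)) as M5.
pose proof (abs_le _ _ (abs_pow _ _ 6 Br)) as M6.
pose proof (abs_le _ _ (abs_pow _ _ 7 Br)) as M7.
pose proof (abs_le _ _ (abs_pow _ _ 8 Br)) as M8.
pose proof (abs_le _ _ (abs_pow _ _ 9 Br)) as M9.
lra.
Qed.

Lemma q_mid_l_l_l_r (r : R) : (-1631/800) <= r <= (-127/80) -> 0 < (qpoly r).
Proof.
intros Hr.
assert (Cr : (-2901/1600) - (361/1600) <= r <= (-2901/1600) + (361/1600)) by lra.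
destruct (cb _ _ _ Cr) as [s_r [Er Br]].
assert (EQ : qpoly r = (6407083742183719129102480435895499/68719476736000000000000000000) + (-4873172391889515135311007203991/42949672960000000000000000)*s_r + (-756125386557228978327661509/6710886400000000000000)*s_r^2 + (1001327685540789101253021/4194304000000000000)*s_r^3 + (-723696289043812957563/5242880000000000)*s_r^4 + (132696016754226063/3276800000000)*s_r^5 + (-7090053521521/1024000000)*s_r^6 + (452139009/640000)*s_r^7 + (-64509/1600)*s_r^8 + (1)*s_r^9) by (subst r; unfold qpoly; fixeq; field).
rewrite EQ.
pose proof (abs_le _ _ (abs_pow _ _ 1 Br)) as M1.
pose proof (abs_le _ _ (abs_pow _ _ 2 Br)) as M2.
pose proof (abs_le _ _ (abs_pow _ _ 3 Br)) as M3.
pose proof (abs_le _ _ (abs_pow _ _ 4 Br)) as M4.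
pose proof (abs_le _ _ (abs_pow _ _ 5 Br)) as M5.
pose proof (abs_le _ _ (abs_pow _ _ 6 Br)) as M6.
pose proof (abs_le _ _ (abs_pow _ _ 7 Br)) as M7.
pose proof (abs_le _ _ (abs_pow _ _ 8 Br)) as M8.
pose proof (abs_le _ _ (abs_pow _ _ 9 Br)) as M9.
lra.
Qed.

Lemma q_mid_l_l_l (r : R) : (-249/100) <= r <= (-127/80) -> 0 < (qpoly r).
Proof.
intros Hr.
destruct (Rle_lt_dec r (-1631/800)).
- apply q_mid_l_l_l_l; lra.
- apply q_mid_l_l_l_r; lra.
Qed.

Lemma q_mid_l_l_r_l (r : R) : (-127/80) <= r <= (-909/800) -> 0 < (qpoly r).
Proof.
intros Hr.
assert (Cr : (-2179/1600) - (361/1600) <= r <= (-2179/1600) + (361/1600)) by lra.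
destruct (cb _ _ _ Cr) as [s_r [Er Br]].
assert (EQ : qpoly r = (2474417189238952372678906740916381/68719476736000000000000000000) + (-4826902169092118145918772395351/42949672960000000000000000)*s_r + (503608885719714565832621469/6710886400000000000000)*s_r^2 + (252928534116224665793741/4194304000000000000)*s_r^3 + (-344230868335848098637/5242880000000000)*s_r^4 + (80504197651166703/3276800000000)*s_r^5 + (-5032431828919/1024000000)*s_r^6 + (363679569/640000)*s_r^7 + (-58011/1600)*s_r^8 + (1)*s_r^9) by (subst r; unfold qpoly; fixeq; field).
rewrite EQ.
pose proof (abs_le _ _ (abs_pow _ _ 1 Br)) as M1.
pose proof (abs_le _ _ (abs_pow _ _ 2 Br)) as M2.
pose proof (abs_le _ _ (abs_pow _ _ 3 Br)) as M3.
pose proof (abs_le _ _ (abs_pow _ _ 4 Br)) as M4.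
pose proof (abs_le _ _ (abs_pow _ _ 5 Br)) as M5.
pose proof (abs_le _ _ (abs_pow _ _ 6 Br)) as M6.
pose proof (abs_le _ _ (abs_pow _ _ 7 Br)) as M7.
pose proof (abs_le _ _ (abs_pow _ _ 8 Br)) as M8.
pose proof (abs_le _ _ (abs_pow _ _ 9 Br)) as M9.
lra.
Qed.

Lemma q_mid_l_l_r_r_l (r : R) : (-909/800) <= r <= (-1457/1600) -> 0 < (qpoly r).
Proof.
intros Hr.
assert (Cr : (-131/128) - (361/3200) <= r <= (-131/128) + (361/3200)) by lra.
destruct (cb _ _ _ Cr) as [s_r [Er Br]].
assert (EQ : qpoly r = (75132600006328074752669/9223372036854775808) + (-3571380015756956429655/72057594037927936)*s_r + (14039389259841407901/140737488355328)*s_r^2 + (-4395953682956083/1099511627776)*s_r^3 + (-546124174292301/17179869184)*s_r^4 + (2131140627951/134217728)*s_r^5 + (-1930056119/524288)*s_r^6 + (1942353/4096)*s_r^7 + (-4251/128)*s_r^8 + (1)*s_r^9) by (subst r; unfold qpoly; fixeq; field).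
rewrite EQ.
pose proof (abs_le _ _ (abs_pow _ _ 1 Br)) as M1.
pose proof (abs_le _ _ (abs_pow _ _ 2 Br)) as M2.
pose proof (abs_le _ _ (abs_pow _ _ 3 Br)) as M3.
pose proof (abs_le _ _ (abs_pow _ _ 4 Br)) as M4.
pose proof (abs_le _ _ (abs_pow _ _ 5 Br)) as M5.
pose proof (abs_le _ _ (abs_pow _ _ 6 Br)) as M6.
pose proof (abs_le _ _ (abs_pow _ _ 7 Br)) as M7.
pose proof (abs_le _ _ (abs_pow _ _ 8 Br)) as M8.
pose proof (abs_le _ _ (abs_pow _ _ 9 Br)) as M9.
lra.
Qed.

Lemma q_mid_l_l_r_r_r (r : R) : (-1457/1600) <= r <= (-137/200) -> 0 < (qpoly r).
Proof.
intros Hr.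
assert (Cr : (-2553/3200) - (361/3200) <= r <= (-2553/3200) + (361/3200)) by lra.
destruct (cb _ _ _ Cr) as [s_r [Er Br]].
assert (EQ : qpoly r = (67625095125322622168129492195850567/35184372088832000000000000000000) + (-70652708965445798928438711984951/10995116277760000000000000000)*s_r + (76473168779930852099222523567/858993459200000000000000)*s_r^2 + (-6820396937655828401297691/268435456000000000000)*s_r^3 + (-2768630946679046531559/167772160000000000)*s_r^4 + (596671210148411103/52428800000000)*s_r^5 + (-24401611812317/8192000000)*s_r^6 + (1065201081/2560000)*s_r^7 + (-99777/3200)*s_r^8 + (1)*s_r^9) by (subst r; unfold qpoly; fixeq; field).
rewrite EQ.
pose proof (abs_le _ _ (abs_pow _ _ 1 Br)) as M1.
pose proof (abs_le _ _ (abs_pow _ _ 2 Br)) as M2.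
pose proof (abs_le _ _ (abs_pow _ _ 3 Br)) as M3.
pose proof (abs_le _ _ (abs_pow _ _ 4 Br)) as M4.
pose proof (abs_le _ _ (abs_pow _ _ 5 Br)) as M5.
pose proof (abs_le _ _ (abs_pow _ _ 6 Br)) as M6.
pose proof (abs_le _ _ (abs_pow _ _ 7 Br)) as M7.
pose proof (abs_le _ _ (abs_pow _ _ 8 Br)) as M8.
pose proof (abs_le _ _ (abs_pow _ _ 9 Br)) as M9.
lra.
Qed.

Lemma q_mid_l_l_r_r (r : R) : (-909/800) <= r <= (-137/200) -> 0 < (qpoly r).
Proof.
intros Hr.
destruct (Rle_lt_dec r (-1457/1600)).
- apply q_mid_l_l_r_r_l; lra.
- apply q_mid_l_l_r_r_r; lra.
Qed.

Lemma q_mid_l_l_r (r : R) : (-127/80) <= r <= (-137/200) -> 0 < (qpoly r).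
Proof.
intros Hr.
destruct (Rle_lt_dec r (-909/800)).
- apply q_mid_l_l_r_l; lra.
- apply q_mid_l_l_r_r; lra.
Qed.

Lemma q_mid_l_l (r : R) : (-249/100) <= r <= (-137/200) -> 0 < (qpoly r).
Proof.
intros Hr.
destruct (Rle_lt_dec r (-127/80)).
- apply q_mid_l_l_l; lra.
- apply q_mid_l_l_r; lra.
Qed.

Lemma q_mid_l_r_l_l_l (r : R) : (-137/200) <= r <= (-147/320) -> 0 < (qpoly r).
Proof.
intros Hr.
assert (Cr : (-1831/3200) - (361/3200) <= r <= (-1831/3200) + (361/3200)) by lra.
destruct (cb _ _ _ Cr) as [s_r [Er Br]].
assert (EQ : qpoly r = (164518955932914799645306117750066329/35184372088832000000000000000000) + (321566398214434502941122608640969/10995116277760000000000000000)*s_r + (58398125259724006426203302001/858993459200000000000000)*s_r^2 + (-9436943676307395638420699/268435456000000000000)*s_r^3 + (-969126109749039291513/167772160000000000)*s_r^4 + (407542722912425823/52428800000000)*s_r^5 + (-19374266916611/8192000000)*s_r^6 + (925814649/2560000)*s_r^7 + (-93279/3200)*s_r^8 + (1)*s_r^9) by (subst r; unfold qpoly; fixeq; field).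
rewrite EQ.
pose proof (abs_le _ _ (abs_pow _ _ 1 Br)) as M1.
pose proof (abs_le _ _ (abs_pow _ _ 2 Br)) as M2.
pose proof (abs_le _ _ (abs_pow _ _ 3 Br)) as M3.
pose proof (abs_le _ _ (abs_pow _ _ 4 Br)) as M4.
pose proof (abs_le _ _ (abs_pow _ _ 5 Br)) as M5.
pose proof (abs_le _ _ (abs_pow _ _ 6 Br)) as M6.
pose proof (abs_le _ _ (abs_pow _ _ 7 Br)) as M7.
pose proof (abs_le _ _ (abs_pow _ _ 8 Br)) as M8.
pose proof (abs_le _ _ (abs_pow _ _ 9 Br)) as M9.
lra.
Qed.

Lemma q_mid_l_r_l_l_r (r : R) : (-147/320) <= r <= (-187/800) -> 0 < (qpoly r).
Proof.
intros Hr.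
assert (Cr : (-1109/3200) - (361/3200) <= r <= (-1109/3200) + (361/3200)) by lra.
destruct (cb _ _ _ Cr) as [s_r [Er Br]].
assert (EQ : qpoly r = (503873524614448177585599557136868811/35184372088832000000000000000000) + (597943873639122044943982861718889/10995116277760000000000000000)*s_r + (37133815985047075559947160379/858993459200000000000000)*s_r^2 + (-9911418990631409076413539/268435456000000000000)*s_r^3 + (222634690909319425413/167772160000000000)*s_r^4 + (258987913072633743/52428800000000)*s_r^5 + (-15027669924209/8192000000)*s_r^6 + (795811329/2560000)*s_r^7 + (-86781/3200)*s_r^8 + (1)*s_r^9) by (subst r; unfold qpoly; fixeq; field).
rewrite EQ.
pose proof (abs_le _ _ (abs_pow _ _ 1 Br)) as M1.
pose proof (abs_le _ _ (abs_pow _ _ 2 Br)) as M2.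
pose proof (abs_le _ _ (abs_pow _ _ 3 Br)) as M3.
pose proof (abs_le _ _ (abs_pow _ _ 4 Br)) as M4.
pose proof (abs_le _ _ (abs_pow _ _ 5 Br)) as M5.
pose proof (abs_le _ _ (abs_pow _ _ 6 Br)) as M6.
pose proof (abs_le _ _ (abs_pow _ _ 7 Br)) as M7.
pose proof (abs_le _ _ (abs_pow _ _ 8 Br)) as M8.
pose proof (abs_le _ _ (abs_pow _ _ 9 Br)) as M9.
lra.
Qed.

Lemma q_mid_l_r_l_l (r : R) : (-137/200) <= r <= (-187/800) -> 0 < (qpoly r).
Proof.
intros Hr.
destruct (Rle_lt_dec r (-147/320)).
- apply q_mid_l_r_l_l_l; lra.
- apply q_mid_l_r_l_l_r; lra.
Qed.

Lemma q_mid_l_r_l_r (r : R) : (-187/800) <= r <= (87/400) -> 0 < (qpoly r).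
Proof.
intros Hr.
assert (Cr : (-13/1600) - (361/1600) <= r <= (-13/1600) + (361/1600)) by lra.
destruct (cb _ _ _ Cr) as [s_r [Er Br]].
assert (EQ : qpoly r = (2493350198966432968723498539014227/68719476736000000000000000000) + (3068335761507527385912857198889/42949672960000000000000000)*s_r + (55263383363854786008204147/6710886400000000000000)*s_r^2 + (-128993837563842275520211/4194304000000000000)*s_r^3 + (36342406281206624541/5242880000000000)*s_r^4 + (6243200008813743/3276800000000)*s_r^5 + (-1210055073337/1024000000)*s_r^6 + (154599921/640000)*s_r^7 + (-38517/1600)*s_r^8 + (1)*s_r^9) by (subst r; unfold qpoly; fixeq; field).
rewrite EQ.
pose proof (abs_le _ _ (abs_pow _ _ 1 Br)) as M1.
pose proof (abs_le _ _ (abs_pow _ _ 2 Br)) as M2.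
pose proof (abs_le _ _ (abs_pow _ _ 3 Br)) as M3.
pose proof (abs_le _ _ (abs_pow _ _ 4 Br)) as M4.
pose proof (abs_le _ _ (abs_pow _ _ 5 Br)) as M5.
pose proof (abs_le _ _ (abs_pow _ _ 6 Br)) as M6.
pose proof (abs_le _ _ (abs_pow _ _ 7 Br)) as M7.
pose proof (abs_le _ _ (abs_pow _ _ 8 Br)) as M8.
pose proof (abs_le _ _ (abs_pow _ _ 9 Br)) as M9.
lra.
Qed.

Lemma q_mid_l_r_l (r : R) : (-137/200) <= r <= (87/400) -> 0 < (qpoly r).
Proof.
intros Hr.
destruct (Rle_lt_dec r (-187/800)).
- apply q_mid_l_r_l_l; lra.
- apply q_mid_l_r_l_r; lra.
Qed.

Lemma q_mid_l_r_r (r : R) : (87/400) <= r <= (28/25) -> 0 < (qpoly r).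
Proof.
intros Hr.
assert (Cr : (107/160) - (361/800) <= r <= (107/160) + (361/800)) by lra.
destruct (cb _ _ _ Cr) as [s_r [Er Br]].
assert (EQ : qpoly r = (5532010288999677646902667/68719476736000000000) + (21499822357470833151849/429496729600000000)*s_r + (-21686088037488358533/671088640000000)*s_r^2 + (-37730220840395491/4194304000000)*s_r^3 + (395573714335941/52428800000)*s_r^4 + (-315013168497/327680000)*s_r^5 + (-327591217/1024000)*s_r^6 + (817281/6400)*s_r^7 + (-2877/160)*s_r^8 + (1)*s_r^9) by (subst r; unfold qpoly; fixeq; field).
rewrite EQ.
pose proof (abs_le _ _ (abs_pow _ _ 1 Br)) as M1.
pose proof (abs_le _ _ (abs_pow _ _ 2 Br)) as M2.
pose proof (abs_le _ _ (abs_pow _ _ 3 Br)) as M3.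
pose proof (abs_le _ _ (abs_pow _ _ 4 Br)) as M4.
pose proof (abs_le _ _ (abs_pow _ _ 5 Br)) as M5.
pose proof (abs_le _ _ (abs_pow _ _ 6 Br)) as M6.
pose proof (abs_le _ _ (abs_pow _ _ 7 Br)) as M7.
pose proof (abs_le _ _ (abs_pow _ _ 8 Br)) as M8.
pose proof (abs_le _ _ (abs_pow _ _ 9 Br)) as M9.
lra.
Qed.

Lemma q_mid_l_r (r : R) : (-137/200) <= r <= (28/25) -> 0 < (qpoly r).
Proof.
intros Hr.
destruct (Rle_lt_dec r (87/400)).
- apply q_mid_l_r_l; lra.
- apply q_mid_l_r_r; lra.
Qed.

Lemma q_mid_l (r : R) : (-249/100) <= r <= (28/25) -> 0 < (qpoly r).
Proof.
intros Hr.
destruct (Rle_lt_dec r (-137/200)).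
- apply q_mid_l_l; lra.
- apply q_mid_l_r; lra.
Qed.

Lemma q_mid_r_l (r : R) : (28/25) <= r <= (117/40) -> 0 < (qpoly r).
Proof.
intros Hr.
assert (Cr : (809/400) - (361/400) <= r <= (809/400) + (361/400)) by lra.
destruct (cb _ _ _ Cr) as [s_r [Er Br]].
assert (EQ : qpoly r = (22703132001756297574899290089/262144000000000000000000) + (-21287915147956075829584311/655360000000000000000)*s_r + (-6741234921336245162079/409600000000000000)*s_r^2 + (9542321759307113861/1024000000000000)*s_r^3 + (-1650501667403913/5120000000000)*s_r^4 + (-9219120575457/12800000000)*s_r^5 + (2814654509/16000000)*s_r^6 + (-42471/40000)*s_r^7 + (-2319/400)*s_r^8 + (1)*s_r^9) by (subst r; unfold qpoly; fixeq; field).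
rewrite EQ.
pose proof (abs_le _ _ (abs_pow _ _ 1 Br)) as M1.
pose proof (abs_le _ _ (abs_pow _ _ 2 Br)) as M2.
pose proof (abs_le _ _ (abs_pow _ _ 3 Br)) as M3.
pose proof (abs_le _ _ (abs_pow _ _ 4 Br)) as M4.
pose proof (abs_le _ _ (abs_pow _ _ 5 Br)) as M5.
pose proof (abs_le _ _ (abs_pow _ _ 6 Br)) as M6.
pose proof (abs_le _ _ (abs_pow _ _ 7 Br)) as M7.
pose proof (abs_le _ _ (abs_pow _ _ 8 Br)) as M8.
pose proof (abs_le _ _ (abs_pow _ _ 9 Br)) as M9.
lra.
Qed.

Lemma q_mid_r_r_l (r : R) : (117/40) <= r <= (1531/400) -> 0 < (qpoly r).
Proof.
intros Hr.
assert (Cr : (2701/800) - (361/800) <= r <= (2701/800) + (361/800)) by lra.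
destruct (cb _ _ _ Cr) as [s_r [Er Br]].
assert (EQ : qpoly r = (4329287626216250201799893325101/134217728000000000000000000) + (-6146410561417768021238719191/167772160000000000000000)*s_r + (421304714000488851965709/52428800000000000000)*s_r^2 + (132279058007971621421/65536000000000000)*s_r^3 + (-203811423786721437/163840000000000)*s_r^4 + (58468190002863/204800000000)*s_r^5 + (9825345721/128000000)*s_r^6 + (340209/160000)*s_r^7 + (5109/800)*s_r^8 + (1)*s_r^9) by (subst r; unfold qpoly; fixeq; field).
rewrite EQ.
pose proof (abs_le _ _ (abs_pow _ _ 1 Br)) as M1.
pose proof (abs_le _ _ (abs_pow _ _ 2 Br)) as M2.
pose proof (abs_le _ _ (abs_pow _ _ 3 Br)) as M3.
pose proof (abs_le _ _ (abs_pow _ _ 4 Br)) as M4.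
pose proof (abs_le _ _ (abs_pow _ _ 5 Br)) as M5.
pose proof (abs_le _ _ (abs_pow _ _ 6 Br)) as M6.
pose proof (abs_le _ _ (abs_pow _ _ 7 Br)) as M7.
pose proof (abs_le _ _ (abs_pow _ _ 8 Br)) as M8.
pose proof (abs_le _ _ (abs_pow _ _ 9 Br)) as M9.
lra.
Qed.

Lemma q_mid_r_r_r_l (r : R) : (1531/400) <= r <= (3423/800) -> 0 < (qpoly r).
Proof.
intros Hr.
assert (Cr : (1297/320) - (361/1600) <= r <= (1297/320) + (361/1600)) by lra.
destruct (cb _ _ _ Cr) as [s_r [Er Br]].
assert (EQ : qpoly r = (406483454172729307153691537/35184372088832000000000) + (-2655943295339880516650871/109951162777600000000)*s_r + (847630371163682896377/85899345920000000)*s_r^2 + (136629459557889269/268435456000000)*s_r^3 + (645225575921391/1677721600000)*s_r^4 + (3958618729983/5242880000)*s_r^5 + (1595890693/8192000)*s_r^6 + (1361961/25600)*s_r^7 + (3993/320)*s_r^8 + (1)*s_r^9) by (subst r; unfold qpoly; fixeq; field).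
rewrite EQ.
pose proof (abs_le _ _ (abs_pow _ _ 1 Br)) as M1.
pose proof (abs_le _ _ (abs_pow _ _ 2 Br)) as M2.
pose proof (abs_le _ _ (abs_pow _ _ 3 Br)) as M3.
pose proof (abs_le _ _ (abs_pow _ _ 4 Br)) as M4.
pose proof (abs_le _ _ (abs_pow _ _ 5 Br)) as M5.
pose proof (abs_le _ _ (abs_pow _ _ 6 Br)) as M6.
pose proof (abs_le _ _ (abs_pow _ _ 7 Br)) as M7.
pose proof (abs_le _ _ (abs_pow _ _ 8 Br)) as M8.
pose proof (abs_le _ _ (abs_pow _ _ 9 Br)) as M9.
lra.
Qed.

Lemma q_mid_r_r_r_r_l (r : R) : (3423/800) <= r <= (7207/1600) -> 0 < (qpoly r).
Proof.
intros Hr.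
assert (Cr : (14053/3200) - (361/3200) <= r <= (14053/3200) + (361/3200)) by lra.
destruct (cb _ _ _ Cr) as [s_r [Er Br]].
assert (EQ : qpoly r = (159612864691782909656788987078763333/35184372088832000000000000000000) + (-188968581106158316276872402454551/10995116277760000000000000000)*s_r + (9436324885916803439817086133/858993459200000000000000)*s_r^2 + (556503946193138647162109/268435456000000000000)*s_r^3 + (349162376965554598059/167772160000000000)*s_r^4 + (68542429758055503/52428800000000)*s_r^5 + (2982902546017/8192000000)*s_r^6 + (233240481/2560000)*s_r^7 + (49677/3200)*s_r^8 + (1)*s_r^9) by (subst r; unfold qpoly; fixeq; field).
rewrite EQ.
pose proof (abs_le _ _ (abs_pow _ _ 1 Br)) as M1.
pose proof (abs_le _ _ (abs_pow _ _ 2 Br)) as M2.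
pose proof (abs_le _ _ (abs_pow _ _ 3 Br)) as M3.
pose proof (abs_le _ _ (abs_pow _ _ 4 Br)) as M4.
pose proof (abs_le _ _ (abs_pow _ _ 5 Br)) as M5.
pose proof (abs_le _ _ (abs_pow _ _ 6 Br)) as M6.
pose proof (abs_le _ _ (abs_pow _ _ 7 Br)) as M7.
pose proof (abs_le _ _ (abs_pow _ _ 8 Br)) as M8.
pose proof (abs_le _ _ (abs_pow _ _ 9 Br)) as M9.
lra.
Qed.

Lemma q_mid_r_r_r_r_r_l (r : R) : (7207/1600) <= r <= (591/128) -> 0 < (qpoly r).
Proof.
intros Hr.
assert (Cr : (29189/6400) - (361/6400) <= r <= (29189/6400) + (361/6400)) by lra.
destruct (cb _ _ _ Cr) as [s_r [Er Br]].
assert (EQ : qpoly r = (35212453826165540237366306980193777509/18014398509481984000000000000000000) + (-37280336524230253524515116118395671/2814749767106560000000000000000)*s_r + (1370369512004647051246606323861/109951162777600000000000000)*s_r^2 + (66902074765428386909633981/17179869184000000000000)*s_r^3 + (18039212943700957355787/5368709120000000000)*s_r^4 + (1456384600359096783/838860800000000)*s_r^5 + (31778398224449/65536000000)*s_r^6 + (1158718689/10240000)*s_r^7 + (109101/6400)*s_r^8 + (1)*s_r^9) by (subst r; unfold qpoly; fixeq; field).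
rewrite EQ.
pose proof (abs_le _ _ (abs_pow _ _ 1 Br)) as M1.
pose proof (abs_le _ _ (abs_pow _ _ 2 Br)) as M2.
pose proof (abs_le _ _ (abs_pow _ _ 3 Br)) as M3.
pose proof (abs_le _ _ (abs_pow _ _ 4 Br)) as M4.
pose proof (abs_le _ _ (abs_pow _ _ 5 Br)) as M5.
pose proof (abs_le _ _ (abs_pow _ _ 6 Br)) as M6.
pose proof (abs_le _ _ (abs_pow _ _ 7 Br)) as M7.
pose proof (abs_le _ _ (abs_pow _ _ 8 Br)) as M8.
pose proof (abs_le _ _ (abs_pow _ _ 9 Br)) as M9.
lra.
Qed.

Lemma q_mid_r_r_r_r_r_r (r : R) : (591/128) <= r <= (473/100) -> 0 < (qpoly r).
Proof.
intros Hr.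
assert (Cr : (29911/6400) - (361/6400) <= r <= (29911/6400) + (361/6400)) by lra.
destruct (cb _ _ _ Cr) as [s_r [Er Br]].
assert (EQ : qpoly r = (11264570403756920885883417545477143191/18014398509481984000000000000000000) + (-28888155671302404488096674444486071/2814749767106560000000000000000)*s_r + (1546365154664915307249994563039/109951162777600000000000000)*s_r^2 + (96997178025404643965019781/17179869184000000000000)*s_r^3 + (23825305711977126088713/5368709120000000000)*s_r^4 + (1758248402152996383/838860800000000)*s_r^5 + (38040574426451/65536000000)*s_r^6 + (1320952089/10240000)*s_r^7 + (115599/6400)*s_r^8 + (1)*s_r^9) by (subst r; unfold qpoly; fixeq; field).
rewrite EQ.
pose proof (abs_le _ _ (abs_pow _ _ 1 Br)) as M1.
pose proof (abs_le _ _ (abs_pow _ _ 2 Br)) as M2.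
pose proof (abs_le _ _ (abs_pow _ _ 3 Br)) as M3.
pose proof (abs_le _ _ (abs_pow _ _ 4 Br)) as M4.
pose proof (abs_le _ _ (abs_pow _ _ 5 Br)) as M5.
pose proof (abs_le _ _ (abs_pow _ _ 6 Br)) as M6.
pose proof (abs_le _ _ (abs_pow _ _ 7 Br)) as M7.
pose proof (abs_le _ _ (abs_pow _ _ 8 Br)) as M8.
pose proof (abs_le _ _ (abs_pow _ _ 9 Br)) as M9.
lra.
Qed.

Lemma q_mid_r_r_r_r_r (r : R) : (7207/1600) <= r <= (473/100) -> 0 < (qpoly r).
Proof.
intros Hr.
destruct (Rle_lt_dec r (591/128)).
- apply q_mid_r_r_r_r_r_l; lra.
- apply q_mid_r_r_r_r_r_r; lra.
Qed.

Lemma q_mid_r_r_r_r (r : R) : (3423/800) <= r <= (473/100) -> 0 < (qpoly r).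
Proof.
intros Hr.
destruct (Rle_lt_dec r (7207/1600)).
- apply q_mid_r_r_r_r_l; lra.
- apply q_mid_r_r_r_r_r; lra.
Qed.

Lemma q_mid_r_r_r (r : R) : (1531/400) <= r <= (473/100) -> 0 < (qpoly r).
Proof.
intros Hr.
destruct (Rle_lt_dec r (3423/800)).
- apply q_mid_r_r_r_l; lra.
- apply q_mid_r_r_r_r; lra.
Qed.

Lemma q_mid_r_r (r : R) : (117/40) <= r <= (473/100) -> 0 < (qpoly r).
Proof.
intros Hr.
destruct (Rle_lt_dec r (1531/400)).
- apply q_mid_r_r_l; lra.
- apply q_mid_r_r_r; lra.
Qed.

Lemma q_mid_r (r : R) : (28/25) <= r <= (473/100) -> 0 < (qpoly r).
Proof.
intros Hr.
destruct (Rle_lt_dec r (117/40)).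
- apply q_mid_r_l; lra.
- apply q_mid_r_r; lra.
Qed.

Lemma q_mid (r : R) : (-249/100) <= r <= (473/100) -> 0 < (qpoly r).
Proof.
intros Hr.
destruct (Rle_lt_dec r (28/25)).
- apply q_mid_l; lra.
- apply q_mid_r; lra.
Qed.

Lemma q_right_l (r : R) : (19/4) <= r <= (991/200) -> 0 < - (qpoly r).
Proof.
intros Hr.
assert (Cr : (1941/400) - (41/400) <= r <= (1941/400) + (41/400)) by lra.
destruct (cb _ _ _ Cr) as [s_r [Er Br]].
assert (EQ : qpoly r = (-189632944549115899561558539/262144000000000000000000) + (-2998682036994500327797911/655360000000000000000)*s_r + (7403981351003985927429/409600000000000000)*s_r^2 + (9793486344705644061/1024000000000000)*s_r^3 + (33887218607903163/5120000000000)*s_r^4 + (35989816652943/12800000000)*s_r^5 + (12138769841/16000000)*s_r^6 + (6240129/40000)*s_r^7 + (7869/400)*s_r^8 + (1)*s_r^9) by (subst r; unfold qpoly; fixeq; field).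
rewrite EQ.
pose proof (abs_le _ _ (abs_pow _ _ 1 Br)) as M1.
pose proof (abs_le _ _ (abs_pow _ _ 2 Br)) as M2.
pose proof (abs_le _ _ (abs_pow _ _ 3 Br)) as M3.
pose proof (abs_le _ _ (abs_pow _ _ 4 Br)) as M4.
pose proof (abs_le _ _ (abs_pow _ _ 5 Br)) as M5.
pose proof (abs_le _ _ (abs_pow _ _ 6 Br)) as M6.
pose proof (abs_le _ _ (abs_pow _ _ 7 Br)) as M7.
pose proof (abs_le _ _ (abs_pow _ _ 8 Br)) as M8.
pose proof (abs_le _ _ (abs_pow _ _ 9 Br)) as M9.
lra.
Qed.

Lemma q_right_r (r : R) : (991/200) <= r <= (129/25) -> 0 < - (qpoly r).
Proof.
intros Hr.
assert (Cr : (2023/400) - (41/400) <= r <= (2023/400) + (41/400)) by lra.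
destruct (cb _ _ _ Cr) as [s_r [Er Br]].
assert (EQ : qpoly r = (-211441642736655100225378137/262144000000000000000000) + (2815427741281611875305929/655360000000000000000)*s_r + (10604705232169095302223/409600000000000000)*s_r^2 + (16705115774034690469/1024000000000000)*s_r^3 + (51345204286743609/5120000000000)*s_r^4 + (49820960908383/12800000000)*s_r^5 + (16102560707/16000000)*s_r^6 + (7591161/40000)*s_r^7 + (8607/400)*s_r^8 + (1)*s_r^9) by (subst r; unfold qpoly; fixeq; field).
rewrite EQ.
pose proof (abs_le _ _ (abs_pow _ _ 1 Br)) as M1.
pose proof (abs_le _ _ (abs_pow _ _ 2 Br)) as M2.
pose proof (abs_le _ _ (abs_pow _ _ 3 Br)) as M3.
pose proof (abs_le _ _ (abs_pow _ _ 4 Br)) as M4.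
pose proof (abs_le _ _ (abs_pow _ _ 5 Br)) as M5.
pose proof (abs_le _ _ (abs_pow _ _ 6 Br)) as M6.
pose proof (abs_le _ _ (abs_pow _ _ 7 Br)) as M7.
pose proof (abs_le _ _ (abs_pow _ _ 8 Br)) as M8.
pose proof (abs_le _ _ (abs_pow _ _ 9 Br)) as M9.
lra.
Qed.

Lemma q_right (r : R) : (19/4) <= r <= (129/25) -> 0 < - (qpoly r).
Proof.
intros Hr.
destruct (Rle_lt_dec r (991/200)).
- apply q_right_l; lra.
- apply q_right_r; lra.
Qed.

Lemma dq_1 (r : R) : (-2504789749249/1000000000000) <= r <= (-249/100) -> 0 < (dqp r).
Proof.
intros Hr.
assert (Cr : (-4994789749249/2000000000000) - (14789749249/2000000000000) <= r <= (-4994789749249/2000000000000) + (14789749249/2000000000000)) by lra.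
destruct (cb _ _ _ Cr) as [s_r [Er Br]].
assert (EQ : dqp r = (154657769841781574493390914591171102952110367547010384391315075323610369730662354097104659395335842304009/256000000000000000000000000000000000000000000000000000000000000000000000000000000000000000000000000) + (-36652601954031953205024327836626484549665351763049247812846076724184415638930164335226015241/16000000000000000000000000000000000000000000000000000000000000000000000000000000000000)*s_r + (41101993500645538406108496577731327886965347612432474908326794795550566100096063/16000000000000000000000000000000000000000000000000000000000000000000000000)*s_r^2 + (-5340360932679121394939739608928659267810962960420133966574354138687/4000000000000000000000000000000000000000000000000000000000000)*s_r^3 + (612959513885657996064319328334325225973247127352064063/1600000000000000000000000000000000000000000000000)*s_r^4 + (-65179655582465881425767159318992078170687/1000000000000000000000000000000000000)*s_r^5 + (6608217963765109962652032063/1000000000000000000000000)*s_r^6 + (-92953107743241/250000000000)*s_r^7 + (9)*s_r^8) by (subst r; unfold dqp; fixeq; field).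
rewrite EQ.
pose proof (abs_le _ _ (abs_pow _ _ 1 Br)) as M1.
pose proof (abs_le _ _ (abs_pow _ _ 2 Br)) as M2.
pose proof (abs_le _ _ (abs_pow _ _ 3 Br)) as M3.
pose proof (abs_le _ _ (abs_pow _ _ 4 Br)) as M4.
pose proof (abs_le _ _ (abs_pow _ _ 5 Br)) as M5.
pose proof (abs_le _ _ (abs_pow _ _ 6 Br)) as M6.
pose proof (abs_le _ _ (abs_pow _ _ 7 Br)) as M7.
pose proof (abs_le _ _ (abs_pow _ _ 8 Br)) as M8.
lra.
Qed.

Lemma dq_2 (r : R) : (473/100) <= r <= (19/4) -> 0 < - (dqp r).
Proof.
intros Hr.
assert (Cr : (237/50) - (1/100) <= r <= (237/50) + (1/100)) by lra.
destruct (cb _ _ _ Cr) as [s_r [Er Br]].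
assert (EQ : dqp r = (-324810380417116311/39062500000000) + (2990746788221997/97656250000)*s_r + (81101830630167/3906250000)*s_r^2 + (808357350291/39062500)*s_r^3 + (7310982543/625000)*s_r^4 + (60250539/15625)*s_r^5 + (607047/625)*s_r^6 + (3732/25)*s_r^7 + (9)*s_r^8) by (subst r; unfold dqp; fixeq; field).
rewrite EQ.
pose proof (abs_le _ _ (abs_pow _ _ 1 Br)) as M1.
pose proof (abs_le _ _ (abs_pow _ _ 2 Br)) as M2.
pose proof (abs_le _ _ (abs_pow _ _ 3 Br)) as M3.
pose proof (abs_le _ _ (abs_pow _ _ 4 Br)) as M4.
pose proof (abs_le _ _ (abs_pow _ _ 5 Br)) as M5.
pose proof (abs_le _ _ (abs_pow _ _ 6 Br)) as M6.
pose proof (abs_le _ _ (abs_pow _ _ 7 Br)) as M7.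
pose proof (abs_le _ _ (abs_pow _ _ 8 Br)) as M8.
lra.
Qed.

Lemma dq_3 (r : R) : (129/25) <= r <= (517/100) -> 0 < (dqp r).
Proof.
intros Hr.
assert (Cr : (1033/200) - (1/200) <= r <= (1033/200) + (1/200)) by lra.
destruct (cb _ _ _ Cr) as [s_r [Er Br]].
assert (EQ : dqp r = (26830153633788247191369/2560000000000000000) + (102071345165739675393/1600000000000000)*s_r + (1012871701994807247/16000000000000)*s_r^2 + (1968537737916759/40000000000)*s_r^3 + (3671173304223/160000000)*s_r^4 + (6937713831/1000000)*s_r^5 + (14609007/10000)*s_r^6 + (4497/25)*s_r^7 + (9)*s_r^8) by (subst r; unfold dqp; fixeq; field).
rewrite EQ.
pose proof (abs_le _ _ (abs_pow _ _ 1 Br)) as M1.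
pose proof (abs_le _ _ (abs_pow _ _ 2 Br)) as M2.
pose proof (abs_le _ _ (abs_pow _ _ 3 Br)) as M3.
pose proof (abs_le _ _ (abs_pow _ _ 4 Br)) as M4.
pose proof (abs_le _ _ (abs_pow _ _ 5 Br)) as M5.
pose proof (abs_le _ _ (abs_pow _ _ 6 Br)) as M6.
pose proof (abs_le _ _ (abs_pow _ _ 7 Br)) as M7.
pose proof (abs_le _ _ (abs_pow _ _ 8 Br)) as M8.
lra.
Qed.

Definition dg0a (a x : R) : R :=
  (4)*x + (-4)*x^2 + (2)*x^3 + (-2/3)*x^4 + (12)*a*x^2 + (-12)*a*x^3 + (6)*a*x^4 + (12)*a^2*x^3 + (-12)*a^2*x^4 + (4)*a^3*x^4.

Definition dg1a (a x : R) : R :=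
  (5)*x + (-5)*x^2 + (5/2)*x^3 + (20)*a*x^2 + (-20)*a*x^3 + (30)*a^2*x^3.

Lemma dg0a_d x c : derivable_pt_lim (fun a => g0p a x) c (dg0a c x).
Proof. apply dpl. unfold g0p, dg0a. auto_derive; auto. fixeq; ring. Qed.

Lemma dg1a_d x c : derivable_pt_lim (fun a => g1p a x) c (dg1a c x).
Proof. apply dpl. unfold g1p, dg1a. auto_derive; auto. fixeq; ring. Qed.

Lemma g1_R1_l (a x : R) : (0) <= a <= (97/2000) -> (6459/1250) <= x <= (51673/10000) -> 0 < - (g1p a x).
Proof.
intros Ha Hx.
assert (Ca : (97/4000) - (97/4000) <= a <= (97/4000) + (97/4000)) by lra.
destruct (cb _ _ _ Ca) as [s_a [Ea Ba]].
assert (Cx : (20669/4000) - (1/20000) <= x <= (20669/4000) + (1/20000)) by lra.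
destruct (cb _ _ _ Cx) as [s_x [Ex Bx]].
assert (EQ : g1p a x = (-10681863978747766042129/1228800000000000000000) + (-599807607202426341/102400000000000000)*s_x + (-34512643337289/25600000000000)*s_x^2 + (-2146169981/19200000000)*s_x^3 + (19018054127353644143/102400000000000000)*s_a + (3101625045465041/25600000000000)*s_a*s_x + (172764839589/6400000000)*s_a*s_x^2 + (3252227/1600000)*s_a*s_x^3 + (-25914974991448081/25600000000000)*s_a^2 + (-4092130531247/6400000000)*s_a^2*s_x + (-213983963/1600000)*s_a^2*s_x^2 + (-3709/400)*s_a^2*s_x^3 + (8829953078309/6400000000)*s_a^3 + (1281622683/1600000)*s_a^3*s_x + (62007/400)*s_a^3*s_x^2 + (10)*s_a^3*s_x^3) by (subst a x; unfold g1p; fixeq; field).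
rewrite EQ.
pose proof (abs_le _ _ (abs_pow _ _ 1 Bx)) as M1.
pose proof (abs_le _ _ (abs_pow _ _ 2 Bx)) as M2.
pose proof (abs_le _ _ (abs_pow _ _ 3 Bx)) as M3.
pose proof (abs_le _ _ (abs_pow _ _ 1 Ba)) as M4.
pose proof (abs_le _ _ (abs_mul _ _ _ _ (abs_pow _ _ 1 Ba) (abs_pow _ _ 1 Bx))) as M5.
pose proof (abs_le _ _ (abs_mul _ _ _ _ (abs_pow _ _ 1 Ba) (abs_pow _ _ 2 Bx))) as M6.
pose proof (abs_le _ _ (abs_mul _ _ _ _ (abs_pow _ _ 1 Ba) (abs_pow _ _ 3 Bx))) as M7.
pose proof (abs_le _ _ (abs_pow _ _ 2 Ba)) as M8.
pose proof (abs_le _ _ (abs_mul _ _ _ _ (abs_pow _ _ 2 Ba) (abs_pow _ _ 1 Bx))) as M9.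
pose proof (abs_le _ _ (abs_mul _ _ _ _ (abs_pow _ _ 2 Ba) (abs_pow _ _ 2 Bx))) as M10.
pose proof (abs_le _ _ (abs_mul _ _ _ _ (abs_pow _ _ 2 Ba) (abs_pow _ _ 3 Bx))) as M11.
pose proof (abs_le _ _ (abs_pow _ _ 3 Ba)) as M12.
pose proof (abs_le _ _ (abs_mul _ _ _ _ (abs_pow _ _ 3 Ba) (abs_pow _ _ 1 Bx))) as M13.
pose proof (abs_le _ _ (abs_mul _ _ _ _ (abs_pow _ _ 3 Ba) (abs_pow _ _ 2 Bx))) as M14.
pose proof (abs_le _ _ (abs_mul _ _ _ _ (abs_pow _ _ 3 Ba) (abs_pow _ _ 3 Bx))) as M15.
lra.
Qed.

Lemma g1_R1_r_l (a x : R) : (97/2000) <= a <= (291/4000) -> (6459/1250) <= x <= (51673/10000) -> 0 < - (g1p a x).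
Proof.
intros Ha Hx.
assert (Ca : (97/1600) - (97/8000) <= a <= (97/1600) + (97/8000)) by lra.
destruct (cb _ _ _ Ca) as [s_a [Ea Ba]].
assert (Cx : (20669/4000) - (1/20000) <= x <= (20669/4000) + (1/20000)) by lra.
destruct (cb _ _ _ Cx) as [s_x [Ex Bx]].
assert (EQ : g1p a x = (-252465081277880738929/78643200000000000000) + (-14797110003353541/6553600000000000)*s_x + (-877725106089/1638400000000)*s_x^2 + (-60985181/1228800000)*s_x^3 + (1926014935569674543/16384000000000000)*s_a + (318753900589841/4096000000000)*s_a*s_x + (18309378789/1024000000)*s_a*s_x^2 + (357827/256000)*s_a*s_x^3 + (-8824280189106481/10240000000000)*s_a^2 + (-1413080892047/2560000000)*s_a^2*s_x + (-74767163/640000)*s_a^2*s_x^2 + (-1309/160)*s_a^2*s_x^3 + (8829953078309/6400000000)*s_a^3 + (1281622683/1600000)*s_a^3*s_x + (62007/400)*s_a^3*s_x^2 + (10)*s_a^3*s_x^3) by (subst a x; unfold g1p; fixeq; field).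
rewrite EQ.
pose proof (abs_le _ _ (abs_pow _ _ 1 Bx)) as M1.
pose proof (abs_le _ _ (abs_pow _ _ 2 Bx)) as M2.
pose proof (abs_le _ _ (abs_pow _ _ 3 Bx)) as M3.
pose proof (abs_le _ _ (abs_pow _ _ 1 Ba)) as M4.
pose proof (abs_le _ _ (abs_mul _ _ _ _ (abs_pow _ _ 1 Ba) (abs_pow _ _ 1 Bx))) as M5.
pose proof (abs_le _ _ (abs_mul _ _ _ _ (abs_pow _ _ 1 Ba) (abs_pow _ _ 2 Bx))) as M6.
pose proof (abs_le _ _ (abs_mul _ _ _ _ (abs_pow _ _ 1 Ba) (abs_pow _ _ 3 Bx))) as M7.
pose proof (abs_le _ _ (abs_pow _ _ 2 Ba)) as M8.
pose proof (abs_le _ _ (abs_mul _ _ _ _ (abs_pow _ _ 2 Ba) (abs_pow _ _ 1 Bx))) as M9.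
pose proof (abs_le _ _ (abs_mul _ _ _ _ (abs_pow _ _ 2 Ba) (abs_pow _ _ 2 Bx))) as M10.
pose proof (abs_le _ _ (abs_mul _ _ _ _ (abs_pow _ _ 2 Ba) (abs_pow _ _ 3 Bx))) as M11.
pose proof (abs_le _ _ (abs_pow _ _ 3 Ba)) as M12.
pose proof (abs_le _ _ (abs_mul _ _ _ _ (abs_pow _ _ 3 Ba) (abs_pow _ _ 1 Bx))) as M13.
pose proof (abs_le _ _ (abs_mul _ _ _ _ (abs_pow _ _ 3 Ba) (abs_pow _ _ 2 Bx))) as M14.
pose proof (abs_le _ _ (abs_mul _ _ _ _ (abs_pow _ _ 3 Ba) (abs_pow _ _ 3 Bx))) as M15.
lra.
Qed.

Lemma g1_R1_r_r_l (a x : R) : (291/4000) <= a <= (679/8000) -> (6459/1250) <= x <= (51673/10000) -> 0 < - (g1p a x).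
Proof.
intros Ha Hx.
assert (Ca : (1261/16000) - (97/16000) <= a <= (1261/16000) + (97/16000)) by lra.
destruct (cb _ _ _ Ca) as [s_a [Ea Ba]].
assert (Cx : (20669/4000) - (1/20000) <= x <= (20669/4000) + (1/20000)) by lra.
destruct (cb _ _ _ Cx) as [s_x [Ex Bx]].
assert (EQ : g1p a x = (-106088675882426928545413/78643200000000000000000) + (-6686400561071523177/6553600000000000000)*s_x + (-406707777531933/1638400000000000)*s_x^2 + (-32998380257/1228800000000)*s_x^3 + (143487370626240588167/1638400000000000000)*s_a + (23976846538527929/409600000000000)*s_a*s_x + (1411545434541/102400000000)*s_a*s_x^2 + (28418363/25600000)*s_a*s_x^3 + (-80534252853701053/102400000000000)*s_a^2 + (-13011952318211/25600000000)*s_a^2*s_x + (-693539519/6400000)*s_a^2*s_x^2 + (-12217/1600)*s_a^2*s_x^3 + (8829953078309/6400000000)*s_a^3 + (1281622683/1600000)*s_a^3*s_x + (62007/400)*s_a^3*s_x^2 + (10)*s_a^3*s_x^3) by (subst a x; unfold g1p; fixeq; field).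
rewrite EQ.
pose proof (abs_le _ _ (abs_pow _ _ 1 Bx)) as M1.
pose proof (abs_le _ _ (abs_pow _ _ 2 Bx)) as M2.
pose proof (abs_le _ _ (abs_pow _ _ 3 Bx)) as M3.
pose proof (abs_le _ _ (abs_pow _ _ 1 Ba)) as M4.
pose proof (abs_le _ _ (abs_mul _ _ _ _ (abs_pow _ _ 1 Ba) (abs_pow _ _ 1 Bx))) as M5.
pose proof (abs_le _ _ (abs_mul _ _ _ _ (abs_pow _ _ 1 Ba) (abs_pow _ _ 2 Bx))) as M6.
pose proof (abs_le _ _ (abs_mul _ _ _ _ (abs_pow _ _ 1 Ba) (abs_pow _ _ 3 Bx))) as M7.
pose proof (abs_le _ _ (abs_pow _ _ 2 Ba)) as M8.
pose proof (abs_le _ _ (abs_mul _ _ _ _ (abs_pow _ _ 2 Ba) (abs_pow _ _ 1 Bx))) as M9.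
pose proof (abs_le _ _ (abs_mul _ _ _ _ (abs_pow _ _ 2 Ba) (abs_pow _ _ 2 Bx))) as M10.
pose proof (abs_le _ _ (abs_mul _ _ _ _ (abs_pow _ _ 2 Ba) (abs_pow _ _ 3 Bx))) as M11.
pose proof (abs_le _ _ (abs_pow _ _ 3 Ba)) as M12.
pose proof (abs_le _ _ (abs_mul _ _ _ _ (abs_pow _ _ 3 Ba) (abs_pow _ _ 1 Bx))) as M13.
pose proof (abs_le _ _ (abs_mul _ _ _ _ (abs_pow _ _ 3 Ba) (abs_pow _ _ 2 Bx))) as M14.
pose proof (abs_le _ _ (abs_mul _ _ _ _ (abs_pow _ _ 3 Ba) (abs_pow _ _ 3 Bx))) as M15.
lra.
Qed.

Lemma g1_R1_r_r_r_l (a x : R) : (679/8000) <= a <= (291/3200) -> (6459/1250) <= x <= (51673/10000) -> 0 < - (g1p a x).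
Proof.
intros Ha Hx.
assert (Ca : (2813/32000) - (97/32000) <= a <= (2813/32000) + (97/32000)) by lra.
destruct (cb _ _ _ Ca) as [s_a [Ea Ba]].
assert (Cx : (20669/4000) - (1/20000) <= x <= (20669/4000) + (1/20000)) by lra.
destruct (cb _ _ _ Cx) as [s_x [Ex Bx]].
assert (EQ : g1p a x = (-387917067586975847392181/629145600000000000000000) + (-27754303420930562649/52428800000000000000)*s_x + (-1726554587369421/13107200000000000)*s_x^2 + (-170883478609/9830400000000)*s_x^3 + (482450799953127180263/6553600000000000000)*s_a + (81087060926971481/1638400000000000)*s_a*s_x + (4854654182349/409600000000)*s_a*s_x^2 + (99706907/102400000)*s_a*s_x^3 + (-153359956670038349/204800000000000)*s_a^2 + (-24905048034163/51200000000)*s_a^2*s_x + (-1332946927/12800000)*s_a^2*s_x^2 + (-23561/3200)*s_a^2*s_x^3 + (8829953078309/6400000000)*s_a^3 + (1281622683/1600000)*s_a^3*s_x + (62007/400)*s_a^3*s_x^2 + (10)*s_a^3*s_x^3) by (subst a x; unfold g1p; fixeq; field).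
rewrite EQ.
pose proof (abs_le _ _ (abs_pow _ _ 1 Bx)) as M1.
pose proof (abs_le _ _ (abs_pow _ _ 2 Bx)) as M2.
pose proof (abs_le _ _ (abs_pow _ _ 3 Bx)) as M3.
pose proof (abs_le _ _ (abs_pow _ _ 1 Ba)) as M4.
pose proof (abs_le _ _ (abs_mul _ _ _ _ (abs_pow _ _ 1 Ba) (abs_pow _ _ 1 Bx))) as M5.
pose proof (abs_le _ _ (abs_mul _ _ _ _ (abs_pow _ _ 1 Ba) (abs_pow _ _ 2 Bx))) as M6.
pose proof (abs_le _ _ (abs_mul _ _ _ _ (abs_pow _ _ 1 Ba) (abs_pow _ _ 3 Bx))) as M7.
pose proof (abs_le _ _ (abs_pow _ _ 2 Ba)) as M8.
pose proof (abs_le _ _ (abs_mul _ _ _ _ (abs_pow _ _ 2 Ba) (abs_pow _ _ 1 Bx))) as M9.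
pose proof (abs_le _ _ (abs_mul _ _ _ _ (abs_pow _ _ 2 Ba) (abs_pow _ _ 2 Bx))) as M10.
pose proof (abs_le _ _ (abs_mul _ _ _ _ (abs_pow _ _ 2 Ba) (abs_pow _ _ 3 Bx))) as M11.
pose proof (abs_le _ _ (abs_pow _ _ 3 Ba)) as M12.
pose proof (abs_le _ _ (abs_mul _ _ _ _ (abs_pow _ _ 3 Ba) (abs_pow _ _ 1 Bx))) as M13.
pose proof (abs_le _ _ (abs_mul _ _ _ _ (abs_pow _ _ 3 Ba) (abs_pow _ _ 2 Bx))) as M14.
pose proof (abs_le _ _ (abs_mul _ _ _ _ (abs_pow _ _ 3 Ba) (abs_pow _ _ 3 Bx))) as M15.
lra.
Qed.

Lemma g1_R1_r_r_r_r_l (a x : R) : (291/3200) <= a <= (3007/32000) -> (6459/1250) <= x <= (51673/10000) -> 0 < - (g1p a x).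
Proof.
intros Ha Hx.
assert (Ca : (5917/64000) - (97/64000) <= a <= (5917/64000) + (97/64000)) by lra.
destruct (cb _ _ _ Ca) as [s_a [Ea Ba]].
assert (Cx : (20669/4000) - (1/20000) <= x <= (20669/4000) + (1/20000)) by lra.
destruct (cb _ _ _ Cx) as [s_x [Ex Bx]].
assert (EQ : g1p a x = (-1495885626563106769942549/5033164800000000000000000) + (-131835475228299646521/419430400000000000000)*s_x + (-8385841801054509/104857600000000000)*s_x^2 + (-1030788397361/78643200000000)*s_x^3 + (1753535398018456936103/26214400000000000000)*s_a + (295684355067377561/6553600000000000)*s_a*s_x + (17882818950669/1638400000000)*s_a*s_x^2 + (371656667/409600000)*s_a*s_x^3 + (-299011364302712941/409600000000000)*s_a^2 + (-48691239466067/102400000000)*s_a^2*s_x + (-2611761743/25600000)*s_a^2*s_x^2 + (-46249/6400)*s_a^2*s_x^3 + (8829953078309/6400000000)*s_a^3 + (1281622683/1600000)*s_a^3*s_x + (62007/400)*s_a^3*s_x^2 + (10)*s_a^3*s_x^3) by (subst a x; unfold g1p; fixeq; field).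
rewrite EQ.
pose proof (abs_le _ _ (abs_pow _ _ 1 Bx)) as M1.
pose proof (abs_le _ _ (abs_pow _ _ 2 Bx)) as M2.
pose proof (abs_le _ _ (abs_pow _ _ 3 Bx)) as M3.
pose proof (abs_le _ _ (abs_pow _ _ 1 Ba)) as M4.
pose proof (abs_le _ _ (abs_mul _ _ _ _ (abs_pow _ _ 1 Ba) (abs_pow _ _ 1 Bx))) as M5.
pose proof (abs_le _ _ (abs_mul _ _ _ _ (abs_pow _ _ 1 Ba) (abs_pow _ _ 2 Bx))) as M6.
pose proof (abs_le _ _ (abs_mul _ _ _ _ (abs_pow _ _ 1 Ba) (abs_pow _ _ 3 Bx))) as M7.
pose proof (abs_le _ _ (abs_pow _ _ 2 Ba)) as M8.
pose proof (abs_le _ _ (abs_mul _ _ _ _ (abs_pow _ _ 2 Ba) (abs_pow _ _ 1 Bx))) as M9.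
pose proof (abs_le _ _ (abs_mul _ _ _ _ (abs_pow _ _ 2 Ba) (abs_pow _ _ 2 Bx))) as M10.
pose proof (abs_le _ _ (abs_mul _ _ _ _ (abs_pow _ _ 2 Ba) (abs_pow _ _ 3 Bx))) as M11.
pose proof (abs_le _ _ (abs_pow _ _ 3 Ba)) as M12.
pose proof (abs_le _ _ (abs_mul _ _ _ _ (abs_pow _ _ 3 Ba) (abs_pow _ _ 1 Bx))) as M13.
pose proof (abs_le _ _ (abs_mul _ _ _ _ (abs_pow _ _ 3 Ba) (abs_pow _ _ 2 Bx))) as M14.
pose proof (abs_le _ _ (abs_mul _ _ _ _ (abs_pow _ _ 3 Ba) (abs_pow _ _ 3 Bx))) as M15.
lra.
Qed.

Lemma g1_R1_r_r_r_r_r (a x : R) : (3007/32000) <= a <= (97/1000) -> (6459/1250) <= x <= (51673/10000) -> 0 < - (g1p a x).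
Proof.
intros Ha Hx.
assert (Ca : (6111/64000) - (97/64000) <= a <= (6111/64000) + (97/64000)) by lra.
destruct (cb _ _ _ Ca) as [s_a [Ea Ba]].
assert (Cx : (20669/4000) - (1/20000) <= x <= (20669/4000) + (1/20000)) by lra.
destruct (cb _ _ _ Cx) as [s_x [Ex Bx]].
assert (EQ : g1p a x = (-508895387402675397634063/5033164800000000000000000) + (-76295896214421604027/419430400000000000000)*s_x + (-5014418452666583/104857600000000000)*s_x^2 + (-819684195107/78643200000000)*s_x^3 + (1638515961011170027567/26214400000000000000)*s_a + (276936859608435729/6553600000000000)*s_a*s_x + (16876456480741/1638400000000)*s_a*s_x^2 + (353824963/409600000)*s_a*s_x^3 + (-293872331611137103/409600000000000)*s_a^2 + (-47945335064561/102400000000)*s_a^2*s_x + (-2575673669/25600000)*s_a^2*s_x^2 + (-45667/6400)*s_a^2*s_x^3 + (8829953078309/6400000000)*s_a^3 + (1281622683/1600000)*s_a^3*s_x + (62007/400)*s_a^3*s_x^2 + (10)*s_a^3*s_x^3) by (subst a x; unfold g1p; fixeq; field).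
rewrite EQ.
pose proof (abs_le _ _ (abs_pow _ _ 1 Bx)) as M1.
pose proof (abs_le _ _ (abs_pow _ _ 2 Bx)) as M2.
pose proof (abs_le _ _ (abs_pow _ _ 3 Bx)) as M3.
pose proof (abs_le _ _ (abs_pow _ _ 1 Ba)) as M4.
pose proof (abs_le _ _ (abs_mul _ _ _ _ (abs_pow _ _ 1 Ba) (abs_pow _ _ 1 Bx))) as M5.
pose proof (abs_le _ _ (abs_mul _ _ _ _ (abs_pow _ _ 1 Ba) (abs_pow _ _ 2 Bx))) as M6.
pose proof (abs_le _ _ (abs_mul _ _ _ _ (abs_pow _ _ 1 Ba) (abs_pow _ _ 3 Bx))) as M7.
pose proof (abs_le _ _ (abs_pow _ _ 2 Ba)) as M8.
pose proof (abs_le _ _ (abs_mul _ _ _ _ (abs_pow _ _ 2 Ba) (abs_pow _ _ 1 Bx))) as M9.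
pose proof (abs_le _ _ (abs_mul _ _ _ _ (abs_pow _ _ 2 Ba) (abs_pow _ _ 2 Bx))) as M10.
pose proof (abs_le _ _ (abs_mul _ _ _ _ (abs_pow _ _ 2 Ba) (abs_pow _ _ 3 Bx))) as M11.
pose proof (abs_le _ _ (abs_pow _ _ 3 Ba)) as M12.
pose proof (abs_le _ _ (abs_mul _ _ _ _ (abs_pow _ _ 3 Ba) (abs_pow _ _ 1 Bx))) as M13.
pose proof (abs_le _ _ (abs_mul _ _ _ _ (abs_pow _ _ 3 Ba) (abs_pow _ _ 2 Bx))) as M14.
pose proof (abs_le _ _ (abs_mul _ _ _ _ (abs_pow _ _ 3 Ba) (abs_pow _ _ 3 Bx))) as M15.
lra.
Qed.

Lemma g1_R1_r_r_r_r (a x : R) : (291/3200) <= a <= (97/1000) -> (6459/1250) <= x <= (51673/10000) -> 0 < - (g1p a x).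
Proof.
intros Ha Hx.
destruct (Rle_lt_dec a (3007/32000)).
- apply g1_R1_r_r_r_r_l; lra.
- apply g1_R1_r_r_r_r_r; lra.
Qed.

Lemma g1_R1_r_r_r (a x : R) : (679/8000) <= a <= (97/1000) -> (6459/1250) <= x <= (51673/10000) -> 0 < - (g1p a x).
Proof.
intros Ha Hx.
destruct (Rle_lt_dec a (291/3200)).
- apply g1_R1_r_r_r_l; lra.
- apply g1_R1_r_r_r_r; lra.
Qed.

Lemma g1_R1_r_r (a x : R) : (291/4000) <= a <= (97/1000) -> (6459/1250) <= x <= (51673/10000) -> 0 < - (g1p a x).
Proof.
intros Ha Hx.
destruct (Rle_lt_dec a (679/8000)).
- apply g1_R1_r_r_l; lra.
- apply g1_R1_r_r_r; lra.
Qed.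

Lemma g1_R1_r (a x : R) : (97/2000) <= a <= (97/1000) -> (6459/1250) <= x <= (51673/10000) -> 0 < - (g1p a x).
Proof.
intros Ha Hx.
destruct (Rle_lt_dec a (291/4000)).
- apply g1_R1_r_l; lra.
- apply g1_R1_r_r; lra.
Qed.

Lemma g1_R1 (a x : R) : (0) <= a <= (97/1000) -> (6459/1250) <= x <= (51673/10000) -> 0 < - (g1p a x).
Proof.
intros Ha Hx.
destruct (Rle_lt_dec a (97/2000)).
- apply g1_R1_l; lra.
- apply g1_R1_r; lra.
Qed.

Lemma dg1_R (a x : R) : (97/1000) <= a <= (243/2500) -> (6459/1250) <= x <= (51673/10000) -> 0 < (dg1a a x).
Proof.
intros Ha Hx.
assert (Ca : (971/10000) - (1/10000) <= a <= (971/10000) + (1/10000)) by lra.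
destruct (cb _ _ _ Ca) as [s_a [Ea Ba]].
assert (Cx : (20669/4000) - (1/20000) <= x <= (20669/4000) + (1/20000)) by lra.
destruct (cb _ _ _ Cx) as [s_x [Ex Bx]].
assert (EQ : dg1a a x = (38526034686362027607/640000000000000000) + (6520089647327209/160000000000000)*s_x + (399067285661/40000000000)*s_x^2 + (8408523/10000000)*s_x^3 + (-45489575025975883/32000000000000)*s_a + (-7429339954421/8000000000)*s_a*s_x + (-399443609/2000000)*s_a*s_x^2 + (-7087/500)*s_a*s_x^3 + (26489859234927/6400000000)*s_a^2 + (3844868049/1600000)*s_a^2*s_x + (186021/400)*s_a^2*s_x^2 + (30)*s_a^2*s_x^3) by (subst a x; unfold dg1a; fixeq; field).
rewrite EQ.
pose proof (abs_le _ _ (abs_pow _ _ 1 Bx)) as M1.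
pose proof (abs_le _ _ (abs_pow _ _ 2 Bx)) as M2.
pose proof (abs_le _ _ (abs_pow _ _ 3 Bx)) as M3.
pose proof (abs_le _ _ (abs_pow _ _ 1 Ba)) as M4.
pose proof (abs_le _ _ (abs_mul _ _ _ _ (abs_pow _ _ 1 Ba) (abs_pow _ _ 1 Bx))) as M5.
pose proof (abs_le _ _ (abs_mul _ _ _ _ (abs_pow _ _ 1 Ba) (abs_pow _ _ 2 Bx))) as M6.
pose proof (abs_le _ _ (abs_mul _ _ _ _ (abs_pow _ _ 1 Ba) (abs_pow _ _ 3 Bx))) as M7.
pose proof (abs_le _ _ (abs_pow _ _ 2 Ba)) as M8.
pose proof (abs_le _ _ (abs_mul _ _ _ _ (abs_pow _ _ 2 Ba) (abs_pow _ _ 1 Bx))) as M9.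
pose proof (abs_le _ _ (abs_mul _ _ _ _ (abs_pow _ _ 2 Ba) (abs_pow _ _ 2 Bx))) as M10.
pose proof (abs_le _ _ (abs_mul _ _ _ _ (abs_pow _ _ 2 Ba) (abs_pow _ _ 3 Bx))) as M11.
lra.
Qed.

Lemma dg0_R (a x : R) : (971/10000) <= a <= (973/10000) -> (6459/1250) <= x <= (51673/10000) -> 0 < - (dg0a a x).
Proof.
intros Ha Hx.
assert (Ca : (243/2500) - (1/10000) <= a <= (243/2500) + (1/10000)) by lra.
destruct (cb _ _ _ Ca) as [s_a [Ea Ba]].
assert (Cx : (20669/4000) - (1/20000) <= x <= (20669/4000) + (1/20000)) by lra.
destruct (cb _ _ _ Cx) as [s_x [Ex Bx]].
assert (EQ : dg0a a x = (-186147973439318931431313659/3000000000000000000000000) + (-10506296227593207622711/187500000000000000000)*s_x + (-596869186834170019/31250000000000000)*s_x^2 + (-35690665521151/11718750000000)*s_x^3 + (-2263680779/11718750000)*s_x^4 + (672748046871780463548987/400000000000000000000)*s_a + (35901270209958774423/25000000000000000)*s_a*s_x + (5847502117015401/12500000000000)*s_a*s_x^2 + (106989821343/1562500000)*s_a*s_x^3 + (5907147/1562500)*s_a*s_x^4 + (-970851566139505809891/160000000000000000)*s_a^2 + (-50175442170730239/10000000000000)*s_a^2*s_x + (-7747762186593/5000000000)*s_a^2*s_x^2 + (-132449799/625000)*s_a^2*s_x^3 + (-6771/625)*s_a^2*s_x^4 + (182506300175568721/64000000000000)*s_a^3 + (8829953078309/4000000000)*s_a^3*s_x + (1281622683/2000000)*s_a^3*s_x^2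 + (20669/250)*s_a^3*s_x^3 + (4)*s_a^3*s_x^4) by (subst a x; unfold dg0a; fixeq; field).
rewrite EQ.
pose proof (abs_le _ _ (abs_pow _ _ 1 Bx)) as M1.
pose proof (abs_le _ _ (abs_pow _ _ 2 Bx)) as M2.
pose proof (abs_le _ _ (abs_pow _ _ 3 Bx)) as M3.
pose proof (abs_le _ _ (abs_pow _ _ 4 Bx)) as M4.
pose proof (abs_le _ _ (abs_pow _ _ 1 Ba)) as M5.
pose proof (abs_le _ _ (abs_mul _ _ _ _ (abs_pow _ _ 1 Ba) (abs_pow _ _ 1 Bx))) as M6.
pose proof (abs_le _ _ (abs_mul _ _ _ _ (abs_pow _ _ 1 Ba) (abs_pow _ _ 2 Bx))) as M7.
pose proof (abs_le _ _ (abs_mul _ _ _ _ (abs_pow _ _ 1 Ba) (abs_pow _ _ 3 Bx))) as M8.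
pose proof (abs_le _ _ (abs_mul _ _ _ _ (abs_pow _ _ 1 Ba) (abs_pow _ _ 4 Bx))) as M9.
pose proof (abs_le _ _ (abs_pow _ _ 2 Ba)) as M10.
pose proof (abs_le _ _ (abs_mul _ _ _ _ (abs_pow _ _ 2 Ba) (abs_pow _ _ 1 Bx))) as M11.
pose proof (abs_le _ _ (abs_mul _ _ _ _ (abs_pow _ _ 2 Ba) (abs_pow _ _ 2 Bx))) as M12.
pose proof (abs_le _ _ (abs_mul _ _ _ _ (abs_pow _ _ 2 Ba) (abs_pow _ _ 3 Bx))) as M13.
pose proof (abs_le _ _ (abs_mul _ _ _ _ (abs_pow _ _ 2 Ba) (abs_pow _ _ 4 Bx))) as M14.
pose proof (abs_le _ _ (abs_pow _ _ 3 Ba)) as M15.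
pose proof (abs_le _ _ (abs_mul _ _ _ _ (abs_pow _ _ 3 Ba) (abs_pow _ _ 1 Bx))) as M16.
pose proof (abs_le _ _ (abs_mul _ _ _ _ (abs_pow _ _ 3 Ba) (abs_pow _ _ 2 Bx))) as M17.
pose proof (abs_le _ _ (abs_mul _ _ _ _ (abs_pow _ _ 3 Ba) (abs_pow _ _ 3 Bx))) as M18.
pose proof (abs_le _ _ (abs_mul _ _ _ _ (abs_pow _ _ 3 Ba) (abs_pow _ _ 4 Bx))) as M19.
lra.
Qed.

Lemma g0_R2_l (a x : R) : (973/10000) <= a <= (2873/20000) -> (6459/1250) <= x <= (51673/10000) -> 0 < - (g0p a x).
Proof.
intros Ha Hx.
assert (Ca : (4819/40000) - (927/40000) <= a <= (4819/40000) + (927/40000)) by lra.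
destruct (cb _ _ _ Ca) as [s_a [Ea Ba]].
assert (Cx : (20669/4000) - (1/20000) <= x <= (20669/4000) + (1/20000)) by lra.
destruct (cb _ _ _ Cx) as [s_x [Ex Bx]].
assert (EQ : g0p a x = (-2001642972909942795803699225805277/1966080000000000000000000000000000) + (-38497751267763620903173417611/40960000000000000000000000000)*s_x + (-5894081162715282920946357/20480000000000000000000000)*s_x^2 + (-344786320977737336153/7680000000000000000000)*s_x^3 + (-4841128212976879/2560000000000000000)*s_x^4 + (-321391862041359851031529208783/12288000000000000000000000000)*s_a + (-19430243415768519882198907/768000000000000000000000)*s_a*s_x + (-1157519043141780030103/128000000000000000000)*s_a*s_x^2 + (-75150862339785187/48000000000000000)*s_a*s_x^3 + (-5327662504223/48000000000000)*s_a*s_x^4 + (143774458170487069940816043/204800000000000000000000)*s_a^2 + (7718858777479375533447/12800000000000000000)*s_a^2*s_x + (1269471792567983289/6400000000000000)*s_a^2*s_x^2 + (23497195101327/800000000000)*s_a^2*s_x^3 + (1313108283/800000000)*s_a^2*s_x^4 + (-5007961653947243173501/2560000000000000000)*s_a^3 + (-259381671927988929/160000000000000)*s_a^3*s_x + (-40128207610623/80000000000)*s_a^3*s_x^2 + (-687156089/10000000)*s_a^3*s_x^3 + (-35181/10000)*s_a^3*s_x^4 + (182506300175568721/256000000000000)*s_a^4 + (8829953078309/16000000000)*s_a^4*s_x + (1281622683/8000000)*s_a^4*s_x^2 + (20669/1000)*s_a^4*s_x^3 + (1)*s_a^4*s_x^4) by (subst a x; unfold g0p; fixeq; field).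
rewrite EQ.
pose proof (abs_le _ _ (abs_pow _ _ 1 Bx)) as M1.
pose proof (abs_le _ _ (abs_pow _ _ 2 Bx)) as M2.
pose proof (abs_le _ _ (abs_pow _ _ 3 Bx)) as M3.
pose proof (abs_le _ _ (abs_pow _ _ 4 Bx)) as M4.
pose proof (abs_le _ _ (abs_pow _ _ 1 Ba)) as M5.
pose proof (abs_le _ _ (abs_mul _ _ _ _ (abs_pow _ _ 1 Ba) (abs_pow _ _ 1 Bx))) as M6.
pose proof (abs_le _ _ (abs_mul _ _ _ _ (abs_pow _ _ 1 Ba) (abs_pow _ _ 2 Bx))) as M7.
pose proof (abs_le _ _ (abs_mul _ _ _ _ (abs_pow _ _ 1 Ba) (abs_pow _ _ 3 Bx))) as M8.
pose proof (abs_le _ _ (abs_mul _ _ _ _ (abs_pow _ _ 1 Ba) (abs_pow _ _ 4 Bx))) as M9.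
pose proof (abs_le _ _ (abs_pow _ _ 2 Ba)) as M10.
pose proof (abs_le _ _ (abs_mul _ _ _ _ (abs_pow _ _ 2 Ba) (abs_pow _ _ 1 Bx))) as M11.
pose proof (abs_le _ _ (abs_mul _ _ _ _ (abs_pow _ _ 2 Ba) (abs_pow _ _ 2 Bx))) as M12.
pose proof (abs_le _ _ (abs_mul _ _ _ _ (abs_pow _ _ 2 Ba) (abs_pow _ _ 3 Bx))) as M13.
pose proof (abs_le _ _ (abs_mul _ _ _ _ (abs_pow _ _ 2 Ba) (abs_pow _ _ 4 Bx))) as M14.
pose proof (abs_le _ _ (abs_pow _ _ 3 Ba)) as M15.
pose proof (abs_le _ _ (abs_mul _ _ _ _ (abs_pow _ _ 3 Ba) (abs_pow _ _ 1 Bx))) as M16.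
pose proof (abs_le _ _ (abs_mul _ _ _ _ (abs_pow _ _ 3 Ba) (abs_pow _ _ 2 Bx))) as M17.
pose proof (abs_le _ _ (abs_mul _ _ _ _ (abs_pow _ _ 3 Ba) (abs_pow _ _ 3 Bx))) as M18.
pose proof (abs_le _ _ (abs_mul _ _ _ _ (abs_pow _ _ 3 Ba) (abs_pow _ _ 4 Bx))) as M19.
pose proof (abs_le _ _ (abs_pow _ _ 4 Ba)) as M20.
pose proof (abs_le _ _ (abs_mul _ _ _ _ (abs_pow _ _ 4 Ba) (abs_pow _ _ 1 Bx))) as M21.
pose proof (abs_le _ _ (abs_mul _ _ _ _ (abs_pow _ _ 4 Ba) (abs_pow _ _ 2 Bx))) as M22.
pose proof (abs_le _ _ (abs_mul _ _ _ _ (abs_pow _ _ 4 Ba) (abs_pow _ _ 3 Bx))) as M23.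
pose proof (abs_le _ _ (abs_mul _ _ _ _ (abs_pow _ _ 4 Ba) (abs_pow _ _ 4 Bx))) as M24.
lra.
Qed.

Lemma g0_R2_r (a x : R) : (2873/20000) <= a <= (19/100) -> (6459/1250) <= x <= (51673/10000) -> 0 < - (g0p a x).
Proof.
intros Ha Hx.
assert (Ca : (6673/40000) - (927/40000) <= a <= (6673/40000) + (927/40000)) by lra.
destruct (cb _ _ _ Ca) as [s_a [Ea Ba]].
assert (Cx : (20669/4000) - (1/20000) <= x <= (20669/4000) + (1/20000)) by lra.
destruct (cb _ _ _ Cx) as [s_x [Ex Bx]].
assert (EQ : g0p a x = (-1796402422516556237080536826826317/1966080000000000000000000000000000) + (-39972605627172886098959186331/40960000000000000000000000000)*s_x + (-6758862001106144936408997/20480000000000000000000000)*s_x^2 + (-469317953394861288713/7680000000000000000000)*s_x^3 + (-9868962196832959/2560000000000000000)*s_x^4 + (326845373432906947070433506371/12288000000000000000000000000)*s_a + (15646672312840296264380159/768000000000000000000000)*s_a*s_x + (790449174419271151211/128000000000000000000)*s_a*s_x^2 + (34677940449896519/48000000000000000)*s_a*s_x^3 + (906610189651/48000000000000)*s_a*s_x^4 + (89947888209060792400169427/204800000000000000000000)*s_a^2 + (4924551075938389023183/12800000000000000000)*s_a^2*s_x + (836301637570129521/6400000000000000)*s_a^2*s_x^2 + (16066408420503/800000000000)*s_a^2*s_x^3 + (932066787/800000000)*s_a^2*s_x^4 + (-4669594973421738764767/2560000000000000000)*s_a^3 + (-243010938920804043/160000000000000)*s_a^3*s_x + (-37752079156341/80000000000)*s_a^3*s_x^2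 + (-648835763/10000000)*s_a^3*s_x^3 + (-33327/10000)*s_a^3*s_x^4 + (182506300175568721/256000000000000)*s_a^4 + (8829953078309/16000000000)*s_a^4*s_x + (1281622683/8000000)*s_a^4*s_x^2 + (20669/1000)*s_a^4*s_x^3 + (1)*s_a^4*s_x^4) by (subst a x; unfold g0p; fixeq; field).
rewrite EQ.
pose proof (abs_le _ _ (abs_pow _ _ 1 Bx)) as M1.
pose proof (abs_le _ _ (abs_pow _ _ 2 Bx)) as M2.
pose proof (abs_le _ _ (abs_pow _ _ 3 Bx)) as M3.
pose proof (abs_le _ _ (abs_pow _ _ 4 Bx)) as M4.
pose proof (abs_le _ _ (abs_pow _ _ 1 Ba)) as M5.
pose proof (abs_le _ _ (abs_mul _ _ _ _ (abs_pow _ _ 1 Ba) (abs_pow _ _ 1 Bx))) as M6.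
pose proof (abs_le _ _ (abs_mul _ _ _ _ (abs_pow _ _ 1 Ba) (abs_pow _ _ 2 Bx))) as M7.
pose proof (abs_le _ _ (abs_mul _ _ _ _ (abs_pow _ _ 1 Ba) (abs_pow _ _ 3 Bx))) as M8.
pose proof (abs_le _ _ (abs_mul _ _ _ _ (abs_pow _ _ 1 Ba) (abs_pow _ _ 4 Bx))) as M9.
pose proof (abs_le _ _ (abs_pow _ _ 2 Ba)) as M10.
pose proof (abs_le _ _ (abs_mul _ _ _ _ (abs_pow _ _ 2 Ba) (abs_pow _ _ 1 Bx))) as M11.
pose proof (abs_le _ _ (abs_mul _ _ _ _ (abs_pow _ _ 2 Ba) (abs_pow _ _ 2 Bx))) as M12.
pose proof (abs_le _ _ (abs_mul _ _ _ _ (abs_pow _ _ 2 Ba) (abs_pow _ _ 3 Bx))) as M13.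
pose proof (abs_le _ _ (abs_mul _ _ _ _ (abs_pow _ _ 2 Ba) (abs_pow _ _ 4 Bx))) as M14.
pose proof (abs_le _ _ (abs_pow _ _ 3 Ba)) as M15.
pose proof (abs_le _ _ (abs_mul _ _ _ _ (abs_pow _ _ 3 Ba) (abs_pow _ _ 1 Bx))) as M16.
pose proof (abs_le _ _ (abs_mul _ _ _ _ (abs_pow _ _ 3 Ba) (abs_pow _ _ 2 Bx))) as M17.
pose proof (abs_le _ _ (abs_mul _ _ _ _ (abs_pow _ _ 3 Ba) (abs_pow _ _ 3 Bx))) as M18.
pose proof (abs_le _ _ (abs_mul _ _ _ _ (abs_pow _ _ 3 Ba) (abs_pow _ _ 4 Bx))) as M19.
pose proof (abs_le _ _ (abs_pow _ _ 4 Ba)) as M20.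
pose proof (abs_le _ _ (abs_mul _ _ _ _ (abs_pow _ _ 4 Ba) (abs_pow _ _ 1 Bx))) as M21.
pose proof (abs_le _ _ (abs_mul _ _ _ _ (abs_pow _ _ 4 Ba) (abs_pow _ _ 2 Bx))) as M22.
pose proof (abs_le _ _ (abs_mul _ _ _ _ (abs_pow _ _ 4 Ba) (abs_pow _ _ 3 Bx))) as M23.
pose proof (abs_le _ _ (abs_mul _ _ _ _ (abs_pow _ _ 4 Ba) (abs_pow _ _ 4 Bx))) as M24.
lra.
Qed.

Lemma g0_R2 (a x : R) : (973/10000) <= a <= (19/100) -> (6459/1250) <= x <= (51673/10000) -> 0 < - (g0p a x).
Proof.
intros Ha Hx.
destruct (Rle_lt_dec a (2873/20000)).
- apply g0_R2_l; lra.
- apply g0_R2_r; lra.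
Qed.

Definition T5p (a : R) : R :=
  (20) + (-120)*a + (240)*a^2 + (-120)*a^3.

Definition T7p (a : R) : R :=
  (4200) + (-37800)*a + (90720)*a^2 + (-50400)*a^3.

Lemma T7_R3_l (a : R) : (19/100) <= a <= (109/400) -> 0 < - (T7p a).
Proof.
intros Ha.
assert (Ca : (37/160) - (33/800) <= a <= (37/160) + (33/800)) by lra.
destruct (cb _ _ _ Ca) as [s_a [Ea Ba]].
assert (EQ : T7p a = (-1603203/5120) + (-125685/32)*s_a + (55755)*s_a^2 + (-50400)*s_a^3) by (subst a; unfold T7p; fixeq; field).
rewrite EQ.
pose proof (abs_le _ _ (abs_pow _ _ 1 Ba)) as M1.
pose proof (abs_le _ _ (abs_pow _ _ 2 Ba)) as M2.
pose proof (abs_le _ _ (abs_pow _ _ 3 Ba)) as M3.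
lra.
Qed.

Lemma T7_R3_r (a : R) : (109/400) <= a <= (71/200) -> 0 < - (T7p a).
Proof.
intros Ha.
assert (Ca : (251/800) - (33/800) <= a <= (251/800) + (33/800)) by lra.
destruct (cb _ _ _ Ca) as [s_a [Ea Ba]].
assert (EQ : T7p a = (-183024093/640000) + (3394251/800)*s_a + (43281)*s_a^2 + (-50400)*s_a^3) by (subst a; unfold T7p; fixeq; field).
rewrite EQ.
pose proof (abs_le _ _ (abs_pow _ _ 1 Ba)) as M1.
pose proof (abs_le _ _ (abs_pow _ _ 2 Ba)) as M2.
pose proof (abs_le _ _ (abs_pow _ _ 3 Ba)) as M3.
lra.
Qed.

Lemma T7_R3 (a : R) : (19/100) <= a <= (71/200) -> 0 < - (T7p a).
Proof.
intros Ha.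
destruct (Rle_lt_dec a (109/400)).
- apply T7_R3_l; lra.
- apply T7_R3_r; lra.
Qed.

Lemma g1_R4 (a x : R) : (71/200) <= a <= (1/2) -> (6459/1250) <= x <= (51673/10000) -> 0 < - (g1p a x).
Proof.
intros Ha Hx.
assert (Ca : (171/400) - (29/400) <= a <= (171/400) + (29/400)) by lra.
destruct (cb _ _ _ Ca) as [s_a [Ea Ba]].
assert (Cx : (20669/4000) - (1/20000) <= x <= (20669/4000) + (1/20000)) by lra.
destruct (cb _ _ _ Cx) as [s_x [Ex Bx]].
assert (EQ : g1p a x = (-9759078017749913203/1228800000000000000) + (-865138582735087/102400000000000)*s_x + (-52357911323/25600000000)*s_x^2 + (-2768567/19200000)*s_x^3 + (43368393767389207/1024000000000000)*s_a + (-961295493591/256000000000)*s_a*s_x + (-335637539/64000000)*s_a*s_x^2 + (-9077/16000)*s_a*s_x^3 + (1681316795448917/2560000000000)*s_a^2 + (210964163179/640000000)*s_a^2*s_x + (8606791/160000)*s_a^2*s_x^2 + (113/40)*s_a^2*s_x^3 + (8829953078309/6400000000)*s_a^3 + (1281622683/1600000)*s_a^3*s_x + (62007/400)*s_a^3*s_x^2 + (10)*s_a^3*s_x^3) by (subst a x; unfold g1p; fixeq; field).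
rewrite EQ.
pose proof (abs_le _ _ (abs_pow _ _ 1 Bx)) as M1.
pose proof (abs_le _ _ (abs_pow _ _ 2 Bx)) as M2.
pose proof (abs_le _ _ (abs_pow _ _ 3 Bx)) as M3.
pose proof (abs_le _ _ (abs_pow _ _ 1 Ba)) as M4.
pose proof (abs_le _ _ (abs_mul _ _ _ _ (abs_pow _ _ 1 Ba) (abs_pow _ _ 1 Bx))) as M5.
pose proof (abs_le _ _ (abs_mul _ _ _ _ (abs_pow _ _ 1 Ba) (abs_pow _ _ 2 Bx))) as M6.
pose proof (abs_le _ _ (abs_mul _ _ _ _ (abs_pow _ _ 1 Ba) (abs_pow _ _ 3 Bx))) as M7.
pose proof (abs_le _ _ (abs_pow _ _ 2 Ba)) as M8.
pose proof (abs_le _ _ (abs_mul _ _ _ _ (abs_pow _ _ 2 Ba) (abs_pow _ _ 1 Bx))) as M9.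
pose proof (abs_le _ _ (abs_mul _ _ _ _ (abs_pow _ _ 2 Ba) (abs_pow _ _ 2 Bx))) as M10.
pose proof (abs_le _ _ (abs_mul _ _ _ _ (abs_pow _ _ 2 Ba) (abs_pow _ _ 3 Bx))) as M11.
pose proof (abs_le _ _ (abs_pow _ _ 3 Ba)) as M12.
pose proof (abs_le _ _ (abs_mul _ _ _ _ (abs_pow _ _ 3 Ba) (abs_pow _ _ 1 Bx))) as M13.
pose proof (abs_le _ _ (abs_mul _ _ _ _ (abs_pow _ _ 3 Ba) (abs_pow _ _ 2 Bx))) as M14.
pose proof (abs_le _ _ (abs_mul _ _ _ _ (abs_pow _ _ 3 Ba) (abs_pow _ _ 3 Bx))) as M15.
lra.
Qed.

Lemma g0_R5_l_l_l_l (a x : R) : (1/2) <= a <= (443/800) -> (6459/1250) <= x <= (51673/10000) -> 0 < - (g0p a x).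
Proof.
intros Ha Hx.
assert (Ca : (843/1600) - (43/1600) <= a <= (843/1600) + (43/1600)) by lra.
destruct (cb _ _ _ Ca) as [s_a [Ea Ba]].
assert (Cx : (20669/4000) - (1/20000) <= x <= (20669/4000) + (1/20000)) by lra.
destruct (cb _ _ _ Cx) as [s_x [Ex Bx]].
assert (EQ : g0p a x = (-38044687268582635172040160637/5033164800000000000000000000) + (-1693220796026678932622273/314572800000000000000000)*s_x + (-26249146874199116117/52428800000000000000)*s_x^2 + (2386346517116807/19660800000000000)*s_x^3 + (299482509203/19660800000000)*s_x^4 + (-183571712354776155969707159/786432000000000000000000)*s_a + (-9350056712460017034211/49152000000000000000)*s_a*s_x + (-436990237731103519/8192000000000000)*s_a*s_x^2 + (-19017432592651/3072000000000)*s_a*s_x^3 + (-772754279/3072000000)*s_a*s_x^4 + (-319993750627671627839013/327680000000000000000)*s_a^2 + (-16928075272448477577/20480000000000000)*s_a^2*s_x + (-2605500332908599/10240000000000)*s_a^2*s_x^2 + (-43423110657/1280000000)*s_a^2*s_x^3 + (-2120853/1280000)*s_a^2*s_x^4 + (-81645569531727921797/102400000000000000)*s_a^3 + (-4633678187479913/6400000000000)*s_a^3*s_x + (-771765971031/3200000000)*s_a^3*s_x^2 + (-14046433/400000)*s_a^3*s_x^3 + (-757/400)*s_a^3*s_x^4 + (182506300175568721/256000000000000)*s_a^4 + (8829953078309/16000000000)*s_a^4*s_x + (1281622683/8000000)*s_a^4*s_x^2 + (20669/1000)*s_a^4*s_x^3 + (1)*s_a^4*s_x^4) by (subst a x; unfold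 g0p; fixeq; field).
rewrite EQ.
pose proof (abs_le _ _ (abs_pow _ _ 1 Bx)) as M1.
pose proof (abs_le _ _ (abs_pow _ _ 2 Bx)) as M2.
pose proof (abs_le _ _ (abs_pow _ _ 3 Bx)) as M3.
pose proof (abs_le _ _ (abs_pow _ _ 4 Bx)) as M4.
pose proof (abs_le _ _ (abs_pow _ _ 1 Ba)) as M5.
pose proof (abs_le _ _ (abs_mul _ _ _ _ (abs_pow _ _ 1 Ba) (abs_pow _ _ 1 Bx))) as M6.
pose proof (abs_le _ _ (abs_mul _ _ _ _ (abs_pow _ _ 1 Ba) (abs_pow _ _ 2 Bx))) as M7.
pose proof (abs_le _ _ (abs_mul _ _ _ _ (abs_pow _ _ 1 Ba) (abs_pow _ _ 3 Bx))) as M8.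
pose proof (abs_le _ _ (abs_mul _ _ _ _ (abs_pow _ _ 1 Ba) (abs_pow _ _ 4 Bx))) as M9.
pose proof (abs_le _ _ (abs_pow _ _ 2 Ba)) as M10.
pose proof (abs_le _ _ (abs_mul _ _ _ _ (abs_pow _ _ 2 Ba) (abs_pow _ _ 1 Bx))) as M11.
pose proof (abs_le _ _ (abs_mul _ _ _ _ (abs_pow _ _ 2 Ba) (abs_pow _ _ 2 Bx))) as M12.
pose proof (abs_le _ _ (abs_mul _ _ _ _ (abs_pow _ _ 2 Ba) (abs_pow _ _ 3 Bx))) as M13.
pose proof (abs_le _ _ (abs_mul _ _ _ _ (abs_pow _ _ 2 Ba) (abs_pow _ _ 4 Bx))) as M14.
pose proof (abs_le _ _ (abs_pow _ _ 3 Ba)) as M15.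
pose proof (abs_le _ _ (abs_mul _ _ _ _ (abs_pow _ _ 3 Ba) (abs_pow _ _ 1 Bx))) as M16.
pose proof (abs_le _ _ (abs_mul _ _ _ _ (abs_pow _ _ 3 Ba) (abs_pow _ _ 2 Bx))) as M17.
pose proof (abs_le _ _ (abs_mul _ _ _ _ (abs_pow _ _ 3 Ba) (abs_pow _ _ 3 Bx))) as M18.
pose proof (abs_le _ _ (abs_mul _ _ _ _ (abs_pow _ _ 3 Ba) (abs_pow _ _ 4 Bx))) as M19.
pose proof (abs_le _ _ (abs_pow _ _ 4 Ba)) as M20.
pose proof (abs_le _ _ (abs_mul _ _ _ _ (abs_pow _ _ 4 Ba) (abs_pow _ _ 1 Bx))) as M21.
pose proof (abs_le _ _ (abs_mul _ _ _ _ (abs_pow _ _ 4 Ba) (abs_pow _ _ 2 Bx))) as M22.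
pose proof (abs_le _ _ (abs_mul _ _ _ _ (abs_pow _ _ 4 Ba) (abs_pow _ _ 3 Bx))) as M23.
pose proof (abs_le _ _ (abs_mul _ _ _ _ (abs_pow _ _ 4 Ba) (abs_pow _ _ 4 Bx))) as M24.
lra.
Qed.

Lemma g0_R5_l_l_l_r (a x : R) : (443/800) <= a <= (243/400) -> (6459/1250) <= x <= (51673/10000) -> 0 < - (g0p a x).
Proof.
intros Ha Hx.
assert (Ca : (929/1600) - (43/1600) <= a <= (929/1600) + (43/1600)) by lra.
destruct (cb _ _ _ Ca) as [s_a [Ea Ba]].
assert (Cx : (20669/4000) - (1/20000) <= x <= (20669/4000) + (1/20000)) by lra.
destruct (cb _ _ _ Cx) as [s_x [Ex Bx]].
assert (EQ : g0p a x = (-38662207706111276048671095599/1677721600000000000000000000) + (-5694758902245811473264913/314572800000000000000000)*s_x + (-217007789277398888677/52428800000000000000)*s_x^2 + (-2062138078543811/6553600000000000)*s_x^3 + (-66073765757/19660800000000)*s_x^4 + (-271216503025231958723454893/786432000000000000000000)*s_a + (-14009087253717606450097/49152000000000000000)*s_a*s_x + (-677372025929220613/8192000000000000)*s_a*s_x^2 + (-31116141983977/3072000000000)*s_a*s_x^3 + (-1368415133/3072000000)*s_a*s_x^4 + (-358073414717747716704717/327680000000000000000)*s_a^2 + (-19123134218286592593/20480000000000000)*s_a^2*s_x + (-2975294929870191/10240000000000)*s_a^2*s_x^2 + (-50212466313/1280000000)*s_a^2*s_x^3 + (-2489277/1280000)*s_a^2*s_x^4 + (-65950027716629011791/102400000000000000)*s_a^3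 + (-3874302222745339/6400000000000)*s_a^3*s_x + (-661546420293/3200000000)*s_a^3*s_x^2 + (-12268899/400000)*s_a^3*s_x^3 + (-671/400)*s_a^3*s_x^4 + (182506300175568721/256000000000000)*s_a^4 + (8829953078309/16000000000)*s_a^4*s_x + (1281622683/8000000)*s_a^4*s_x^2 + (20669/1000)*s_a^4*s_x^3 + (1)*s_a^4*s_x^4) by (subst a x; unfold g0p; fixeq; field).
rewrite EQ.
pose proof (abs_le _ _ (abs_pow _ _ 1 Bx)) as M1.
pose proof (abs_le _ _ (abs_pow _ _ 2 Bx)) as M2.
pose proof (abs_le _ _ (abs_pow _ _ 3 Bx)) as M3.
pose proof (abs_le _ _ (abs_pow _ _ 4 Bx)) as M4.
pose proof (abs_le _ _ (abs_pow _ _ 1 Ba)) as M5.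
pose proof (abs_le _ _ (abs_mul _ _ _ _ (abs_pow _ _ 1 Ba) (abs_pow _ _ 1 Bx))) as M6.
pose proof (abs_le _ _ (abs_mul _ _ _ _ (abs_pow _ _ 1 Ba) (abs_pow _ _ 2 Bx))) as M7.
pose proof (abs_le _ _ (abs_mul _ _ _ _ (abs_pow _ _ 1 Ba) (abs_pow _ _ 3 Bx))) as M8.
pose proof (abs_le _ _ (abs_mul _ _ _ _ (abs_pow _ _ 1 Ba) (abs_pow _ _ 4 Bx))) as M9.
pose proof (abs_le _ _ (abs_pow _ _ 2 Ba)) as M10.
pose proof (abs_le _ _ (abs_mul _ _ _ _ (abs_pow _ _ 2 Ba) (abs_pow _ _ 1 Bx))) as M11.
pose proof (abs_le _ _ (abs_mul _ _ _ _ (abs_pow _ _ 2 Ba) (abs_pow _ _ 2 Bx))) as M12.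
pose proof (abs_le _ _ (abs_mul _ _ _ _ (abs_pow _ _ 2 Ba) (abs_pow _ _ 3 Bx))) as M13.
pose proof (abs_le _ _ (abs_mul _ _ _ _ (abs_pow _ _ 2 Ba) (abs_pow _ _ 4 Bx))) as M14.
pose proof (abs_le _ _ (abs_pow _ _ 3 Ba)) as M15.
pose proof (abs_le _ _ (abs_mul _ _ _ _ (abs_pow _ _ 3 Ba) (abs_pow _ _ 1 Bx))) as M16.
pose proof (abs_le _ _ (abs_mul _ _ _ _ (abs_pow _ _ 3 Ba) (abs_pow _ _ 2 Bx))) as M17.
pose proof (abs_le _ _ (abs_mul _ _ _ _ (abs_pow _ _ 3 Ba) (abs_pow _ _ 3 Bx))) as M18.
pose proof (abs_le _ _ (abs_mul _ _ _ _ (abs_pow _ _ 3 Ba) (abs_pow _ _ 4 Bx))) as M19.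
pose proof (abs_le _ _ (abs_pow _ _ 4 Ba)) as M20.
pose proof (abs_le _ _ (abs_mul _ _ _ _ (abs_pow _ _ 4 Ba) (abs_pow _ _ 1 Bx))) as M21.
pose proof (abs_le _ _ (abs_mul _ _ _ _ (abs_pow _ _ 4 Ba) (abs_pow _ _ 2 Bx))) as M22.
pose proof (abs_le _ _ (abs_mul _ _ _ _ (abs_pow _ _ 4 Ba) (abs_pow _ _ 3 Bx))) as M23.
pose proof (abs_le _ _ (abs_mul _ _ _ _ (abs_pow _ _ 4 Ba) (abs_pow _ _ 4 Bx))) as M24.
lra.
Qed.

Lemma g0_R5_l_l_l (a x : R) : (1/2) <= a <= (243/400) -> (6459/1250) <= x <= (51673/10000) -> 0 < - (g0p a x).
Proof.
intros Ha Hx.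
destruct (Rle_lt_dec a (443/800)).
- apply g0_R5_l_l_l_l; lra.
- apply g0_R5_l_l_l_r; lra.
Qed.

Lemma g0_R5_l_l_r (a x : R) : (243/400) <= a <= (143/200) -> (6459/1250) <= x <= (51673/10000) -> 0 < - (g0p a x).
Proof.
intros Ha Hx.
assert (Ca : (529/800) - (43/800) <= a <= (529/800) + (43/800)) by lra.
destruct (cb _ _ _ Ca) as [s_a [Ea Ba]].
assert (Cx : (20669/4000) - (1/20000) <= x <= (20669/4000) + (1/20000)) by lra.
destruct (cb _ _ _ Cx) as [s_x [Ex Bx]].
assert (EQ : g0p a x = (-6109037640052369601700585199/104857600000000000000000000) + (-932830237484839669580113/19660800000000000000000)*s_x + (-41930071722550909477/3276800000000000000)*s_x^2 + (-574057007918211/409600000000000)*s_x^3 + (-64823418557/1228800000000)*s_x^4 + (-52311603927629920153595293/98304000000000000000000)*s_a + (-2741640634545212281697/6144000000000000000)*s_a*s_x + (-136432526063377013/1024000000000000)*s_a*s_x^2 + (-6531594679577/384000000000)*s_a*s_x^3 + (-303227533/384000000)*s_a*s_x^4 + (-100001868536688413643117/81920000000000000000)*s_a^2 + (-5420256597790766193/5120000000000000)*s_a^2*s_x + (-855837352493391/2560000000000)*s_a^2*s_x^2 + (-14669183913/320000000)*s_a^2*s_x^3 + (-739677/320000)*s_a^2*s_x^4 + (-21203357496990323391/51200000000000000)*s_a^3 + (-1367619137821739/3200000000000)*s_a^3*s_x + (-248108547093/1600000000)*s_a^3*s_x^2 + (-4801299/200000)*s_a^3*s_x^3 + (-271/200)*s_a^3*s_x^4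 + (182506300175568721/256000000000000)*s_a^4 + (8829953078309/16000000000)*s_a^4*s_x + (1281622683/8000000)*s_a^4*s_x^2 + (20669/1000)*s_a^4*s_x^3 + (1)*s_a^4*s_x^4) by (subst a x; unfold g0p; fixeq; field).
rewrite EQ.
pose proof (abs_le _ _ (abs_pow _ _ 1 Bx)) as M1.
pose proof (abs_le _ _ (abs_pow _ _ 2 Bx)) as M2.
pose proof (abs_le _ _ (abs_pow _ _ 3 Bx)) as M3.
pose proof (abs_le _ _ (abs_pow _ _ 4 Bx)) as M4.
pose proof (abs_le _ _ (abs_pow _ _ 1 Ba)) as M5.
pose proof (abs_le _ _ (abs_mul _ _ _ _ (abs_pow _ _ 1 Ba) (abs_pow _ _ 1 Bx))) as M6.
pose proof (abs_le _ _ (abs_mul _ _ _ _ (abs_pow _ _ 1 Ba) (abs_pow _ _ 2 Bx))) as M7.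
pose proof (abs_le _ _ (abs_mul _ _ _ _ (abs_pow _ _ 1 Ba) (abs_pow _ _ 3 Bx))) as M8.
pose proof (abs_le _ _ (abs_mul _ _ _ _ (abs_pow _ _ 1 Ba) (abs_pow _ _ 4 Bx))) as M9.
pose proof (abs_le _ _ (abs_pow _ _ 2 Ba)) as M10.
pose proof (abs_le _ _ (abs_mul _ _ _ _ (abs_pow _ _ 2 Ba) (abs_pow _ _ 1 Bx))) as M11.
pose proof (abs_le _ _ (abs_mul _ _ _ _ (abs_pow _ _ 2 Ba) (abs_pow _ _ 2 Bx))) as M12.
pose proof (abs_le _ _ (abs_mul _ _ _ _ (abs_pow _ _ 2 Ba) (abs_pow _ _ 3 Bx))) as M13.
pose proof (abs_le _ _ (abs_mul _ _ _ _ (abs_pow _ _ 2 Ba) (abs_pow _ _ 4 Bx))) as M14.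
pose proof (abs_le _ _ (abs_pow _ _ 3 Ba)) as M15.
pose proof (abs_le _ _ (abs_mul _ _ _ _ (abs_pow _ _ 3 Ba) (abs_pow _ _ 1 Bx))) as M16.
pose proof (abs_le _ _ (abs_mul _ _ _ _ (abs_pow _ _ 3 Ba) (abs_pow _ _ 2 Bx))) as M17.
pose proof (abs_le _ _ (abs_mul _ _ _ _ (abs_pow _ _ 3 Ba) (abs_pow _ _ 3 Bx))) as M18.
pose proof (abs_le _ _ (abs_mul _ _ _ _ (abs_pow _ _ 3 Ba) (abs_pow _ _ 4 Bx))) as M19.
pose proof (abs_le _ _ (abs_pow _ _ 4 Ba)) as M20.
pose proof (abs_le _ _ (abs_mul _ _ _ _ (abs_pow _ _ 4 Ba) (abs_pow _ _ 1 Bx))) as M21.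
pose proof (abs_le _ _ (abs_mul _ _ _ _ (abs_pow _ _ 4 Ba) (abs_pow _ _ 2 Bx))) as M22.
pose proof (abs_le _ _ (abs_mul _ _ _ _ (abs_pow _ _ 4 Ba) (abs_pow _ _ 3 Bx))) as M23.
pose proof (abs_le _ _ (abs_mul _ _ _ _ (abs_pow _ _ 4 Ba) (abs_pow _ _ 4 Bx))) as M24.
lra.
Qed.

Lemma g0_R5_l_l (a x : R) : (1/2) <= a <= (143/200) -> (6459/1250) <= x <= (51673/10000) -> 0 < - (g0p a x).
Proof.
intros Ha Hx.
destruct (Rle_lt_dec a (243/400)).
- apply g0_R5_l_l_l; lra.
- apply g0_R5_l_l_r; lra.
Qed.

Lemma g0_R5_l_r (a x : R) : (143/200) <= a <= (93/100) -> (6459/1250) <= x <= (51673/10000) -> 0 < - (g0p a x).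
Proof.
intros Ha Hx.
assert (Ca : (329/400) - (43/400) <= a <= (329/400) + (43/400)) by lra.
destruct (cb _ _ _ Ca) as [s_a [Ea Ba]].
assert (Cx : (20669/4000) - (1/20000) <= x <= (20669/4000) + (1/20000)) by lra.
destruct (cb _ _ _ Cx) as [s_x [Ex Bx]].
assert (EQ : g0p a x = (-1160401474437808562267249999/6553600000000000000000000) + (-182287645784298908777713/1228800000000000000000)*s_x + (-8911798177913079877/204800000000000000)*s_x^2 + (-138825933485411/25600000000000)*s_x^3 + (-18830804957/76800000000)*s_x^4 + (-11626572487405288206385493/12288000000000000000000)*s_a + (-623405174888937077497/768000000000000000)*s_a*s_x + (-32058827776975213/128000000000000)*s_a*s_x^2 + (-1599318107377/48000000000)*s_a*s_x^3 + (-77953733/48000000)*s_a*s_x^4 + (-26825501303923501672317/20480000000000000000)*s_a^2 + (-1509494015734092993/1280000000000000)*s_a^2*s_x + (-245972729684991/640000000000)*s_a^2*s_x^2 + (-4338382713/80000000)*s_a^2*s_x^3 + (-224877/80000)*s_a^2*s_x^4 + (1169977612829020809/25600000000000000)*s_a^3 + (-114277595359939/1600000000000)*s_a^3*s_x + (-41389610493/800000000)*s_a^3*s_x^2 + (-1067499/100000)*s_a^3*s_x^3 + (-71/100)*s_a^3*s_x^4 + (182506300175568721/256000000000000)*s_a^4 + (8829953078309/16000000000)*s_a^4*s_x + (1281622683/8000000)*s_a^4*s_x^2 + (20669/1000)*s_a^4*s_x^3 + (1)*s_a^4*s_x^4) by (subst a x; unfold g0p; fixeq; field).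
rewrite EQ.
pose proof (abs_le _ _ (abs_pow _ _ 1 Bx)) as M1.
pose proof (abs_le _ _ (abs_pow _ _ 2 Bx)) as M2.
pose proof (abs_le _ _ (abs_pow _ _ 3 Bx)) as M3.
pose proof (abs_le _ _ (abs_pow _ _ 4 Bx)) as M4.
pose proof (abs_le _ _ (abs_pow _ _ 1 Ba)) as M5.
pose proof (abs_le _ _ (abs_mul _ _ _ _ (abs_pow _ _ 1 Ba) (abs_pow _ _ 1 Bx))) as M6.
pose proof (abs_le _ _ (abs_mul _ _ _ _ (abs_pow _ _ 1 Ba) (abs_pow _ _ 2 Bx))) as M7.
pose proof (abs_le _ _ (abs_mul _ _ _ _ (abs_pow _ _ 1 Ba) (abs_pow _ _ 3 Bx))) as M8.
pose proof (abs_le _ _ (abs_mul _ _ _ _ (abs_pow _ _ 1 Ba) (abs_pow _ _ 4 Bx))) as M9.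
pose proof (abs_le _ _ (abs_pow _ _ 2 Ba)) as M10.
pose proof (abs_le _ _ (abs_mul _ _ _ _ (abs_pow _ _ 2 Ba) (abs_pow _ _ 1 Bx))) as M11.
pose proof (abs_le _ _ (abs_mul _ _ _ _ (abs_pow _ _ 2 Ba) (abs_pow _ _ 2 Bx))) as M12.
pose proof (abs_le _ _ (abs_mul _ _ _ _ (abs_pow _ _ 2 Ba) (abs_pow _ _ 3 Bx))) as M13.
pose proof (abs_le _ _ (abs_mul _ _ _ _ (abs_pow _ _ 2 Ba) (abs_pow _ _ 4 Bx))) as M14.
pose proof (abs_le _ _ (abs_pow _ _ 3 Ba)) as M15.
pose proof (abs_le _ _ (abs_mul _ _ _ _ (abs_pow _ _ 3 Ba) (abs_pow _ _ 1 Bx))) as M16.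
pose proof (abs_le _ _ (abs_mul _ _ _ _ (abs_pow _ _ 3 Ba) (abs_pow _ _ 2 Bx))) as M17.
pose proof (abs_le _ _ (abs_mul _ _ _ _ (abs_pow _ _ 3 Ba) (abs_pow _ _ 3 Bx))) as M18.
pose proof (abs_le _ _ (abs_mul _ _ _ _ (abs_pow _ _ 3 Ba) (abs_pow _ _ 4 Bx))) as M19.
pose proof (abs_le _ _ (abs_pow _ _ 4 Ba)) as M20.
pose proof (abs_le _ _ (abs_mul _ _ _ _ (abs_pow _ _ 4 Ba) (abs_pow _ _ 1 Bx))) as M21.
pose proof (abs_le _ _ (abs_mul _ _ _ _ (abs_pow _ _ 4 Ba) (abs_pow _ _ 2 Bx))) as M22.
pose proof (abs_le _ _ (abs_mul _ _ _ _ (abs_pow _ _ 4 Ba) (abs_pow _ _ 3 Bx))) as M23.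
pose proof (abs_le _ _ (abs_mul _ _ _ _ (abs_pow _ _ 4 Ba) (abs_pow _ _ 4 Bx))) as M24.
lra.
Qed.

Lemma g0_R5_l (a x : R) : (1/2) <= a <= (93/100) -> (6459/1250) <= x <= (51673/10000) -> 0 < - (g0p a x).
Proof.
intros Ha Hx.
destruct (Rle_lt_dec a (143/200)).
- apply g0_R5_l_l; lra.
- apply g0_R5_l_r; lra.
Qed.

Lemma g0_R5_r (a x : R) : (93/100) <= a <= (34/25) -> (6459/1250) <= x <= (51673/10000) -> 0 < - (g0p a x).
Proof.
intros Ha Hx.
assert (Ca : (229/200) - (43/200) <= a <= (229/200) + (43/200)) by lra.
destruct (cb _ _ _ Ca) as [s_a [Ea Ba]].
assert (Cx : (20669/4000) - (1/20000) <= x <= (20669/4000) + (1/20000)) by lra.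
destruct (cb _ _ _ Cx) as [s_x [Ex Bx]].
assert (EQ : g0p a x = (-249524487121037846811562399/409600000000000000000000) + (-40643114304263989636513/76800000000000000000)*s_x + (-2102569346294705077/12800000000000000)*s_x^2 + (-35108833489011/1600000000000)*s_x^3 + (-5156638157/4800000000)*s_x^4 + (-2582182789234389926210593/1536000000000000000000)*s_a + (-145978638840790945397/96000000000000000)*s_a*s_x + (-7888044764404313/16000000000000)*s_a*s_x^2 + (-413130091277/6000000000)*s_a*s_x^3 + (-21146833/6000000)*s_a*s_x^4 + (-4202169151982230576917/5120000000000000000)*s_a^2 + (-289281781753566393/320000000000000)*s_a^2*s_x + (-53506459750791/160000000000)*s_a^2*s_x^2 + (-1033192113/20000000)*s_a^2*s_x^3 + (-57477/20000)*s_a^2*s_x^4 + (12356645167738692909/12800000000000000)*s_a^3 + (512393175870961/800000000000)*s_a^3*s_x + (61969857807/400000000)*s_a^3*s_x^2 + (799401/50000)*s_a^3*s_x^3 + (29/50)*s_a^3*s_x^4 + (182506300175568721/256000000000000)*s_a^4 + (8829953078309/16000000000)*s_a^4*s_x + (1281622683/8000000)*s_a^4*s_x^2 + (20669/1000)*s_a^4*s_x^3 + (1)*s_a^4*s_x^4) by (subst a x; unfold g0p; fixeq; field).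
rewrite EQ.
pose proof (abs_le _ _ (abs_pow _ _ 1 Bx)) as M1.
pose proof (abs_le _ _ (abs_pow _ _ 2 Bx)) as M2.
pose proof (abs_le _ _ (abs_pow _ _ 3 Bx)) as M3.
pose proof (abs_le _ _ (abs_pow _ _ 4 Bx)) as M4.
pose proof (abs_le _ _ (abs_pow _ _ 1 Ba)) as M5.
pose proof (abs_le _ _ (abs_mul _ _ _ _ (abs_pow _ _ 1 Ba) (abs_pow _ _ 1 Bx))) as M6.
pose proof (abs_le _ _ (abs_mul _ _ _ _ (abs_pow _ _ 1 Ba) (abs_pow _ _ 2 Bx))) as M7.
pose proof (abs_le _ _ (abs_mul _ _ _ _ (abs_pow _ _ 1 Ba) (abs_pow _ _ 3 Bx))) as M8.
pose proof (abs_le _ _ (abs_mul _ _ _ _ (abs_pow _ _ 1 Ba) (abs_pow _ _ 4 Bx))) as M9.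
pose proof (abs_le _ _ (abs_pow _ _ 2 Ba)) as M10.
pose proof (abs_le _ _ (abs_mul _ _ _ _ (abs_pow _ _ 2 Ba) (abs_pow _ _ 1 Bx))) as M11.
pose proof (abs_le _ _ (abs_mul _ _ _ _ (abs_pow _ _ 2 Ba) (abs_pow _ _ 2 Bx))) as M12.
pose proof (abs_le _ _ (abs_mul _ _ _ _ (abs_pow _ _ 2 Ba) (abs_pow _ _ 3 Bx))) as M13.
pose proof (abs_le _ _ (abs_mul _ _ _ _ (abs_pow _ _ 2 Ba) (abs_pow _ _ 4 Bx))) as M14.
pose proof (abs_le _ _ (abs_pow _ _ 3 Ba)) as M15.
pose proof (abs_le _ _ (abs_mul _ _ _ _ (abs_pow _ _ 3 Ba) (abs_pow _ _ 1 Bx))) as M16.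
pose proof (abs_le _ _ (abs_mul _ _ _ _ (abs_pow _ _ 3 Ba) (abs_pow _ _ 2 Bx))) as M17.
pose proof (abs_le _ _ (abs_mul _ _ _ _ (abs_pow _ _ 3 Ba) (abs_pow _ _ 3 Bx))) as M18.
pose proof (abs_le _ _ (abs_mul _ _ _ _ (abs_pow _ _ 3 Ba) (abs_pow _ _ 4 Bx))) as M19.
pose proof (abs_le _ _ (abs_pow _ _ 4 Ba)) as M20.
pose proof (abs_le _ _ (abs_mul _ _ _ _ (abs_pow _ _ 4 Ba) (abs_pow _ _ 1 Bx))) as M21.
pose proof (abs_le _ _ (abs_mul _ _ _ _ (abs_pow _ _ 4 Ba) (abs_pow _ _ 2 Bx))) as M22.
pose proof (abs_le _ _ (abs_mul _ _ _ _ (abs_pow _ _ 4 Ba) (abs_pow _ _ 3 Bx))) as M23.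
pose proof (abs_le _ _ (abs_mul _ _ _ _ (abs_pow _ _ 4 Ba) (abs_pow _ _ 4 Bx))) as M24.
lra.
Qed.

Lemma g0_R5 (a x : R) : (1/2) <= a <= (34/25) -> (6459/1250) <= x <= (51673/10000) -> 0 < - (g0p a x).
Proof.
intros Ha Hx.
destruct (Rle_lt_dec a (93/100)).
- apply g0_R5_l; lra.
- apply g0_R5_r; lra.
Qed.

Lemma T5_R6 (a : R) : (34/25) <= a -> 0 < - (T5p a).
Proof.
intros Ha.
destruct (shift_lo _ _ Ha) as [s_a [Ea Ba]].
assert (EQ : T5p a = (-3596/3125) + (-16632/125)*s_a + (-1248/5)*s_a^2 + (-120)*s_a^3) by (subst a; unfold T5p; fixeq; field).
rewrite EQ.
pose proof (pow_lo _ 1 Ba) as M1.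
pose proof (pow_lo _ 2 Ba) as M2.
pose proof (pow_lo _ 3 Ba) as M3.
lra.
Qed.

Lemma T5_neg (t : R) : (0) <= t -> 0 < (T5p (0 - t)).
Proof.
intros Ht.
destruct (shift_lo _ _ Ht) as [s_t [Et Bt]].
assert (EQ : T5p (0 - t) = (20) + (120)*s_t + (240)*s_t^2 + (120)*s_t^3) by (subst t; unfold T5p; fixeq; field).
rewrite EQ.
pose proof (pow_lo _ 1 Bt) as M1.
pose proof (pow_lo _ 2 Bt) as M2.
pose proof (pow_lo _ 3 Bt) as M3.
lra.
Qed.

Definition T2p (a u : R) : R :=
  (5/6) + (-2)*u + (3/2)*u^2 + (-1/3)*u^3 + (-10)*a + (26)*a*u + (-21)*a*u^2 + (5)*a*u^3 + (30)*a^2 + (-84)*a^2*u + (75)*a^2*u^2 + (-20)*a^2*u^3 + (-20)*a^3 + (60)*a^3*u + (-60)*a^3*u^2 + (20)*a^3*u^3.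

Lemma T2_pos_l (a u : R) : (971/10000) <= a <= (243/2500) -> (1) <= u <= (251/200) -> 0 < (T2p a u).
Proof.
intros Ha Hu.
assert (Ca : (1943/20000) - (1/20000) <= a <= (1943/20000) + (1/20000)) by lra.
destruct (cb _ _ _ Ca) as [s_a [Ea Ba]].
assert (Cu : (451/400) - (51/400) <= u <= (451/400) + (51/400)) by lra.
destruct (cb _ _ _ Cu) as [s_u [Eu Bu]].
assert (EQ : T2p a u = (132815913180577357/25600000000000000000) + (-1692041616318979/64000000000000000)*s_u + (8285434307471/160000000000000)*s_u^2 + (-21609013579/1200000000000)*s_u^3 + (216017311945297/1280000000000000)*s_a + (-1724982356159/3200000000000)*s_a*s_u + (-19542320709/8000000000)*s_a*s_u^2 + (33605747/20000000)*s_a*s_u^3 + (126686202679/64000000000)*s_a^2 + (1461423687/160000000)*s_a^2*s_u + (3831837/400000)*s_a^2*s_u^2 + (-14171/1000)*s_a^2*s_u^3 + (132651/3200000)*s_a^3 + (7803/8000)*s_a^3*s_u + (153/20)*s_a^3*s_u^2 + (20)*s_a^3*s_u^3) by (subst a u; unfold T2p; fixeq; field).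
rewrite EQ.
pose proof (abs_le _ _ (abs_pow _ _ 1 Bu)) as M1.
pose proof (abs_le _ _ (abs_pow _ _ 2 Bu)) as M2.
pose proof (abs_le _ _ (abs_pow _ _ 3 Bu)) as M3.
pose proof (abs_le _ _ (abs_pow _ _ 1 Ba)) as M4.
pose proof (abs_le _ _ (abs_mul _ _ _ _ (abs_pow _ _ 1 Ba) (abs_pow _ _ 1 Bu))) as M5.
pose proof (abs_le _ _ (abs_mul _ _ _ _ (abs_pow _ _ 1 Ba) (abs_pow _ _ 2 Bu))) as M6.
pose proof (abs_le _ _ (abs_mul _ _ _ _ (abs_pow _ _ 1 Ba) (abs_pow _ _ 3 Bu))) as M7.
pose proof (abs_le _ _ (abs_pow _ _ 2 Ba)) as M8.
pose proof (abs_le _ _ (abs_mul _ _ _ _ (abs_pow _ _ 2 Ba) (abs_pow _ _ 1 Bu))) as M9.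
pose proof (abs_le _ _ (abs_mul _ _ _ _ (abs_pow _ _ 2 Ba) (abs_pow _ _ 2 Bu))) as M10.
pose proof (abs_le _ _ (abs_mul _ _ _ _ (abs_pow _ _ 2 Ba) (abs_pow _ _ 3 Bu))) as M11.
pose proof (abs_le _ _ (abs_pow _ _ 3 Ba)) as M12.
pose proof (abs_le _ _ (abs_mul _ _ _ _ (abs_pow _ _ 3 Ba) (abs_pow _ _ 1 Bu))) as M13.
pose proof (abs_le _ _ (abs_mul _ _ _ _ (abs_pow _ _ 3 Ba) (abs_pow _ _ 2 Bu))) as M14.
pose proof (abs_le _ _ (abs_mul _ _ _ _ (abs_pow _ _ 3 Ba) (abs_pow _ _ 3 Bu))) as M15.
lra.
Qed.

Lemma T2_pos_r (a u : R) : (971/10000) <= a <= (243/2500) -> (251/200) <= u <= (151/100) -> 0 < (T2p a u).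
Proof.
intros Ha Hu.
assert (Ca : (1943/20000) - (1/20000) <= a <= (1943/20000) + (1/20000)) by lra.
destruct (cb _ _ _ Ca) as [s_a [Ea Ba]].
assert (Cu : (553/400) - (51/400) <= u <= (553/400) + (51/400)) by lra.
destruct (cb _ _ _ Cu) as [s_u [Eu Bu]].
assert (EQ : T2p a u = (38785440823588639/25600000000000000000) + (-226633194870811/64000000000000000)*s_u + (6081314922413/160000000000000)*s_u^2 + (-21609013579/1200000000000)*s_u^3 + (-127586505476981/1280000000000000)*s_a + (-4662713205431/3200000000000)*s_a*s_u + (-9258962127/8000000000)*s_a*s_u^2 + (33605747/20000000)*s_a*s_u^3 + (300579472333/64000000000)*s_a^2 + (1800813183/160000000)*s_a^2*s_u + (-504489/400000)*s_a^2*s_u^2 + (-14171/1000)*s_a^2*s_u^3 + (3581577/3200000)*s_a^3 + (70227/8000)*s_a^3*s_u + (459/20)*s_a^3*s_u^2 + (20)*s_a^3*s_u^3) by (subst a u; unfold T2p; fixeq; field).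
rewrite EQ.
pose proof (abs_le _ _ (abs_pow _ _ 1 Bu)) as M1.
pose proof (abs_le _ _ (abs_pow _ _ 2 Bu)) as M2.
pose proof (abs_le _ _ (abs_pow _ _ 3 Bu)) as M3.
pose proof (abs_le _ _ (abs_pow _ _ 1 Ba)) as M4.
pose proof (abs_le _ _ (abs_mul _ _ _ _ (abs_pow _ _ 1 Ba) (abs_pow _ _ 1 Bu))) as M5.
pose proof (abs_le _ _ (abs_mul _ _ _ _ (abs_pow _ _ 1 Ba) (abs_pow _ _ 2 Bu))) as M6.
pose proof (abs_le _ _ (abs_mul _ _ _ _ (abs_pow _ _ 1 Ba) (abs_pow _ _ 3 Bu))) as M7.
pose proof (abs_le _ _ (abs_pow _ _ 2 Ba)) as M8.
pose proof (abs_le _ _ (abs_mul _ _ _ _ (abs_pow _ _ 2 Ba) (abs_pow _ _ 1 Bu))) as M9.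
pose proof (abs_le _ _ (abs_mul _ _ _ _ (abs_pow _ _ 2 Ba) (abs_pow _ _ 2 Bu))) as M10.
pose proof (abs_le _ _ (abs_mul _ _ _ _ (abs_pow _ _ 2 Ba) (abs_pow _ _ 3 Bu))) as M11.
pose proof (abs_le _ _ (abs_pow _ _ 3 Ba)) as M12.
pose proof (abs_le _ _ (abs_mul _ _ _ _ (abs_pow _ _ 3 Ba) (abs_pow _ _ 1 Bu))) as M13.
pose proof (abs_le _ _ (abs_mul _ _ _ _ (abs_pow _ _ 3 Ba) (abs_pow _ _ 2 Bu))) as M14.
pose proof (abs_le _ _ (abs_mul _ _ _ _ (abs_pow _ _ 3 Ba) (abs_pow _ _ 3 Bu))) as M15.
lra.
Qed.

Lemma T2_pos (a u : R) : (971/10000) <= a <= (243/2500) -> (1) <= u <= (151/100) -> 0 < (T2p a u).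
Proof.
intros Ha Hu.
destruct (Rle_lt_dec u (251/200)).
- apply T2_pos_l; lra.
- apply T2_pos_r; lra.
Qed.

Definition c0p (a u : R) : R :=
  (5/6) + (-5/3)*u + (1)*u^2 + (-1/6)*u^3 + (-10)*a + (65/3)*a*u + (-14)*a*u^2 + (5/2)*a*u^3 + (30)*a^2 + (-70)*a^2*u + (50)*a^2*u^2 + (-10)*a^2*u^3 + (-20)*a^3 + (50)*a^3*u + (-40)*a^3*u^2 + (10)*a^3*u^3.

Lemma c0_pos_l (a u : R) : (971/10000) <= a <= (243/2500) -> (1) <= u <= (251/200) -> 0 < (c0p a u).
Proof.
intros Ha Hu.
assert (Ca : (1943/20000) - (1/20000) <= a <= (1943/20000) + (1/20000)) by lra.
destruct (cb _ _ _ Ca) as [s_a [Ea Ba]].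
assert (Cu : (451/400) - (51/400) <= u <= (451/400) + (51/400)) by lra.
destruct (cb _ _ _ Cu) as [s_u [Eu Bu]].
assert (EQ : c0p a u = (1560006248043323671/153600000000000000000) + (-5311223275644579/128000000000000000)*s_u + (14295800784671/320000000000000)*s_u^2 + (-21609013579/2400000000000)*s_u^3 + (2074070914299491/7680000000000000)*s_a + (9002261498723/19200000000000)*s_a*s_u + (-41212619509/16000000000)*s_a*s_u^2 + (33605747/40000000)*s_a*s_u^3 + (33671711079/128000000000)*s_a^2 + (1283600487/320000000)*s_a^2*s_u + (11500237/800000)*s_a^2*s_u^2 + (-14171/2000)*s_a^2*s_u^3 + (-907749/6400000)*s_a^3 + (-32997/16000)*s_a^3*s_u + (-247/40)*s_a^3*s_u^2 + (10)*s_a^3*s_u^3) by (subst a u; unfold c0p; fixeq; field).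
rewrite EQ.
pose proof (abs_le _ _ (abs_pow _ _ 1 Bu)) as M1.
pose proof (abs_le _ _ (abs_pow _ _ 2 Bu)) as M2.
pose proof (abs_le _ _ (abs_pow _ _ 3 Bu)) as M3.
pose proof (abs_le _ _ (abs_pow _ _ 1 Ba)) as M4.
pose proof (abs_le _ _ (abs_mul _ _ _ _ (abs_pow _ _ 1 Ba) (abs_pow _ _ 1 Bu))) as M5.
pose proof (abs_le _ _ (abs_mul _ _ _ _ (abs_pow _ _ 1 Ba) (abs_pow _ _ 2 Bu))) as M6.
pose proof (abs_le _ _ (abs_mul _ _ _ _ (abs_pow _ _ 1 Ba) (abs_pow _ _ 3 Bu))) as M7.
pose proof (abs_le _ _ (abs_pow _ _ 2 Ba)) as M8.
pose proof (abs_le _ _ (abs_mul _ _ _ _ (abs_pow _ _ 2 Ba) (abs_pow _ _ 1 Bu))) as M9.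
pose proof (abs_le _ _ (abs_mul _ _ _ _ (abs_pow _ _ 2 Ba) (abs_pow _ _ 2 Bu))) as M10.
pose proof (abs_le _ _ (abs_mul _ _ _ _ (abs_pow _ _ 2 Ba) (abs_pow _ _ 3 Bu))) as M11.
pose proof (abs_le _ _ (abs_pow _ _ 3 Ba)) as M12.
pose proof (abs_le _ _ (abs_mul _ _ _ _ (abs_pow _ _ 3 Ba) (abs_pow _ _ 1 Bu))) as M13.
pose proof (abs_le _ _ (abs_mul _ _ _ _ (abs_pow _ _ 3 Ba) (abs_pow _ _ 2 Bu))) as M14.
pose proof (abs_le _ _ (abs_mul _ _ _ _ (abs_pow _ _ 3 Ba) (abs_pow _ _ 3 Bu))) as M15.
lra.
Qed.

Lemma c0_pos_r_l (a u : R) : (971/10000) <= a <= (243/2500) -> (251/200) <= u <= (553/400) -> 0 < (c0p a u).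
Proof.
intros Ha Hu.
assert (Ca : (1943/20000) - (1/20000) <= a <= (1943/20000) + (1/20000)) by lra.
destruct (cb _ _ _ Ca) as [s_a [Ea Ba]].
assert (Cu : (211/160) - (51/800) <= u <= (211/160) + (51/800)) by lra.
destruct (cb _ _ _ Cu) as [s_u [Eu Bu]].
assert (EQ : c0p a u = (37273216861168711/9830400000000000000) + (-520068336849219/20480000000000000)*s_u + (5057084498351/128000000000000)*s_u^2 + (-21609013579/2400000000000)*s_u^3 + (133396470421331/491520000000000)*s_a + (-1303089241597/3072000000000)*s_a*s_u + (-13400040229/6400000000)*s_a*s_u^2 + (33605747/40000000)*s_a*s_u^3 + (12340806039/8192000000)*s_a^2 + (447094407/51200000)*s_a^2*s_u + (3299197/320000)*s_a^2*s_u^2 + (-14171/2000)*s_a^2*s_u^3 + (-283509/409600)*s_a^3 + (-8517/2560)*s_a^3*s_u + (-7/16)*s_a^3*s_u^2 + (10)*s_a^3*s_u^3) by (subst a u; unfold c0p; fixeq; field).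
rewrite EQ.
pose proof (abs_le _ _ (abs_pow _ _ 1 Bu)) as M1.
pose proof (abs_le _ _ (abs_pow _ _ 2 Bu)) as M2.
pose proof (abs_le _ _ (abs_pow _ _ 3 Bu)) as M3.
pose proof (abs_le _ _ (abs_pow _ _ 1 Ba)) as M4.
pose proof (abs_le _ _ (abs_mul _ _ _ _ (abs_pow _ _ 1 Ba) (abs_pow _ _ 1 Bu))) as M5.
pose proof (abs_le _ _ (abs_mul _ _ _ _ (abs_pow _ _ 1 Ba) (abs_pow _ _ 2 Bu))) as M6.
pose proof (abs_le _ _ (abs_mul _ _ _ _ (abs_pow _ _ 1 Ba) (abs_pow _ _ 3 Bu))) as M7.
pose proof (abs_le _ _ (abs_pow _ _ 2 Ba)) as M8.
pose proof (abs_le _ _ (abs_mul _ _ _ _ (abs_pow _ _ 2 Ba) (abs_pow _ _ 1 Bu))) as M9.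
pose proof (abs_le _ _ (abs_mul _ _ _ _ (abs_pow _ _ 2 Ba) (abs_pow _ _ 2 Bu))) as M10.
pose proof (abs_le _ _ (abs_mul _ _ _ _ (abs_pow _ _ 2 Ba) (abs_pow _ _ 3 Bu))) as M11.
pose proof (abs_le _ _ (abs_pow _ _ 3 Ba)) as M12.
pose proof (abs_le _ _ (abs_mul _ _ _ _ (abs_pow _ _ 3 Ba) (abs_pow _ _ 1 Bu))) as M13.
pose proof (abs_le _ _ (abs_mul _ _ _ _ (abs_pow _ _ 3 Ba) (abs_pow _ _ 2 Bu))) as M14.
pose proof (abs_le _ _ (abs_mul _ _ _ _ (abs_pow _ _ 3 Ba) (abs_pow _ _ 3 Bu))) as M15.
lra.
Qed.

Lemma c0_pos_r_r (a u : R) : (971/10000) <= a <= (243/2500) -> (553/400) <= u <= (151/100) -> 0 < (c0p a u).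
Proof.
intros Ha Hu.
assert (Ca : (1943/20000) - (1/20000) <= a <= (1943/20000) + (1/20000)) by lra.
destruct (cb _ _ _ Ca) as [s_a [Ea Ba]].
assert (Cu : (1157/800) - (51/800) <= u <= (1157/800) + (51/800)) by lra.
destruct (cb _ _ _ Cu) as [s_u [Eu Bu]].
assert (EQ : c0p a u = (1446906279480077153/1228800000000000000000) + (-8068302410188371/512000000000000000)*s_u + (23081303106697/640000000000000)*s_u^2 + (-21609013579/2400000000000)*s_u^3 + (11367459021143413/61440000000000000)*s_a + (-70434646414573/76800000000000)*s_a*s_u + (-56716842563/32000000000)*s_a*s_u^2 + (33605747/40000000)*s_a*s_u^3 + (2839277342097/1024000000000)*s_a^2 + (14100235863/1280000000)*s_a^2*s_u + (12159659/1600000)*s_a^2*s_u^2 + (-14171/2000)*s_a^2*s_u^3 + (-56459907/51200000)*s_a^3 + (-188853/64000)*s_a^3*s_u + (271/80)*s_a^3*s_u^2 + (10)*s_a^3*s_u^3) by (subst a u; unfold c0p; fixeq; field).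
rewrite EQ.
pose proof (abs_le _ _ (abs_pow _ _ 1 Bu)) as M1.
pose proof (abs_le _ _ (abs_pow _ _ 2 Bu)) as M2.
pose proof (abs_le _ _ (abs_pow _ _ 3 Bu)) as M3.
pose proof (abs_le _ _ (abs_pow _ _ 1 Ba)) as M4.
pose proof (abs_le _ _ (abs_mul _ _ _ _ (abs_pow _ _ 1 Ba) (abs_pow _ _ 1 Bu))) as M5.
pose proof (abs_le _ _ (abs_mul _ _ _ _ (abs_pow _ _ 1 Ba) (abs_pow _ _ 2 Bu))) as M6.
pose proof (abs_le _ _ (abs_mul _ _ _ _ (abs_pow _ _ 1 Ba) (abs_pow _ _ 3 Bu))) as M7.
pose proof (abs_le _ _ (abs_pow _ _ 2 Ba)) as M8.
pose proof (abs_le _ _ (abs_mul _ _ _ _ (abs_pow _ _ 2 Ba) (abs_pow _ _ 1 Bu))) as M9.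
pose proof (abs_le _ _ (abs_mul _ _ _ _ (abs_pow _ _ 2 Ba) (abs_pow _ _ 2 Bu))) as M10.
pose proof (abs_le _ _ (abs_mul _ _ _ _ (abs_pow _ _ 2 Ba) (abs_pow _ _ 3 Bu))) as M11.
pose proof (abs_le _ _ (abs_pow _ _ 3 Ba)) as M12.
pose proof (abs_le _ _ (abs_mul _ _ _ _ (abs_pow _ _ 3 Ba) (abs_pow _ _ 1 Bu))) as M13.
pose proof (abs_le _ _ (abs_mul _ _ _ _ (abs_pow _ _ 3 Ba) (abs_pow _ _ 2 Bu))) as M14.
pose proof (abs_le _ _ (abs_mul _ _ _ _ (abs_pow _ _ 3 Ba) (abs_pow _ _ 3 Bu))) as M15.
lra.
Qed.

Lemma c0_pos_r (a u : R) : (971/10000) <= a <= (243/2500) -> (251/200) <= u <= (151/100) -> 0 < (c0p a u).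
Proof.
intros Ha Hu.
destruct (Rle_lt_dec u (553/400)).
- apply c0_pos_r_l; lra.
- apply c0_pos_r_r; lra.
Qed.

Lemma c0_pos (a u : R) : (971/10000) <= a <= (243/2500) -> (1) <= u <= (151/100) -> 0 < (c0p a u).
Proof.
intros Ha Hu.
destruct (Rle_lt_dec u (251/200)).
- apply c0_pos_l; lra.
- apply c0_pos_r; lra.
Qed.

Definition c1p (a u : R) : R :=
  (37/72) + (-3/4)*u + (1/4)*u^2 + (-37/6)*a + (39/4)*a*u + (-7/2)*a*u^2 + (37/2)*a^2 + (-63/2)*a^2*u + (25/2)*a^2*u^2 + (-37/3)*a^3 + (45/2)*a^3*u + (-10)*a^3*u^2.

Lemma c1_pos_l (a u : R) : (971/10000) <= a <= (243/2500) -> (1) <= u <= (251/200) -> 0 < (c1p a u).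
Proof.
intros Ha Hu.
assert (Ca : (1943/20000) - (1/20000) <= a <= (1943/20000) + (1/20000)) by lra.
destruct (cb _ _ _ Ca) as [s_a [Ea Ba]].
assert (Cu : (451/400) - (51/400) <= u <= (451/400) + (51/400)) by lra.
destruct (cb _ _ _ Cu) as [s_u [Eu Bu]].
assert (EQ : c1p a u = (14264584884571237/1152000000000000000) + (-5936560233807/160000000000000)*s_u + (15025916193/800000000000)*s_u^2 + (3216174951259/19200000000000)*s_a + (9699724253/8000000000)*s_a*s_u + (-54175747/40000000)*s_a*s_u^2 + (-330064329/320000000)*s_a^2 + (-1330829/400000)*s_a^2*s_u + (19171/2000)*s_a^2*s_u^2 + (15497/48000)*s_a^3 + (-1/20)*s_a^3*s_u + (-10)*s_a^3*s_u^2) by (subst a u; unfold c1p; fixeq; field).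
rewrite EQ.
pose proof (abs_le _ _ (abs_pow _ _ 1 Bu)) as M1.
pose proof (abs_le _ _ (abs_pow _ _ 2 Bu)) as M2.
pose proof (abs_le _ _ (abs_pow _ _ 1 Ba)) as M3.
pose proof (abs_le _ _ (abs_mul _ _ _ _ (abs_pow _ _ 1 Ba) (abs_pow _ _ 1 Bu))) as M4.
pose proof (abs_le _ _ (abs_mul _ _ _ _ (abs_pow _ _ 1 Ba) (abs_pow _ _ 2 Bu))) as M5.
pose proof (abs_le _ _ (abs_pow _ _ 2 Ba)) as M6.
pose proof (abs_le _ _ (abs_mul _ _ _ _ (abs_pow _ _ 2 Ba) (abs_pow _ _ 1 Bu))) as M7.
pose proof (abs_le _ _ (abs_mul _ _ _ _ (abs_pow _ _ 2 Ba) (abs_pow _ _ 2 Bu))) as M8.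
pose proof (abs_le _ _ (abs_pow _ _ 3 Ba)) as M9.
pose proof (abs_le _ _ (abs_mul _ _ _ _ (abs_pow _ _ 3 Ba) (abs_pow _ _ 1 Bu))) as M10.
pose proof (abs_le _ _ (abs_mul _ _ _ _ (abs_pow _ _ 3 Ba) (abs_pow _ _ 2 Bu))) as M11.
lra.
Qed.

Lemma c1_pos_r (a u : R) : (971/10000) <= a <= (243/2500) -> (251/200) <= u <= (151/100) -> 0 < (c1p a u).
Proof.
intros Ha Hu.
assert (Ca : (1943/20000) - (1/20000) <= a <= (1943/20000) + (1/20000)) by lra.
destruct (cb _ _ _ Ca) as [s_a [Ea Ba]].
assert (Cu : (553/400) - (51/400) <= u <= (553/400) + (51/400)) by lra.
destruct (cb _ _ _ Cu) as [s_u [Eu Bu]].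
assert (EQ : c1p a u = (4772026983949333/1152000000000000000) + (-4403916782121/160000000000000)*s_u + (15025916193/800000000000)*s_u^2 + (7461472778731/19200000000000)*s_a + (4173798059/8000000000)*s_a*s_u + (-54175747/40000000)*s_a*s_u^2 + (-402098361/320000000)*s_a^2 + (624613/400000)*s_a^2*s_u + (19171/2000)*s_a^2*s_u^2 + (-16327/48000)*s_a^3 + (-103/20)*s_a^3*s_u + (-10)*s_a^3*s_u^2) by (subst a u; unfold c1p; fixeq; field).
rewrite EQ.
pose proof (abs_le _ _ (abs_pow _ _ 1 Bu)) as M1.
pose proof (abs_le _ _ (abs_pow _ _ 2 Bu)) as M2.
pose proof (abs_le _ _ (abs_pow _ _ 1 Ba)) as M3.
pose proof (abs_le _ _ (abs_mul _ _ _ _ (abs_pow _ _ 1 Ba) (abs_pow _ _ 1 Bu))) as M4.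
pose proof (abs_le _ _ (abs_mul _ _ _ _ (abs_pow _ _ 1 Ba) (abs_pow _ _ 2 Bu))) as M5.
pose proof (abs_le _ _ (abs_pow _ _ 2 Ba)) as M6.
pose proof (abs_le _ _ (abs_mul _ _ _ _ (abs_pow _ _ 2 Ba) (abs_pow _ _ 1 Bu))) as M7.
pose proof (abs_le _ _ (abs_mul _ _ _ _ (abs_pow _ _ 2 Ba) (abs_pow _ _ 2 Bu))) as M8.
pose proof (abs_le _ _ (abs_pow _ _ 3 Ba)) as M9.
pose proof (abs_le _ _ (abs_mul _ _ _ _ (abs_pow _ _ 3 Ba) (abs_pow _ _ 1 Bu))) as M10.
pose proof (abs_le _ _ (abs_mul _ _ _ _ (abs_pow _ _ 3 Ba) (abs_pow _ _ 2 Bu))) as M11.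
lra.
Qed.

Lemma c1_pos (a u : R) : (971/10000) <= a <= (243/2500) -> (1) <= u <= (151/100) -> 0 < (c1p a u).
Proof.
intros Ha Hu.
destruct (Rle_lt_dec u (251/200)).
- apply c1_pos_l; lra.
- apply c1_pos_r; lra.
Qed.

Definition c2p (a u : R) : R :=
  (5/48) + (-1/12)*u + (-5/4)*a + (13/12)*a*u + (15/4)*a^2 + (-7/2)*a^2*u + (-5/2)*a^3 + (5/2)*a^3*u.

Lemma c2_pos (a u : R) : (971/10000) <= a <= (243/2500) -> (1) <= u <= (151/100) -> 0 < (c2p a u).
Proof.
intros Ha Hu.
assert (Ca : (1943/20000) - (1/20000) <= a <= (1943/20000) + (1/20000)) by lra.
destruct (cb _ _ _ Ca) as [s_a [Ea Ba]].
assert (Cu : (251/200) - (51/200) <= u <= (251/200) + (51/200)) by lra.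
destruct (cb _ _ _ Cu) as [s_u [Eu Bu]].
assert (EQ : c2p a u = (9119794331471/1920000000000000) + (-28251663193/3200000000000)*s_u + (268415291/96000000000)*s_a + (227553241/480000000)*s_a*s_u + (-730721/1600000)*s_a^2 + (-22171/8000)*s_a^2*s_u + (51/80)*s_a^3 + (5/2)*s_a^3*s_u) by (subst a u; unfold c2p; fixeq; field).
rewrite EQ.
pose proof (abs_le _ _ (abs_pow _ _ 1 Bu)) as M1.
pose proof (abs_le _ _ (abs_pow _ _ 1 Ba)) as M2.
pose proof (abs_le _ _ (abs_mul _ _ _ _ (abs_pow _ _ 1 Ba) (abs_pow _ _ 1 Bu))) as M3.
pose proof (abs_le _ _ (abs_pow _ _ 2 Ba)) as M4.
pose proof (abs_le _ _ (abs_mul _ _ _ _ (abs_pow _ _ 2 Ba) (abs_pow _ _ 1 Bu))) as M5.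
pose proof (abs_le _ _ (abs_pow _ _ 3 Ba)) as M6.
pose proof (abs_le _ _ (abs_mul _ _ _ _ (abs_pow _ _ 3 Ba) (abs_pow _ _ 1 Bu))) as M7.
lra.
Qed.

Definition c3p (a u : R) : R :=
  (1/144) + (-1/12)*a + (1/4)*a^2 + (-1/6)*a^3.

Lemma c3_pos (a u : R) : (971/10000) <= a <= (243/2500) -> (1) <= u <= (151/100) -> 0 < (c3p a u).
Proof.
intros Ha Hu.
assert (Ca : (1943/20000) - (1/20000) <= a <= (1943/20000) + (1/20000)) by lra.
destruct (cb _ _ _ Ca) as [s_a [Ea Ba]].
assert (Cu : (251/200) - (51/200) <= u <= (251/200) + (51/200)) by lra.
destruct (cb _ _ _ Cu) as [s_u [Eu Bu]].
assert (EQ : c3p a u = (151966483579/144000000000000) + (-94745747/2400000000)*s_a + (8057/40000)*s_a^2 + (-1/6)*s_a^3) by (subst a u; unfold c3p; fixeq; field).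
rewrite EQ.
pose proof (abs_le _ _ (abs_pow _ _ 1 Ba)) as M1.
pose proof (abs_le _ _ (abs_pow _ _ 2 Ba)) as M2.
pose proof (abs_le _ _ (abs_pow _ _ 3 Ba)) as M3.
lra.
Qed.

Definition Tbigp (a u k : R) : R :=
  (1/24) + (11/144)*k + (1/24)*k^2 + (1/144)*k^3 + (-1/6)*u + (-1/4)*u*k + (-1/12)*u*k^2 + (1/4)*u^2 + (1/4)*u^2*k + (-1/6)*u^3 + (-1/2)*a + (-11/12)*a*k + (-1/2)*a*k^2 + (-1/12)*a*k^3 + (13/6)*a*u + (13/4)*a*u*k + (13/12)*a*u*k^2 + (-7/2)*a*u^2 + (-7/2)*a*u^2*k + (5/2)*a*u^3 + (3/2)*a^2 + (11/4)*a^2*k + (3/2)*a^2*k^2 + (1/4)*a^2*k^3 + (-7)*a^2*u + (-21/2)*a^2*u*k + (-7/2)*a^2*u*k^2 + (25/2)*a^2*u^2 + (25/2)*a^2*u^2*k + (-10)*a^2*u^3 + (-1)*a^3 + (-11/6)*a^3*k + (-1)*a^3*k^2 + (-1/6)*a^3*k^3 + (5)*a^3*u + (15/2)*a^3*u*k + (5/2)*a^3*u*k^2 + (-10)*a^3*u^2 + (-10)*a^3*u^2*k + (10)*a^3*u^3.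

Lemma Tbig_id a u s : Tbigp a u (3 + s) = c0p a u + c1p a u * s + c2p a u * s^2 + c3p a u * s^3.
Proof. unfold Tbigp, c0p, c1p, c2p, c3p. fixeq. field. Qed.



Lemma Tk0_g0 a x : Tk 0 a (1 + a*x) = a^4 * g0p a x.
Proof. unfold Tk, Bc, g0p. cbn [rf]. fixeq. field. Qed.
Lemma Tk1_g1 a x : Tk 1 a (1 + a*x) = a^3 * g1p a x.
Proof. unfold Tk, Bc, g1p. cbn [rf]. simpl INR. fixeq. field. Qed.
Lemma Tk2_T2 a u : Tk 2 a u = T2p a u.
Proof. unfold Tk, Bc, T2p. cbn [rf]. simpl INR. fixeq. field. Qed.
Lemma Tk5 a : Tk 5 a 1 = T5p a.
Proof. unfold Tk, Bc, T5p. cbn [rf]. simpl INR. fixeq. field. Qed.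
Lemma Tk7 a : Tk 7 a 1 = T7p a.
Proof. unfold Tk, Bc, T7p. cbn [rf]. simpl INR. fixeq. field. Qed.

Lemma rf0S k : rf 0 (S k) = 0.
Proof. induction k; simpl in *. ring. rewrite IHk. ring. Qed.
Lemma rf_pos j k : (0 < j)%nat -> 0 < rf j k.
Proof. intros Hj. induction k; simpl. lra. apply Rmult_lt_0_compat; auto. apply lt_0_INR. lia. Qed.
Lemma rf2 k : rf 2 k = rf 1 k * (INR k + 1).
Proof. induction k. simpl. fixeq. ring. cbn [rf]. rewrite IHk. rewrite !plus_INR, !S_INR, INR_0. fixeq. ring. Qed.
Lemma rf3 k : rf 3 k = rf 1 k * (INR k + 1) * (INR k + 2) / 2.
Proof. induction k. simpl. fixeq. field. cbn [rf]. rewrite IHk. rewrite !plus_INR, !S_INR, INR_0. fixeq. field. Qed.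
Lemma rf4 k : rf 4 k = rf 1 k * (INR k + 1) * (INR k + 2) * (INR k + 3) / 6.
Proof. induction k. simpl. fixeq. field. cbn [rf]. rewrite IHk. rewrite !plus_INR, !S_INR, INR_0. fixeq. field. Qed.

Lemma Tk_big k a u : (1 <= k)%nat -> Tk k a u = rf 1 k * Tbigp a u (INR k).
Proof.
intros Hk. destruct k as [|k]; [lia|].
unfold Tk. rewrite rf0S, rf2, rf3, rf4. unfold Bc, Tbigp. fixeq. field.
Qed.

Lemma D_neg0 a x : 0 < a -> 0 < x -> D a 0 (-x) = g0p a x / (1 + a*x)^4.
Proof.
intros Ha Hx. assert (Hu : 0 < 1 + a*x) by nra.
rewrite D_T by (try lra; nra). replace (1 - a * - x) with (1 + a*x) by ring.
rewrite Tk0_g0. simpl Nat.add. fixeq. field. split; lra.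
Qed.
Lemma D_neg1 a x : 0 < a -> 0 < x -> D a 1 (-x) = g1p a x / (1 + a*x)^5.
Proof.
intros Ha Hx. assert (Hu : 0 < 1 + a*x) by nra.
rewrite D_T by (try lra; nra). replace (1 - a * - x) with (1 + a*x) by ring.
rewrite Tk1_g1. simpl Nat.add. fixeq. field. split; lra.
Qed.
Lemma D_5_0 a : a <> 0 -> D a 5 0 = a * T5p a.
Proof.
intros Ha. rewrite D_T by (auto; rewrite Rmult_0_r; lra). replace (1 - a*0) with 1 by ring.
rewrite Tk5. simpl Nat.add. fixeq. field. auto.
Qed.
Lemma D_7_0 a : a <> 0 -> D a 7 0 = a^3 * T7p a.
Proof.
intros Ha. rewrite D_T by (auto; rewrite Rmult_0_r; lra). replace (1 - a*0) with 1 by ring.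
rewrite Tk7. simpl Nat.add. fixeq. field. auto.
Qed.

Lemma Tk_pos_astar a u k : 971/10000 <= a <= 972/10000 -> 1 <= u <= 151/100 -> (2 <= k)%nat ->
  0 < Tk k a u.
Proof.
intros Ha Hu Hk.
destruct (Nat.eq_dec k 2) as [->|Hk2].
{ rewrite Tk2_T2. apply T2_pos; lra. }
rewrite Tk_big by lia.
apply Rmult_lt_0_compat. apply rf_pos; lia.
assert (Hs : 3 <= INR k) by (replace 3 with (INR 3) by (simpl; ring); apply le_INR; lia).
replace (INR k) with (3 + (INR k - 3)) by ring.
rewrite Tbig_id. set (s := INR k - 3).
assert (0 <= s) by (unfold s; lra).
pose proof (c0_pos a u ltac:(lra) ltac:(lra)).
pose proof (c1_pos a u ltac:(lra) ltac:(lra)).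
pose proof (c2_pos a u ltac:(lra) ltac:(lra)).
pose proof (c3_pos a u ltac:(lra) ltac:(lra)).
assert (0 <= c1p a u * s) by (apply Rmult_le_pos; lra).
assert (0 <= c2p a u * s^2) by (apply Rmult_le_pos; [lra| apply pow_le; lra]).
assert (0 <= c3p a u * s^3) by (apply Rmult_le_pos; [lra| apply pow_le; lra]).
lra.
Qed.

Lemma D_pos_astar a x k : 971/10000 <= a <= 972/10000 -> 1 <= 1 - a*x <= 151/100 -> (2 <= k)%nat ->
  0 < D a k x.
Proof.
intros Ha Hu Hk.
rewrite D_T by lra.
apply Rmult_lt_0_compat; [|apply Tk_pos_astar; auto].
unfold Rdiv. apply Rmult_lt_0_compat. apply Rmult_lt_0_compat.
apply pow_lt; lra. apply Rinv_0_lt_compat, pow_lt; lra.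
apply Rinv_0_lt_compat, pow_lt; lra.
Qed.

Lemma descent a k l : a <> 0 -> l <= 0 ->
  (forall x, l <= x <= 0 -> 1 - a*x <> 0) ->
  (forall x, l <= x <= 0 -> 0 <= D a (S k) x) -> 0 <= D a k l ->
  forall x, l <= x <= 0 -> 0 <= D a k x.
Proof.
intros Ha Hl Hu Hd Hlv x Hx.
destruct (Req_dec x l) as [->|Hne]; auto.
assert (Hlt : l < x) by lra.
destruct (MVT_cor2 (D a k) (D a (S k)) l x Hlt) as [c [E Hc]].
{ intros c Hc. apply D_deriv; auto. apply Hu; lra. }
assert (0 <= D a (S k) c) by (apply Hd; lra).
assert (0 <= D a (S k) c * (x - l)) by (apply Rmult_le_pos; lra).
lra.
Qed.

Lemma lower_astar a x0 : 971/10000 <= a <= 972/10000 -> 5 <= x0 <= 517/100 ->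
  g0p a x0 = 0 -> g1p a x0 = 0 -> forall x, -x0 <= x <= 0 -> forall k, 0 <= D a k x.
Proof.
intros Ha Hx0 H0 H1.
assert (Hax : a * x0 <= 51/100) by nra.
assert (Hu : forall x, -x0 <= x <= 0 -> 1 <= 1 - a*x <= 151/100) by (intros x Hx; split; nra).
assert (H2 : forall x, -x0 <= x <= 0 -> forall k, (2 <= k)%nat -> 0 <= D a k x).
{ intros x Hx k Hk. left. apply D_pos_astar; auto. }
assert (Ha0 : a <> 0) by lra.
assert (Hu' : forall x, -x0 <= x <= 0 -> 1 - a*x <> 0) by (intros x Hx; specialize (Hu x Hx); lra).
assert (K1 : forall x, -x0 <= x <= 0 -> 0 <= D a 1 x).
{ apply descent; [exact Ha0 | lra | exact Hu' | intros x Hx; apply H2; auto | ].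
  rewrite D_neg1 by lra. rewrite H1. unfold Rdiv. rewrite Rmult_0_l. lra. }
assert (K0 : forall x, -x0 <= x <= 0 -> 0 <= D a 0 x).
{ apply descent; [exact Ha0 | lra | exact Hu' | exact K1 | ].
  rewrite D_neg0 by lra. rewrite H0. unfold Rdiv. rewrite Rmult_0_l. lra. }
intros x Hx k. destruct k as [|[|k]]; auto. apply H2; auto. lia.
Qed.

Lemma beyond_astar a x0 : 971/10000 <= a <= 972/10000 -> 5 <= x0 <= 517/100 ->
  g1p a x0 = 0 -> forall x, -x0 - 1/20 <= x < -x0 -> D a 1 x < 0.
Proof.
intros Ha Hx0 H1 x Hx.
assert (Hlt : x < -x0) by lra.
destruct (MVT_cor2 (D a 1) (D a 2) x (-x0) Hlt) as [c [E Hc]].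
{ intros c Hc. apply D_deriv; [lra|]. nra. }
assert (0 < D a 2 c) by (apply D_pos_astar; try lia; try lra; split; nra).
rewrite D_neg1 in E by lra. rewrite H1 in E. unfold Rdiv in E. rewrite Rmult_0_l in E.
assert (0 < D a 2 c * (-x0 - x)) by (apply Rmult_lt_0_compat; lra).
lra.
Qed.

Lemma pole_iff a y : is_pole 4 (psi4coef a) a y <-> 1 - a*y = 0.
Proof. split. intros [H _]; auto. intros H. split; auto. apply not_const. Qed.

Lemma am_of_D a x : a <> 0 -> 1 - a*x <> 0 -> (forall k, 0 <= D a k x) -> abs_mon_at 4 (psi4coef a) a x.
Proof.
intros Ha Hx Hk. split. apply nonpole_of; auto.
exists (D a). split; [|split].
- intros y Hy. apply D0_psi; auto.
- intros k y Hnp. apply D_deriv; auto. intro H. apply Hnp. apply pole_iff; auto.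
- exact Hk.
Qed.

Lemma D_of_am a x : a <> 0 -> 1 - a*x <> 0 -> abs_mon_at 4 (psi4coef a) a x -> forall k, 0 <= D a k x.
Proof.
intros Ha Hx [_ [d [H0 [Hd Hk]]]] k.
rewrite <- (d_form a Ha d H0 Hd k x Hx). apply Hk.
Qed.

Lemma fail_bound a p k : a <> 0 -> p <= 0 -> 1 - a*p <> 0 -> D a k p < 0 ->
  forall r, AM_set 4 (psi4coef a) a r -> r <= -p.
Proof.
intros Ha Hp Hu HD r [[Hr HAM]| ->]; [|lra].
destruct (Rle_lt_dec (-p) r) as [H|H]; [|lra].
exfalso. assert (Hin : - r <= p <= 0) by lra.
pose proof (D_of_am a p Ha Hu (HAM p Hin) k). lra.
Qed.

Lemma cont_neg a k x1 : a <> 0 -> 1 - a*x1 <> 0 -> D a k x1 < 0 ->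
  exists eta, 0 < eta /\ forall x, Rabs (x - x1) < eta -> D a k x < 0.
Proof.
intros Ha Hu HD.
assert (Hd := D_deriv a k x1 Ha Hu).
assert (Hc : continuity_pt (D a k) x1) by (apply derivable_continuous_pt; exists (D a (S k) x1); exact Hd).
unfold continuity_pt, continue_in, limit1_in, limit_in in Hc.
destruct (Hc (- D a k x1 / 2)) as [alp [Halp H]]; [lra|].
exists alp. split; auto. intros x Hx.
destruct (Req_dec x x1) as [->|Hne]; auto.
assert (Hdx : D_x no_cond x1 x /\ R_dist x x1 < alp).
{ split. split. exact I. auto. unfold R_dist. auto. }
specialize (H x Hdx). simpl in H. unfold R_dist in H. apply abs_lt in H. lra.
Qed.

Definition Bad (a x0 : R) : Prop :=
  exists B, B < x0 /\ forall r, AM_set 4 (psi4coef a) a r -> r <= B.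

Lemma bad_pt a x0 p k : a <> 0 -> -x0 < p <= 0 -> 1 - a*p <> 0 -> D a k p < 0 -> Bad a x0.
Proof.
intros Ha Hp Hu HD. exists (-p). split; [lra|].
intros r Hr. apply (fail_bound a p k); auto; lra.
Qed.

Lemma bad_cont a x0 k : 0 < a -> 0 < x0 -> D a k (-x0) < 0 -> Bad a x0.
Proof.
intros Ha Hx HD.
destruct (cont_neg a k (-x0)) as [eta [Heta H]]; [lra|nra|auto|].
set (p := -x0 + Rmin (eta/2) x0).
assert (H1 : 0 < Rmin (eta/2) x0) by (apply Rmin_pos; lra).
assert (H2 : Rmin (eta/2) x0 <= eta/2) by apply Rmin_l.
assert (H3 : Rmin (eta/2) x0 <= x0) by apply Rmin_r.
apply (bad_pt a x0 p k); [lra| unfold p; lra | unfold p; nra |].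
apply H. unfold p. replace (-x0 + Rmin (eta / 2) x0 - - x0) with (Rmin (eta/2) x0) by ring.
rewrite Rabs_right; lra.
Qed.

Lemma step_eq (f g f' g' : R -> R) : (forall y, f y = g y) ->
  (forall y, derivable_pt_lim f y (f' y)) -> (forall y, derivable_pt_lim g y (g' y)) ->
  forall y, f' y = g' y.
Proof.
intros E Hf Hg y.
apply (uniqueness_limite f y); auto.
apply (deriv_local_ext g f y (g' y) 1); [lra| intros; auto| auto].
Qed.

Lemma am_zero_fail : ~ abs_mon_at 4 (psi4coef 0) 0 (-2).
Proof.
intros [_ [d [H0 [Hd Hk]]]].
assert (Hnp : forall y, ~ is_pole 4 (psi4coef 0) 0 y) by (intros y; apply nonpole_of; lra).
assert (E0 : forall y, d 0%nat y = 1 + y + y^2/2 + y^3/6 + y^4/24).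
{ intros y. rewrite H0 by lra. unfold psi, peval, psi4coef. simpl. fixeq. field. }
assert (E1 : forall y, d 1%nat y = 1 + y + y^2/2 + y^3/6).
{ apply (step_eq (d 0%nat) (fun y => 1 + y + y^2/2 + y^3/6 + y^4/24) (d 1%nat) (fun y => 1 + y + y^2/2 + y^3/6));
  [exact E0 | intros y; apply Hd; auto | intros y; apply dpl; auto_derive; auto; fixeq; field]. }
assert (E2 : forall y, d 2%nat y = 1 + y + y^2/2).
{ apply (step_eq (d 1%nat) (fun y => 1 + y + y^2/2 + y^3/6) (d 2%nat) (fun y => 1 + y + y^2/2));
  [exact E1 | intros y; apply Hd; auto | intros y; apply dpl; auto_derive; auto; fixeq; field]. }
assert (E3 : forall y, d 3%nat y = 1 + y).
{ apply (step_eq (d 2%nat) (fun y => 1 + y + y^2/2) (d 3%nat) (fun y => 1 + y));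
  [exact E2 | intros y; apply Hd; auto | intros y; apply dpl; auto_derive; auto; fixeq; field]. }
specialize (Hk 3%nat). rewrite E3 in Hk. lra.
Qed.

Lemma bad_zero x0 : 2 < x0 -> Bad 0 x0.
Proof.
intros Hx. exists 2. split; auto.
intros r [[Hr HAM]| ->]; [|lra].
destruct (Rle_lt_dec 2 r) as [H|H]; [|lra].
exfalso. apply am_zero_fail. apply HAM. lra.
Qed.

Lemma bad_g1 a x0 : 0 < a -> 0 < x0 -> g1p a x0 < 0 -> Bad a x0.
Proof.
intros Ha Hx H. apply (bad_cont a x0 1); auto.
rewrite D_neg1 by auto. apply Rdiv_neg_pos; auto. apply pow_lt. nra.
Qed.
Lemma bad_g0 a x0 : 0 < a -> 0 < x0 -> g0p a x0 < 0 -> Bad a x0.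
Proof.
intros Ha Hx H. apply (bad_cont a x0 0); auto.
rewrite D_neg0 by auto. apply Rdiv_neg_pos; auto. apply pow_lt. nra.
Qed.

Lemma bad_all a x0 astar : 971/10000 <= astar <= 972/10000 -> 6459/1250 <= x0 <= 51673/10000 ->
  g0p astar x0 = 0 -> g1p astar x0 = 0 -> a <> astar -> Bad a x0.
Proof.
intros Has Hx0 H0 H1 Hne.
destruct (Rlt_le_dec a 0) as [Hn|Hp].
{ apply (bad_pt a x0 0 5); try lra; try (rewrite Rmult_0_r; lra).
  rewrite D_5_0 by lra. apply Rmult_neg_pos; auto.
  pose proof (T5_neg (-a) ltac:(lra)). replace (0 - - a) with a in H by ring. lra. }
destruct (Req_dec a 0) as [->|Hz].
{ apply bad_zero. lra. }
assert (Ha : 0 < a) by lra.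
destruct (Rle_lt_dec a (97/1000)) as [Ha1|Ha1].
{ apply bad_g1; try lra. pose proof (g1_R1 a x0 ltac:(lra) ltac:(lra)). lra. }
destruct (Rlt_le_dec a astar) as [Ha2|Ha2].
{ apply bad_g1; try lra.
  destruct (MVT_cor2 (fun a => g1p a x0) (fun c => dg1a c x0) a astar Ha2) as [c [E Hc]].
  { intros c _. apply dg1a_d. }
  simpl in E. pose proof (dg1_R c x0 ltac:(lra) ltac:(lra)).
  assert (0 < dg1a c x0 * (astar - a)) by (apply Rmult_lt_0_compat; lra). lra. }
assert (Ha3 : astar < a) by lra.
destruct (Rle_lt_dec a (973/10000)) as [Ha4|Ha4].
{ apply bad_g0; try lra.
  destruct (MVT_cor2 (fun a => g0p a x0) (fun c => dg0a c x0) astar a Ha3) as [c [E Hc]].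
  { intros c _. apply dg0a_d. }
  simpl in E. pose proof (dg0_R c x0 ltac:(lra) ltac:(lra)).
  assert (0 < - dg0a c x0 * (a - astar)) by (apply Rmult_lt_0_compat; lra). lra. }
destruct (Rle_lt_dec a (19/100)) as [Ha5|Ha5].
{ apply bad_g0; try lra. pose proof (g0_R2 a x0 ltac:(lra) ltac:(lra)). lra. }
destruct (Rle_lt_dec a (355/1000)) as [Ha6|Ha6].
{ apply (bad_pt a x0 0 7); try lra; try (rewrite Rmult_0_r; lra).
  rewrite D_7_0 by lra. pose proof (T7_R3 a ltac:(lra)).
  assert (0 < a^3) by (apply pow_lt; lra). nra. }
destruct (Rle_lt_dec a (1/2)) as [Ha7|Ha7].
{ apply bad_g1; try lra. pose proof (g1_R4 a x0 ltac:(lra) ltac:(lra)). lra. }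
destruct (Rle_lt_dec a (136/100)) as [Ha8|Ha8].
{ apply bad_g0; try lra. pose proof (g0_R5 a x0 ltac:(lra) ltac:(lra)). lra. }
{ apply (bad_pt a x0 0 5); try lra; try (rewrite Rmult_0_r; lra).
  rewrite D_5_0 by lra. pose proof (T5_R6 a ltac:(lra)). nra. }
Qed.

Lemma uniq_mvt (f f' : R -> R) l h : (forall c, derivable_pt_lim f c (f' c)) ->
  (forall c, l <= c <= h -> f' c <> 0) ->
  forall x y, l <= x <= h -> l <= y <= h -> f x = f y -> x = y.
Proof.
intros Hd Hn x y Hx Hy E.
destruct (Rtotal_order x y) as [Hlt|[Heq|Hgt]]; auto.
- destruct (MVT_cor2 f f' x y Hlt (fun c _ => Hd c)) as [c [E' Hc]].
  exfalso. apply (Hn c); [lra|]. rewrite E in E'.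
  apply (Rmult_eq_reg_r (y - x)); [|lra]. lra.
- destruct (MVT_cor2 f f' y x Hgt (fun c _ => Hd c)) as [c [E' Hc]].
  exfalso. apply (Hn c); [lra|]. rewrite E in E'.
  apply (Rmult_eq_reg_r (x - y)); [|lra]. lra.
Qed.

Lemma cont_apoly : continuity apoly.
Proof. intros x. apply derivable_continuous_pt. exists (dap x). apply dap_d. Qed.
Lemma cont_qpoly : continuity qpoly.
Proof. intros x. apply derivable_continuous_pt. exists (dqp x). apply dqp_d. Qed.

Lemma q_roots x0 : qpoly x0 = 0 -> 129/25 <= x0 <= 517/100 ->
  exists r1 r2, r1 < r2 < x0 /\ qpoly r1 = 0 /\ qpoly r2 = 0 /\
       (forall r, qpoly r = 0 -> r < x0 -> r = r1 \/ r = r2).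
Proof.
intros Hq Hx0.
destruct (IVT qpoly (-2504789749249/1000000000000) (-2504789749247/1000000000000) cont_qpoly)
  as [r1 [Hr1 Hq1]]; [lra| apply q_R1L | apply q_R1H |].
assert (Hcn : continuity (fun x => - qpoly x)) by (apply continuity_opp; apply cont_qpoly).
destruct (IVT (fun x => - qpoly x) (4740907716121/1000000000000) (4740907716123/1000000000000) Hcn)
  as [r2 [Hr2 Hq2]]; [lra| pose proof q_R2L; lra | pose proof q_R2H; lra |].
assert (Hq2' : qpoly r2 = 0) by lra.
exists r1, r2. split; [lra|]. split; auto. split; auto.
intros r Hr Hrx.
destruct (Rle_lt_dec r (-2504789749249/1000000000000)) as [H1|H1].
{ exfalso. pose proof (q_left (-2504789749249/1000000000000 - r) ltac:(lra)).
  replace (-2504789749249/1000000000000 - (-2504789749249/1000000000000 - r)) with r in H by ring. lra. }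
destruct (Rle_lt_dec r (-249/100)) as [H2|H2].
{ left. apply (uniq_mvt qpoly dqp (-2504789749249/1000000000000) (-249/100)); auto; try lra.
  apply dqp_d. intros c Hc. pose proof (dq_1 c Hc). lra. }
destruct (Rle_lt_dec r (473/100)) as [H3|H3].
{ exfalso. pose proof (q_mid r ltac:(lra)). lra. }
destruct (Rle_lt_dec r (19/4)) as [H4|H4].
{ right. apply (uniq_mvt qpoly dqp (473/100) (19/4)); auto; try lra.
  apply dqp_d. intros c Hc. pose proof (dq_2 c Hc). lra. }
destruct (Rle_lt_dec r (129/25)) as [H5|H5].
{ exfalso. pose proof (q_right r ltac:(lra)). lra. }
exfalso.
assert (r = x0).
{ apply (uniq_mvt qpoly dqp (129/25) (517/100)); auto; try lra.
  apply dqp_d. intros c Hc. pose proof (dq_3 c Hc). lra. }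
lra.
Qed.

Lemma a_smallest astar : apoly astar = 0 -> 971/10000 <= astar <= 972/10000 ->
  forall r, apoly r = 0 -> astar <= r.
Proof.
intros Ha Hb r Hr.
destruct (Rle_lt_dec astar r) as [H|H]; auto. exfalso.
destruct (Rle_lt_dec r (971/10000)) as [H1|H1].
{ pose proof (apoly_left (971/10000 - r) ltac:(lra)).
  replace (971/10000 - (971/10000 - r)) with r in H0 by ring. lra. }
assert (r = astar).
{ apply (uniq_mvt apoly dap (971/10000) (243/2500)); auto; try lra.
  apply dap_d. intros c Hc. pose proof (dap_pos c Hc). lra. }
lra.
Qed.

Lemma ub_astar astar x0 : 971/10000 <= astar <= 972/10000 -> 5 <= x0 <= 517/100 ->
  g1p astar x0 = 0 -> forall r, AM_set 4 (psi4coef astar) astar r -> r <= x0.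
Proof.
intros Ha Hx H1 r [[Hr HAM]| ->]; [|lra].
destruct (Rle_lt_dec r x0) as [H|H]; auto. exfalso.
set (p := Rmax (-r) (-x0 - 1/20)).
assert (Hp1 : -r <= p) by apply Rmax_l.
assert (Hp2 : -x0 - 1/20 <= p) by apply Rmax_r.
assert (Hp3 : p < -x0) by (unfold p; apply Rmax_lub_lt; lra).
assert (HD := beyond_astar astar x0 Ha Hx H1 p (conj Hp2 Hp3)).
assert (Hu : 1 - astar * p <> 0) by nra.
pose proof (D_of_am astar p ltac:(lra) Hu (HAM p ltac:(lra)) 1). lra.
Qed.

Lemma x0_in_AM astar x0 : 971/10000 <= astar <= 972/10000 -> 5 <= x0 <= 517/100 ->
  g0p astar x0 = 0 -> g1p astar x0 = 0 -> AM_set 4 (psi4coef astar) astar x0.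
Proof.
intros Ha Hx H0 H1. left. split; [lra|].
intros x Hxi. apply am_of_D; [lra|nra|].
apply (lower_astar astar x0); auto.
Qed.

Lemma lt_abs x b : -b < x < b -> Rabs x < b.
Proof. unfold Rabs; destruct Rcase_abs; lra. Qed.

Theorem mainTheorem20 :
  (forall c a, inPi 4 4 c a ->
     exists a', forall z, 1 - a * z <> 0 -> 1 - a' * z <> 0 ->
       psi 4 c a z = psi 4 (psi4coef a') a' z) /\
  exists x0 astar : R,
    (* x0 is the third smallest real root of qpoly *)
    (qpoly x0 = 0 /\
     exists r1 r2, r1 < r2 < x0 /\ qpoly r1 = 0 /\ qpoly r2 = 0 /\
       (forall r, qpoly r = 0 -> r < x0 -> r = r1 \/ r = r2)) /\
    Rabs (x0 - 5167265421 / 1000000000) < 1 / 1000000000 /\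
    (* astar is the smallest real root of apoly *)
    (apoly astar = 0 /\ forall r, apoly r = 0 -> astar <= r) /\
    Rabs (astar - 971331276 / 10000000000) < 1 / 10000000000 /\
    (* \hat R_{4/4,4} = x0 *)
    is_lub (Rhat_set 4 4) x0 /\
    (* attained at a = astar ... *)
    inPi 4 4 (psi4coef astar) astar /\
    is_lub (AM_set 4 (psi4coef astar) astar) x0 /\
    (* ... and only there *)
    (forall c a, inPi 4 4 c a -> is_lub (AM_set 4 c a) x0 -> a = astar).
Proof.
assert (Hrep : forall c a, inPi 4 4 c a -> c = psi4coef a).
{ intros c a H. apply functional_extensionality. apply rep; auto. }
split.
{ intros c a H. exists a. intros z _ _. rewrite (Hrep c a H). reflexivity. }
destruct (IVT apoly (971331276414471/10000000000000000) (121416409551809/1250000000000000) cont_apoly)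
  as [astar [Has Hap]]; [lra | apply apoly_AL | apply apoly_AH |].
set (x0 := Xp astar).
assert (HxL := XpL astar Has). assert (HxH := XpH astar Has).
fold x0 in HxL, HxH.
assert (H0 : g0p astar x0 = 0) by (unfold x0; rewrite g0_id, Hap; ring).
assert (H1 : g1p astar x0 = 0) by (unfold x0; rewrite g1_id, Hap; ring).
assert (Hq : qpoly x0 = 0) by (unfold x0; rewrite q_id, Hap; ring).
assert (Ha : 971/10000 <= astar <= 972/10000) by lra.
assert (Hx : 5 <= x0 <= 517/100) by lra.
assert (HxB : 6459/1250 <= x0 <= 51673/10000) by lra.
assert (Hmem : AM_set 4 (psi4coef astar) astar x0) by (apply x0_in_AM; auto).
assert (Hub : forall a r, AM_set 4 (psi4coef a) a r -> r <= x0).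
{ intros a r Hr. destruct (Req_dec a astar) as [->|Hne].
  - apply (ub_astar astar x0); auto.
  - destruct (bad_all a x0 astar Ha HxB H0 H1 Hne) as [B [HB HB']].
    specialize (HB' r Hr). lra. }
exists x0, astar.
split; [|split; [|split; [|split; [|split; [|split; [|split]]]]]].
- split; auto. apply q_roots; auto. lra.
- apply lt_abs. lra.
- split; auto. apply a_smallest; auto.
- apply lt_abs. lra.
- split.
  + intros r [c [a [Hpi Hr]]]. rewrite (Hrep c a Hpi) in Hr. apply (Hub a r Hr).
  + intros b Hb. apply Hb. exists (psi4coef astar), astar. split; auto. apply inPi_psi4.
- apply inPi_psi4.
- split.
  + intros r Hr. apply (Hub astar r Hr).
  + intros b Hb. apply Hb. auto.
- intros c a Hpi [Hu Hl]. rewrite (Hrep c a Hpi) in Hu, Hl.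
  destruct (Req_dec a astar) as [|Hne]; auto. exfalso.
  destruct (bad_all a x0 astar Ha HxB H0 H1 Hne) as [B [HB HB']].
  specialize (Hl B HB'). lra.
Qed.
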